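(* In the setting described in the context, let $\langle A\rangle^{(l)}_{A_n}=K/(\tau\Delta r)$ be the average over a bulk site $A_n$ of a $T^1$-type local quantity $A^{(l)}(f,m,\hat C)$ with $m=2m'+1$ odd ($m'\ge0$) and with $\epsilon=-1$ or $\delta=1$. Then, writing $\hat C,\hat C_\rho$ for $\hat C(\rho^{(l)}_n)$ and $\frac{d\hat C}{d\rho}(\rho^{(l)}_n)$, $$\langle A\rangle^{(l)}_{A_n}=\Delta r^{m-1}\Big\{T_1+T_2+T_3\Big\}+\text{(terms of higher order in }\Delta r),$$ where $$T_1=-(1+\epsilon(-1)^m)\frac{v\hat C}{2^m}\Big[(\delta+1)\sum_{p=0}^{m'}\binom{m}{2p}X_{1,0}^{2p}X_{0,1}^{2(m'-p)+1}S_\nu(2p)+(\delta-1)\sum_{p=0}^{m'}\binom{m}{2p+1}X_{1,0}^{2p+1}X_{0,1}^{2(m'-p)}S_\nu(2(m'-p))\Big],$$ $$T_2=(\delta+1)\frac{D}{2^m}\hat C_\rho\Big[\sum_{p=0}^{m'}\binom{m}{2p}X_{1,0}^{2p}X_{0,1}^{2(m'-p)+1}\big(Y^{(1)}_{0,1}-\epsilon Y^{(2)}_{0,1}\big)S_\nu(2p)+\sum_{p=0}^{m'}\binom{m}{2p+1}X_{1,0}^{2p+1}X_{0,1}^{2(m'-p)}\big(Y^{(1)}_{1,0}-\epsilon Y^{(2)}_{1,0}\big)S_\nu(2(m'-p))\Big],$$ $$T_3=(\delta+1)\frac{mD}{2^m}\hat C\Big\{\sum_{p=0}^{m'}\binom{2m'}{2p}X_{1,0}^{2p}X_{0,1}^{2(m'-p)}\Big[X^{(1)}_{2,0}S_\nu(2(m'-p))+X^{(1)}_{0,2}S_\nu(2p)-\epsilon\big(X^{(2)}_{2,0}S_\nu(2(m'-p))+X^{(2)}_{0,2}S_\nu(2p)\big)\Big]+\beta\sum_{p=0}^{m'-1}\binom{2m'}{2p+1}X_{1,0}^{2p+1}X_{0,1}^{2(m'-p)-1}\big(X^{(1)}_{1,1}-\epsilon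 X^{(2)}_{1,1}\big)\Big\}.$$
   Context: Setting (UOFP-type multibaker chain, bulk). Fix $D>0$, $v\in\mathbb R$, a time step $\tau>0$ and a site width $\Delta r>0$; put $\beta=2\tau D/\Delta r^2$ and $Pe_g=v\Delta r/D$. The bulk transition probabilities are $\eta(0)=\frac{\beta}{2}(1-\frac{Pe_g}{2})$, $\eta(1)=1-\beta$, $\eta(2)=\frac{\beta}{2}(1+\frac{Pe_g}{2})$, and $\nu(\omega)=\eta(2-\omega)$ for $\omega\in\{0,1,2\}$; all are assumed positive. As $\Delta r\to0$, $\beta=O(\Delta r^{b})$ for some $b\ge0$. Write $I_\omega=1-\omega$. Sites are indexed by integers $n$; each site is a rectangle of width $\Delta r$ and height $h$, partitioned (Markov partition) into cells $(n,\underline\omega_k)$, $\underline\omega_k=\omega_0\cdots\omega_{k-1}$ a $k$-digit trit string ($k\ge1$ fixed), of volume $\Delta r\,h\,\nu(\underline\omega_k)$, $\nu(\underline\omega_k)=\prod_j\nu(\omega_j)$. Write $\overleftarrow{\underline\omega}_{k-1}=\omega_1\cdots\omega_{k-1}$. $\rho^{(l)}(n,\underline\omega_k)$ is the probability of cell $(n,\underline\omega_k)$ at step $l$ divided by its volume. In the bulk, $\rho^{(l)}(n,\underline\omega_k)=\frac{\eta(\omega_0)}{\nu(\omega_0)}\rho^{(l-1)}(n+1-\omega_0,\overleftarrow{\underline\omega}_{k-1})$ and the expansion rate of cell $(n,\underline\omega_k)$ is $\nu(\omega_0)/\eta(\omega_0)$. Continuum limit: $\Delta r\to0$ with $k$ fixed;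 site densities come from a smooth field $\rho(r,t)$, and $\rho^{(l)}_n$, $(\rho_r)^{(l)}_n$, $(\rho_{rr})^{(l)}_n$ denote $\rho$, $\partial_r\rho$, $\partial_r^2\rho$ at $r=n\Delta r$, $t=l\tau$; formal Taylor expansions in $\Delta r$ of $\rho^{(l-1)}(n+1-\omega_0,\cdot)$ about $\rho^{(l-1)}(n,\cdot)$ are assumed valid, and for families $B$ obeying the same recursion as $\rho$ and smooth $g$, $\sum_{\overleftarrow{\underline\omega}_{k-1}}\nu(\overleftarrow{\underline\omega}_{k-1})g(B^{(l-1)}_n(\overleftarrow{\underline\omega}_{k-1}))=g(B^{(l)}_n)+O(\Delta r)$. $T^1$-type local quantity: for cells $i,j$, $\tilde W_{ji}=W_{ji}\Delta V_i$ ($W_{ji}$ the transition probability $i\to j$, $\Delta V_i$ the volume), $e_i=\Delta V_i/\sum_k\tilde W_{ik}$, signs $\epsilon,\delta\in\{\pm1\}$, $A^{(l)}_{ij}=[(1+\delta e_j)\tilde W_{ji}+\epsilon(1+\delta e_i)\tilde W_{ij}]f(\rho_j^{(l)},\rho_i^{(l)})$, $A_i^{(l)}=\sum_jA_{ij}^{(l)}$, where $f$ is $C^\infty$, symmetric or antisymmetric, and with $X=(x-y)/2$, $Y=(x+y)/2$, $f(x,y)=\hat C(Y)X^m+C^{(m+2)}(Y)X^{m+2}+\cdots$ near $X=0$ for a nonnegative integer $m$ and a nonzero bounded smooth function $\hat C$. The average on a union $R$ of cells is $\langle A\rangle^{(l)}_R=\frac{1}{\tau\Delta V_R}\sum_{i\subset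 R}A^{(l)}_i$; on a bulk site it equals $K/(\tau\Delta r)$ with $K=\sum_\omega\sum_{\underline\omega_k}(\eta(\omega)+\delta\nu(\omega))\nu(\underline\omega_k)[F_n^{(l)}+\epsilon(-1)^mF^{(l)}_{n+1-\omega}](\omega,\underline\omega_k)\Delta r$, $F^{(l)}_n(\omega,\underline\omega_k)=f\big(\frac{\eta(\omega)}{\nu(\omega)}\rho^{(l-1)}(n,\overleftarrow{\underline\omega}_{k-1}),\frac{\eta(\omega_0)}{\nu(\omega_0)}\rho^{(l-1)}(n+1-\omega_0,\overleftarrow{\underline\omega}_{k-1})\big)$. Notation (all evaluated at site $n$, step $l$; write $\rho=\rho^{(l)}_n$, $\rho_r=(\rho_r)^{(l)}_n$, $\rho_{rr}=(\rho_{rr})^{(l)}_n$): $X_{1,0}=\frac{v}{D}\rho$, $X_{0,1}=-\frac{v}{D}\rho+\rho_r$; $Y^{(1)}_{1,0}=\frac vD\rho$, $Y^{(2)}_{1,0}=\frac vD\rho-2\rho_r$, $Y^{(1)}_{0,1}=Y^{(2)}_{0,1}=\frac vD\rho-\rho_r$; $X^{(1)}_{2,0}=(\frac vD)^2\rho$, $X^{(2)}_{2,0}=(\frac vD)^2\rho-\frac{2v}{D}\rho_r$; $X^{(1)}_{1,1}=0$, $X^{(2)}_{1,1}=\frac{2v}{D}\rho_r-2\rho_{rr}$; $X^{(1)}_{0,2}=X^{(2)}_{0,2}=-(\frac vD)^2\rho+\frac{2v}{D}\rho_r-\rho_{rr}$. For an integer $a$, $S_\nu(a)=1$ if $a=0$,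 $S_\nu(a)=\beta Pe_g/2$ if $a$ is odd, $S_\nu(a)=\beta$ if $a\ne0$ is even. Empty sums ($\sum_{p=a}^b$ with $b<a$) are zero. *)

(* Defs.v *)
From Stdlib Require Import Reals Lra Lia ZArith List.
Import ListNotations.
Open Scope R_scope.

(* digits omega are encoded as naturals 0,1,2 *)
Definition eta (beta Peg : R) (w : nat) : R :=
  match w with
  | O => beta / 2 * (1 - Peg / 2)
  | S O => 1 - beta
  | _ => beta / 2 * (1 + Peg / 2)
  end.

Definition nu (beta Peg : R) (w : nat) : R := eta beta Peg (2 - w).

Definition Iw (w : nat) : Z := (1 - Z.of_nat w)%Z.

Fixpoint trits (k : nat) : list (list nat) :=
  match k with
  | O => [[]]
  | S k' => flat_map (fun w => map (fun x => x :: w) [0%nat; 1%nat; 2%nat]) (trits k')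
  end.

Definition lsum {A : Type} (l : list A) (g : A -> R) : R :=
  fold_right (fun a acc => g a + acc) 0 l.

Fixpoint sumlt (N : nat) (g : nat -> R) : R :=
  match N with
  | O => 0
  | S N' => sumlt N' g + g N'
  end.

Definition nuw (beta Peg : R) (w : list nat) : R :=
  fold_right (fun x acc => nu beta Peg x * acc) 1 w.

(* cell densities: rho^(l)(n, omega_0 ... omega_{j-1}) obtained from the
   bulk recursion rho^(l)(n, w0 :: w') = eta(w0)/nu(w0) rho^(l-1)(n+1-w0, w'),
   the empty string giving the site density sd n l = rho^(l)_n *)
Fixpoint celldens (beta Peg : R) (sd : Z -> Z -> R) (l n : Z) (w : list nat) : R :=
  match w with
  | [] => sd n l
  | x :: w' => eta beta Peg x / nu beta Peg x * celldens beta Peg sd (l - 1)%Z (n + Iw x)%Z w'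
  end.

Definition Ffun (beta Peg : R) (f : R -> R -> R) (sd : Z -> Z -> R) (l n : Z)
    (w : nat) (wk : list nat) : R :=
  match wk with
  | [] => 0
  | w0 :: wp =>
      f (eta beta Peg w / nu beta Peg w * celldens beta Peg sd (l - 1)%Z n wp)
        (eta beta Peg w0 / nu beta Peg w0 * celldens beta Peg sd (l - 1)%Z (n + Iw w0)%Z wp)
  end.

Definition Kval (D v beta dr : R) (k m : nat) (eps delta : R) (f : R -> R -> R)
    (sd : Z -> Z -> R) (n l : Z) : R :=
  let Peg := v * dr / D in
  lsum [0%nat; 1%nat; 2%nat] (fun w =>
    lsum (trits k) (fun wk =>
      (eta beta Peg w + delta * nu beta Peg w) * nuw beta Peg wk *
      (Ffun beta Peg f sd l n w wk + eps * (-1) ^ m * Ffun beta Peg f sd l (n + Iw w)%Z w wk)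
      * dr)).

Definition tau_of (D beta dr : R) : R := beta * dr ^ 2 / (2 * D).

Definition avgA (D v beta dr : R) (k m : nat) (eps delta : R) (f : R -> R -> R)
    (sd : Z -> Z -> R) (n l : Z) : R :=
  Kval D v beta dr k m eps delta f sd n l / (tau_of D beta dr * dr).

Definition Snu (beta Peg : R) (a : nat) : R :=
  if Nat.eqb a 0 then 1 else if Nat.odd a then beta * Peg / 2 else beta.

(* T1 + T2 + T3, with rho, rho_r, rho_rr, Chat, Chat_rho given as numbers and
   m = 2 m' + 1 *)
Definition Tsum (D v beta Peg eps delta : R) (m' : nat)
    (rho rr rrr Ch Chr : R) : R :=
  let m := (2 * m' + 1)%nat in
  let X10 := v / D * rho in
  let X01 := - (v / D) * rho + rr in
  let Y110 := v / D * rho in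
  let Y210 := v / D * rho - 2 * rr in
  let Y101 := v / D * rho - rr in
  let Y201 := v / D * rho - rr in
  let X120 := (v / D) ^ 2 * rho in
  let X220 := (v / D) ^ 2 * rho - 2 * v / D * rr in
  let X111 := 0 in
  let X211 := 2 * v / D * rr - 2 * rrr in
  let X102 := - (v / D) ^ 2 * rho + 2 * v / D * rr - rrr in
  let X202 := - (v / D) ^ 2 * rho + 2 * v / D * rr - rrr in
  let Sv := Snu beta Peg in
  let T1 :=
    - (1 + eps * (-1) ^ m) * (v * Ch / 2 ^ m) *
      ((delta + 1) * sumlt (Datatypes.S m') (fun p =>
          Binomial.C m (2 * p) * X10 ^ (2 * p) * X01 ^ (2 * (m' - p) + 1) * Sv (2 * p)%nat)
     + (delta - 1) * sumlt (Datatypes.S m') (fun p =>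
          Binomial.C m (2 * p + 1) * X10 ^ (2 * p + 1) * X01 ^ (2 * (m' - p))
          * Sv (2 * (m' - p))%nat)) in
  let T2 :=
    (delta + 1) * (D / 2 ^ m) * Chr *
      (sumlt (Datatypes.S m') (fun p =>
          Binomial.C m (2 * p) * X10 ^ (2 * p) * X01 ^ (2 * (m' - p) + 1)
          * (Y101 - eps * Y201) * Sv (2 * p)%nat)
     + sumlt (Datatypes.S m') (fun p =>
          Binomial.C m (2 * p + 1) * X10 ^ (2 * p + 1) * X01 ^ (2 * (m' - p))
          * (Y110 - eps * Y210) * Sv (2 * (m' - p))%nat)) in
  let T3 :=
    (delta + 1) * (INR m * D / 2 ^ m) * Ch *
      (sumlt (Datatypes.S m') (fun p =>
          Binomial.C (2 * m') (2 * p) * X10 ^ (2 * p) * X01 ^ (2 * (m' - p)) *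
          (X120 * Sv (2 * (m' - p))%nat + X102 * Sv (2 * p)%nat
           - eps * (X220 * Sv (2 * (m' - p))%nat + X202 * Sv (2 * p)%nat)))
     + beta * sumlt m' (fun p =>
          Binomial.C (2 * m') (2 * p + 1) * X10 ^ (2 * p + 1) * X01 ^ (2 * (m' - p) - 1)
          * (X111 - eps * X211))) in
  T1 + T2 + T3.

Definition smooth1 (F : R -> R) : Prop :=
  exists d : nat -> R -> R, d O = F /\
    forall (j : nat) (x : R), derivable_pt_lim (d j) x (d (S j) x).

Definition continuous2 (g : R -> R -> R) : Prop :=
  forall x y e, 0 < e -> exists d, 0 < d /\
    forall x' y', Rabs (x' - x) < d -> Rabs (y' - y) < d ->
      Rabs (g x' y' - g x y) < e.

Definition smooth2 (g : R -> R -> R) : Prop :=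
  exists d : nat -> nat -> R -> R -> R, d O O = g /\
    (forall i j x y,
        derivable_pt_lim (fun s => d i j s y) x (d (S i) j x y) /\
        derivable_pt_lim (fun s => d i j x s) y (d i (S j) x y)) /\
    (forall i j, continuous2 (d i j)).

(* Main.v *)
Require Import Defs.
From Stdlib Require Import Reals Lra Lia ZArith List Psatz Classical ClassicalEpsilon FunctionalExtensionality.
From Coquelicot Require Import Compactness.
Import ListNotations.
Open Scope R_scope.

Lemma lsum_nil {A} (g : A -> R) : lsum [] g = 0.
Proof. reflexivity. Qed.
Lemma lsum_cons {A} (a : A) l g : lsum (a :: l) g = g a + lsum l g.
Proof. reflexivity. Qed.
Lemma lsum_app {A} (l1 l2 : list A) g : lsum (l1 ++ l2) g = lsum l1 g + lsum l2 g.
Proof. induction l1; simpl; [ring|]. unfold lsum in *; simpl; rewrite IHl1; ring. Qed.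
Lemma lsum_map {A B} (h : A -> B) l g : lsum (map h l) g = lsum l (fun a => g (h a)).
Proof. induction l; [reflexivity|]. unfold lsum in *; simpl; rewrite IHl; ring. Qed.
Lemma lsum_flat_map {A B} (h : A -> list B) l g :
  lsum (flat_map h l) g = lsum l (fun a => lsum (h a) g).
Proof. induction l; [reflexivity|]. simpl. rewrite lsum_app. unfold lsum in *; simpl; rewrite IHl; ring. Qed.
Lemma lsum_ext {A} (l : list A) g1 g2 : (forall a, In a l -> g1 a = g2 a) -> lsum l g1 = lsum l g2.
Proof. induction l; intros H; [reflexivity|]. unfold lsum in *; simpl.
  rewrite H by (left; reflexivity). rewrite IHl; [ring|]. intros; apply H; right; auto. Qed.
Lemma lsum_plus {A} (l : list A) g1 g2 : lsum l (fun a => g1 a + g2 a) = lsum l g1 + lsum l g2.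
Proof. induction l; [unfold lsum; simpl; ring|]. unfold lsum in *; simpl; rewrite IHl; ring. Qed.
Lemma lsum_scal {A} (l : list A) c g : lsum l (fun a => c * g a) = c * lsum l g.
Proof. induction l; [unfold lsum; simpl; ring|]. unfold lsum in *; simpl; rewrite IHl; ring. Qed.
Lemma lsum_le {A} (l : list A) g1 g2 : (forall a, In a l -> g1 a <= g2 a) -> lsum l g1 <= lsum l g2.
Proof. induction l; intros H; [unfold lsum; simpl; lra|]. unfold lsum in *; simpl.
  assert (g1 a <= g2 a) by (apply H; left; auto).
  assert (fold_right (fun a0 acc => g1 a0 + acc) 0 l <= fold_right (fun a0 acc => g2 a0 + acc) 0 l)
   by (apply IHl; intros; apply H; right; auto). lra. Qed.
Lemma lsum_abs {A} (l : list A) g : Rabs (lsum l g) <= lsum l (fun a => Rabs (g a)).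
Proof. induction l; [unfold lsum; simpl; rewrite Rabs_R0; lra|]. unfold lsum in *; simpl.
  eapply Rle_trans; [apply Rabs_triang|]. lra. Qed.

Lemma lsum_trits_S k (g : list nat -> R) :
  lsum (trits (S k)) g = lsum (trits k) (fun wp => g (0%nat :: wp) + g (1%nat :: wp) + g (2%nat :: wp)).
Proof. simpl. rewrite lsum_flat_map. apply lsum_ext. intros a _. unfold lsum; simpl. ring. Qed.

Lemma trits_prop k wp : In wp (trits k) -> length wp = k /\ Forall (fun x => x = 0%nat \/ x = 1%nat \/ x = 2%nat) wp.
Proof.
  revert wp; induction k; intros wp H.
  - simpl in H. destruct H as [H|[]]. subst. split; auto.
  - simpl in H. apply in_flat_map in H. destruct H as [w [Hw Hin]].
    destruct (IHk w Hw) as [H1 H2]. simpl in Hin.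
    destruct Hin as [<-|[<-|[<-|[]]]]; simpl; split; try lia; constructor; auto.
Qed.

Definition sigZ (w : list nat) : Z := fold_right (fun x acc => (Iw x + acc)%Z) 0%Z w.
Definition sigR (w : list nat) : R := IZR (sigZ w).

Lemma nuw_cons b P x w : nuw b P (x :: w) = nu b P x * nuw b P w.
Proof. reflexivity. Qed.

Lemma nu_sum b P : nu b P 0 + nu b P 1 + nu b P 2 = 1.
Proof. unfold nu, eta; simpl. field. Qed.

Lemma lsum_nuw k b P : lsum (trits k) (nuw b P) = 1.
Proof. induction k. unfold lsum, nuw; simpl; ring. rewrite lsum_trits_S.
  rewrite <- IHk. apply lsum_ext. intros. rewrite !nuw_cons.
  pose proof (nu_sum b P). nra. Qed.

Lemma lsum_nuw_sig k b P : lsum (trits k) (fun wp => nuw b P wp * sigR wp) = INR k * (nu b P 0 - nu b P 2).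
Proof. induction k. unfold lsum, nuw, sigR, sigZ; simpl; ring. rewrite lsum_trits_S.
  transitivity (lsum (trits k) (fun wp => nuw b P wp * sigR wp + (nu b P 0 - nu b P 2) * nuw b P wp)).
  - apply lsum_ext. intros. rewrite !nuw_cons. unfold sigR.
    assert (E : forall x, sigZ (x :: a) = (Iw x + sigZ a)%Z) by reflexivity.
    rewrite !E, !plus_IZR. unfold Iw. simpl Z.of_nat.
    replace (IZR (1 - 0)) with 1 by (simpl; ring). replace (IZR (1 - 1)) with 0 by (simpl; ring).
    replace (IZR (1-2)) with (-1) by (simpl; ring). pose proof (nu_sum b P). nra.
  - rewrite lsum_plus, lsum_scal, IHk, lsum_nuw. rewrite S_INR. ring.
Qed.

Lemma nuw_nonneg b P wp : 0 <= nu b P 0 -> 0 <= nu b P 1 -> 0 <= nu b P 2 ->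
  Forall (fun x => x = 0%nat \/ x = 1%nat \/ x = 2%nat) wp -> 0 <= nuw b P wp.
Proof. intros H0 H1 H2 HF. induction HF. unfold nuw; simpl; lra.
  rewrite nuw_cons. apply Rmult_le_pos; auto. destruct H as [-> | [-> | ->] ]; auto. Qed.

Definition qq b P (x : nat) : R := eta b P x / nu b P x.
Definition cprod b P (w : list nat) : R := fold_right (fun x acc => qq b P x * acc) 1 w.

Lemma celldens_eq b P sd w : forall l n,
  celldens b P sd l n w = cprod b P w * sd (n + sigZ w)%Z (l - Z.of_nat (length w))%Z.
Proof.
  induction w; intros l n; simpl.
  - rewrite Rmult_1_l. f_equal; lia.
  - rewrite IHw. unfold qq. rewrite Rmult_assoc. f_equal. f_equal. f_equal. lia. lia.
Qed.

Lemma mvt_bound (phi phi' : R -> R) (Sd c : R) (j : nat) :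
  0 <= c ->
  (forall s, -Sd <= s <= Sd -> derivable_pt_lim phi s (phi' s)) ->
  (forall s, -Sd <= s <= Sd -> Rabs (phi' s) <= c * Rabs s ^ j) ->
  forall s, -Sd <= s <= Sd -> Rabs (phi s - phi 0) <= c * Rabs s ^ (S j).
Proof.
  intros Hc Hd Hb s Hs.
  destruct (Rtotal_order s 0) as [Hlt|[Heq|Hgt]].
  - destruct (MVT_cor2 phi phi' s 0 Hlt) as [x [Hx1 Hx2]].
    { intros; apply Hd; lra. }
    replace (phi s - phi 0) with (- (phi 0 - phi s)) by ring. rewrite Rabs_Ropp, Hx1.
    rewrite Rabs_mult. simpl. rewrite (Rabs_left s Hlt). replace (0 - s) with (-s) by ring.
    rewrite (Rabs_pos_eq (-s)) by lra.
    assert (Hx : Rabs (phi' x) <= c * Rabs x ^ j) by (apply Hb; lra).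
    assert (Rabs x ^ j <= (-s) ^ j) by (apply pow_incr; split; [apply Rabs_pos|]; rewrite Rabs_left; lra).
    assert (0 <= Rabs x ^ j) by (apply pow_le, Rabs_pos).
    apply Rle_trans with (c * Rabs x ^ j * - s); [apply Rmult_le_compat_r; lra|].
    replace (c * (- s * (- s) ^ j)) with (c * (-s)^j * -s) by ring.
    apply Rmult_le_compat_r; [lra|]. apply Rmult_le_compat_l; lra.
  - subst. rewrite Rminus_diag, Rabs_R0. simpl. nra.
  - destruct (MVT_cor2 phi phi' 0 s Hgt) as [x [Hx1 Hx2]].
    { intros; apply Hd; lra. }
    rewrite Hx1, Rabs_mult. simpl. replace (s - 0) with s by ring.
    rewrite (Rabs_pos_eq s) by lra.
    assert (Hx : Rabs (phi' x) <= c * Rabs x ^ j) by (apply Hb; lra).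
    assert (Rabs x ^ j <= s ^ j) by (apply pow_incr; split; [apply Rabs_pos|]; rewrite Rabs_pos_eq; lra).
    assert (0 <= Rabs x ^ j) by (apply pow_le, Rabs_pos).
    apply Rle_trans with (c * Rabs x ^ j * s); [apply Rmult_le_compat_r; lra|].
    replace (c * (s * s ^ j)) with (c * s^j * s) by ring.
    apply Rmult_le_compat_r; [lra|]. apply Rmult_le_compat_l; lra.
Qed.

Lemma abs_le_b x a : Rabs x <= a -> -a <= x <= a.
Proof. intros H. unfold Rabs in H. destruct (Rcase_abs x); lra. Qed.

Lemma cont2_bounded (g : R -> R -> R) : continuous2 g ->
  forall R0 T0, exists B, forall x y, Rabs x <= R0 -> Rabs y <= T0 -> Rabs (g x y) <= B.
Proof.
  intros Hg R0 T0.
  assert (HD : forall p : Tn 2 R, {d : posreal | forall x' y', Rabs (x' - fst p) < d -> Rabs (y' - fst (snd p)) < d ->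
     Rabs (g x' y' - g (fst p) (fst (snd p))) < 1}).
  { intros p. apply constructive_indefinite_description.
    destruct (Hg (fst p) (fst (snd p)) 1 Rlt_0_1) as [d [Hd1 Hd2]].
    exists (mkposreal d Hd1). simpl. exact Hd2. }
  set (delta := fun p => proj1_sig (HD p)).
  apply NNPP. intro Hn.
  apply (compactness_list 2 (-R0, (-T0, tt)) (R0, (T0, tt)) delta). intros [l Hl].
  apply Hn.
  exists (fold_right (fun p acc => Rmax (Rabs (g (fst p) (fst (snd p))) + 1) acc) 0 l).
  intros x y Hx Hy.
  destruct (Hl (x, (y, tt))) as [t [Ht1 [Ht2 Ht3]]].
  { simpl. apply abs_le_b in Hx. apply abs_le_b in Hy. tauto. }
  destruct t as [t1 [t2 []]]. simpl in Ht3. destruct Ht3 as [Hc1 [Hc2 _]].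
  pose proof (proj2_sig (HD (t1, (t2, tt))) x y) as Hc. simpl in Hc.
  unfold delta in Hc1, Hc2. simpl in Hc1, Hc2.
  specialize (Hc Hc1 Hc2).
  assert (Hm : forall l0, In (t1, (t2, tt)) l0 -> Rabs (g t1 t2) + 1 <=
     fold_right (fun p acc => Rmax (Rabs (g (fst p) (fst (snd p))) + 1) acc) 0 l0).
  { induction l0; simpl; [tauto|]; intros [H|H]. subst; simpl. apply Rmax_l.
    eapply Rle_trans; [apply IHl0; auto| apply Rmax_r]. }
  specialize (Hm l Ht1).
  assert (Rabs (g x y) <= Rabs (g t1 t2) + Rabs (g x y - g t1 t2)).
  { replace (g x y) with (g t1 t2 + (g x y - g t1 t2)) at 1 by ring. apply Rabs_triang. }
  lra.
Qed.

Lemma cont1_bounded (F : R -> R) M : (forall x, continuity_pt F x) ->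
  exists B, forall x, Rabs x <= M -> Rabs (F x) <= B.
Proof.
  intros HF. destruct (Rle_dec (-M) M) as [HM|HM].
  - destruct (continuity_ab_maj F (-M) M HM) as [x1 [H1 _]]. intros; auto.
    destruct (continuity_ab_min F (-M) M HM) as [x2 [H2 _]]. intros; auto.
    exists (Rabs (F x1) + Rabs (F x2)). intros x Hx. apply abs_le_b in Hx.
    specialize (H1 x Hx). specialize (H2 x Hx).
    pose proof (Rabs_pos (F x1)). pose proof (Rabs_pos (F x2)).
    apply Rabs_le. split.
    + pose proof (Rle_abs (-F x2)). rewrite Rabs_Ropp in H3. lra.
    + pose proof (Rle_abs (F x1)). lra.
  - exists 0. intros x Hx. pose proof (Rabs_pos x). lra.
Qed.

Lemma dpl_ext f g x l : (forall s, f s = g s) -> derivable_pt_lim f x l -> derivable_pt_lim g x l.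
Proof. intros E H. replace g with f; auto. apply functional_extensionality; auto. Qed.

Lemma dpl_shift F x s l : derivable_pt_lim F (x + s) l -> derivable_pt_lim (fun s => F (x + s)) s l.
Proof. unfold derivable_pt_lim. intros H eps He. destruct (H eps He) as [d Hd]. exists d.
  intros h Hh Hhd. replace (x + (s + h)) with (x + s + h) by ring. apply Hd; auto. Qed.

Lemma taylor2 (d0 d1 d2 d3 : R -> R) (x B : R) :
  0 <= B ->
  (forall y, x - 1 <= y <= x + 1 -> derivable_pt_lim d0 y (d1 y)) ->
  (forall y, x - 1 <= y <= x + 1 -> derivable_pt_lim d1 y (d2 y)) ->
  (forall y, x - 1 <= y <= x + 1 -> derivable_pt_lim d2 y (d3 y)) ->
  (forall y, x - 1 <= y <= x + 1 -> Rabs (d3 y) <= B) ->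
  forall s, Rabs s <= 1 -> Rabs (d0 (x + s) - d0 x - s * d1 x - s * s / 2 * d2 x) <= B * Rabs s ^ 3.
Proof.
  intros HB H0 H1 H2 H3 s Hs.
  assert (Hi : forall s, -1 <= s <= 1 -> Rabs (d2 (x + s) - d2 (x + 0)) <= B * Rabs s ^ 1).
  { apply (mvt_bound (fun s => d2 (x + s)) (fun s => d3 (x + s)) 1 B 0); auto.
    - intros; apply dpl_shift; apply H2; lra.
    - intros; simpl; rewrite Rmult_1_r; apply H3; lra. }
  assert (Hii : forall s, -1 <= s <= 1 ->
     Rabs ((d1 (x + s) - s * d2 x) - (d1 (x + 0) - 0 * d2 x)) <= B * Rabs s ^ 2).
  { apply (mvt_bound (fun s => d1 (x + s) - s * d2 x) (fun s => d2 (x + s) - d2 (x + 0)) 1 B 1); auto.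
    - intros s0 Hs0. apply (derivable_pt_lim_minus (fun s => d1 (x + s)) (fun s => s * d2 x)).
      + apply dpl_shift; apply H1; lra.
      + replace (d2 (x + 0)) with (1 * d2 x) by (rewrite Rplus_0_r; ring).
        apply (dpl_ext (mult_real_fct (d2 x) id)). intros; unfold mult_real_fct, id; ring.
        replace (1 * d2 x) with (d2 x * 1) by ring. apply derivable_pt_lim_scal, derivable_pt_lim_id. }
  assert (Hiii : forall s, -1 <= s <= 1 ->
     Rabs ((d0 (x + s) - s * d1 x - s * s / 2 * d2 x) - (d0 (x + 0) - 0 * d1 x - 0 * 0 / 2 * d2 x)) <= B * Rabs s ^ 3).
  { apply (mvt_bound (fun s => d0 (x + s) - s * d1 x - s * s / 2 * d2 x)
      (fun s => (d1 (x + s) - s * d2 x) - (d1 (x + 0) - 0 * d2 x)) 1 B 2); auto.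
    intros s0 Hs0.
    apply (dpl_ext (fun s => d0 (x + s) - (mult_real_fct (d1 x) id s + mult_real_fct (d2 x / 2) (fun y => y ^ 2) s))).
    { intros; unfold mult_real_fct, id; simpl; field. }
    replace ((d1 (x + s0) - s0 * d2 x) - (d1 (x + 0) - 0 * d2 x)) with
      (d1 (x + s0) - (d1 x * 1 + d2 x / 2 * (INR 2 * s0 ^ Init.Nat.pred 2)))
      by (rewrite !Rplus_0_r; simpl; field).
    apply (derivable_pt_lim_minus (fun s => d0 (x + s))).
    - apply dpl_shift; apply H0; lra.
    - apply (derivable_pt_lim_plus (mult_real_fct (d1 x) id) (mult_real_fct (d2 x / 2) (fun y => y ^ 2))).
      + apply derivable_pt_lim_scal, derivable_pt_lim_id.
      + apply derivable_pt_lim_scal, derivable_pt_lim_pow. }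
  apply abs_le_b in Hs. specialize (Hiii s Hs). rewrite Rplus_0_r in Hiii.
  replace (d0 (x + s) - d0 x - s * d1 x - s * s / 2 * d2 x) with
    (d0 (x + s) - s * d1 x - s * s / 2 * d2 x - (d0 x - 0 * d1 x - 0 * 0 / 2 * d2 x)) by field. exact Hiii.
Qed.

Lemma abs_tri_le x s a b : Rabs x <= a -> Rabs s <= b -> Rabs (x + s) <= a + b.
Proof. intros. eapply Rle_trans; [apply Rabs_triang|lra]. Qed.

Lemma rho_facts rho rho_r rho_rr (Hrho : smooth2 rho)
  (Hrho_r : forall r t, derivable_pt_lim (fun s => rho s t) r (rho_r r t))
  (Hrho_rr : forall r t, derivable_pt_lim (fun s => rho_r s t) r (rho_rr r t)) :
  forall R1 T1, exists B, 0 <= B /\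
  (forall x t, Rabs x <= R1 -> Rabs t <= T1 -> Rabs (rho x t) <= B /\ Rabs (rho_r x t) <= B /\ Rabs (rho_rr x t) <= B) /\
  (forall x t s, Rabs x <= R1 -> Rabs t <= T1 -> Rabs s <= 1 ->
     Rabs (rho (x + s) t - rho x t - s * rho_r x t - s * s / 2 * rho_rr x t) <= B * Rabs s ^ 3) /\
  (forall x t s, Rabs x <= R1 -> Rabs t <= T1 -> Rabs s <= 1 ->
     Rabs (rho x (t + s) - rho x t) <= B * Rabs s /\ Rabs (rho_r x (t + s) - rho_r x t) <= B * Rabs s /\
     Rabs (rho_rr x (t + s) - rho_rr x t) <= B * Rabs s).
Proof.
  destruct Hrho as [d [Hd0 [Hdd Hdc]]].
  assert (E1 : forall x t, rho_r x t = d 1%nat 0%nat x t).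
  { intros x t. eapply uniqueness_limite. apply Hrho_r. rewrite <- Hd0. apply (proj1 (Hdd 0%nat 0%nat x t)). }
  assert (E2 : forall x t, rho_rr x t = d 2%nat 0%nat x t).
  { intros x t. eapply uniqueness_limite. apply Hrho_rr.
    apply (dpl_ext (fun s => d 1%nat 0%nat s t)). intros; rewrite E1; auto.
    apply (proj1 (Hdd 1%nat 0%nat x t)). }
  assert (E0 : forall x t, rho x t = d 0%nat 0%nat x t) by (intros; rewrite Hd0; auto).
  intros R1 T1.
  destruct (cont2_bounded _ (Hdc 0%nat 0%nat) (R1+1) (T1+1)) as [B00 H00].
  destruct (cont2_bounded _ (Hdc 1%nat 0%nat) (R1+1) (T1+1)) as [B10 H10].
  destruct (cont2_bounded _ (Hdc 2%nat 0%nat) (R1+1) (T1+1)) as [B20 H20].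
  destruct (cont2_bounded _ (Hdc 3%nat 0%nat) (R1+1) (T1+1)) as [B30 H30].
  destruct (cont2_bounded _ (Hdc 0%nat 1%nat) (R1+1) (T1+1)) as [B01 H01].
  destruct (cont2_bounded _ (Hdc 1%nat 1%nat) (R1+1) (T1+1)) as [B11 H11].
  destruct (cont2_bounded _ (Hdc 2%nat 1%nat) (R1+1) (T1+1)) as [B21 H21].
  set (B := Rabs B00 + Rabs B10 + Rabs B20 + Rabs B30 + Rabs B01 + Rabs B11 + Rabs B21).
  assert (HB : forall b, b <= Rabs b) by (intros; apply Rle_abs).
  assert (Hpos : forall b, 0 <= Rabs b) by (intros; apply Rabs_pos).
  assert (HB0 : 0 <= B) by (unfold B; pose proof (Hpos B00); pose proof (Hpos B10); pose proof (Hpos B20);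
     pose proof (Hpos B30); pose proof (Hpos B01); pose proof (Hpos B11); pose proof (Hpos B21); lra).
  exists B. split; [unfold B; pose proof (Hpos B00); pose proof (Hpos B10); pose proof (Hpos B20);
     pose proof (Hpos B30); pose proof (Hpos B01); pose proof (Hpos B11); pose proof (Hpos B21); lra|].
  assert (HB00 : B00 <= B) by (unfold B; pose proof (HB B00); pose proof (Hpos B10); pose proof (Hpos B20);
     pose proof (Hpos B30); pose proof (Hpos B01); pose proof (Hpos B11); pose proof (Hpos B21); lra).
  assert (HB10 : B10 <= B) by (unfold B; pose proof (HB B10); pose proof (Hpos B00); pose proof (Hpos B20);
     pose proof (Hpos B30); pose proof (Hpos B01); pose proof (Hpos B11); pose proof (Hpos B21); lra).
  assert (HB20 : B20 <= B) by (unfold B; pose proof (HB B20); pose proof (Hpos B10); pose proof (Hpos B00);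
     pose proof (Hpos B30); pose proof (Hpos B01); pose proof (Hpos B11); pose proof (Hpos B21); lra).
  assert (HB30 : B30 <= B) by (unfold B; pose proof (HB B30); pose proof (Hpos B10); pose proof (Hpos B20);
     pose proof (Hpos B00); pose proof (Hpos B01); pose proof (Hpos B11); pose proof (Hpos B21); lra).
  assert (HB01 : B01 <= B) by (unfold B; pose proof (HB B01); pose proof (Hpos B10); pose proof (Hpos B20);
     pose proof (Hpos B30); pose proof (Hpos B00); pose proof (Hpos B11); pose proof (Hpos B21); lra).
  assert (HB11 : B11 <= B) by (unfold B; pose proof (HB B11); pose proof (Hpos B10); pose proof (Hpos B20);
     pose proof (Hpos B30); pose proof (Hpos B01); pose proof (Hpos B00); pose proof (Hpos B21); lra).
  assert (HB21 : B21 <= B) by (unfold B; pose proof (HB B21); pose proof (Hpos B10); pose proof (Hpos B20);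
     pose proof (Hpos B30); pose proof (Hpos B01); pose proof (Hpos B11); pose proof (Hpos B00); lra).
  assert (W : forall a, Rabs a <= R1 -> Rabs a <= R1 + 1) by (intros; lra).
  assert (Wt : forall a, Rabs a <= T1 -> Rabs a <= T1 + 1) by (intros; lra).
  split; [|split].
  - intros x t Hx Ht. rewrite E0, E1, E2.
    repeat split; eapply Rle_trans; [apply H00| |apply H10| |apply H20|]; auto.
  - intros x t s Hx Ht Hs. rewrite !E0, !E1, !E2.
    assert (Hr : forall y, x - 1 <= y <= x + 1 -> Rabs y <= R1 + 1).
    { intros y Hy. apply abs_le_b in Hx. apply Rabs_le. lra. }
    apply (taylor2 (fun y => d 0%nat 0%nat y t) (fun y => d 1%nat 0%nat y t)
      (fun y => d 2%nat 0%nat y t) (fun y => d 3%nat 0%nat y t) x B); auto.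
    + intros; apply (proj1 (Hdd 0%nat 0%nat y t)).
    + intros; apply (proj1 (Hdd 1%nat 0%nat y t)).
    + intros; apply (proj1 (Hdd 2%nat 0%nat y t)).
    + intros y Hy. eapply Rle_trans; [apply H30|]; auto.
  - intros x t s Hx Ht Hs.
    assert (Ht2 : forall u, -1 <= u <= 1 -> Rabs (t + u) <= T1 + 1).
    { intros u Hu. apply abs_le_b in Ht. apply Rabs_le. lra. }
    apply abs_le_b in Hs.
    rewrite !E0, !E1, !E2.
    assert (G : forall i Bi, (forall y z, Rabs y <= R1 + 1 -> Rabs z <= T1 + 1 -> Rabs (d i 1%nat y z) <= Bi) -> Bi <= B ->
       Rabs (d i 0%nat x (t + s) - d i 0%nat x t) <= B * Rabs s).
    { intros i Bi Hi HBi. replace (d i 0%nat x t) with (d i 0%nat x (t + 0)) by (rewrite Rplus_0_r; auto).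
      replace (B * Rabs s) with (B * Rabs s ^ 1) by ring.
      apply (mvt_bound (fun u => d i 0%nat x (t + u)) (fun u => d i 1%nat x (t + u)) 1 B 0); auto.
      - intros; apply dpl_shift. apply (proj2 (Hdd i 0%nat x (t + s0))).
      - intros u Hu. simpl. rewrite Rmult_1_r. eapply Rle_trans; [apply Hi|]; auto. }
    split; [apply (G 0%nat B01)|split; [apply (G 1%nat B11)|apply (G 2%nat B21)]]; auto.
Qed.

Lemma chat_facts (Chat Chat_rho : R -> R) (HC : smooth1 Chat)
  (HCd : forall y, derivable_pt_lim Chat y (Chat_rho y)) :
  forall M, exists B, 0 <= B /\ forall g s, Rabs g <= M -> Rabs s <= 1 ->
    Rabs (Chat g) <= B /\ Rabs (Chat_rho g) <= B /\
    Rabs (Chat (g + s) - Chat g - Chat_rho g * s) <= B * s ^ 2.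
Proof.
  destruct HC as [dC [H0 H1]].
  assert (E1 : forall y, Chat_rho y = dC 1%nat y).
  { intros y. eapply uniqueness_limite. apply HCd. rewrite <- H0. apply H1. }
  assert (Hc : forall j x, continuity_pt (dC j) x).
  { intros j x. apply derivable_continuous_pt. exists (dC (S j) x). apply H1. }
  intros M.
  destruct (cont1_bounded (dC 0%nat) (M+1) (Hc 0%nat)) as [B0 HB0].
  destruct (cont1_bounded (dC 1%nat) (M+1) (Hc 1%nat)) as [B1 HB1].
  destruct (cont1_bounded (dC 2%nat) (M+1) (Hc 2%nat)) as [B2 HB2].
  set (B := Rabs B0 + Rabs B1 + Rabs B2).
  pose proof (Rabs_pos B0); pose proof (Rabs_pos B1); pose proof (Rabs_pos B2).
  pose proof (Rle_abs B0); pose proof (Rle_abs B1); pose proof (Rle_abs B2).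
  assert (0 <= B) by (unfold B; lra).
  exists B. split; auto. intros g s Hg Hs.
  assert (Hr : forall u, -1 <= u <= 1 -> Rabs (g + u) <= M + 1).
  { intros u Hu. apply abs_le_b in Hg. apply Rabs_le. lra. }
  assert (Hg1 : Rabs g <= M + 1) by lra.
  split; [|split].
  - rewrite <- H0. eapply Rle_trans; [apply HB0|]; auto. unfold B; lra.
  - rewrite E1. eapply Rle_trans; [apply HB1|]; auto. unfold B; lra.
  - assert (Hi : forall u, -1 <= u <= 1 -> Rabs (dC 1%nat (g + u) - dC 1%nat (g + 0)) <= B * Rabs u ^ 1).
    { apply (mvt_bound (fun u => dC 1%nat (g + u)) (fun u => dC 2%nat (g + u)) 1 B 0); auto.
      - intros; apply dpl_shift; apply H1.
      - intros u Hu; simpl; rewrite Rmult_1_r. eapply Rle_trans; [apply HB2|]; auto. unfold B; lra. }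
    assert (Hii : forall u, -1 <= u <= 1 -> Rabs ((Chat (g + u) - u * Chat_rho g) - (Chat (g + 0) - 0 * Chat_rho g)) <= B * Rabs u ^ 2).
    { apply (mvt_bound (fun u => Chat (g + u) - u * Chat_rho g) (fun u => dC 1%nat (g + u) - dC 1%nat (g + 0)) 1 B 1); auto.
      intros u Hu. apply (derivable_pt_lim_minus (fun u => Chat (g + u)) (fun u => u * Chat_rho g)).
      - apply dpl_shift. rewrite <- E1. apply HCd.
      - rewrite Rplus_0_r, <- E1.
        apply (dpl_ext (mult_real_fct (Chat_rho g) id)). intros; unfold mult_real_fct, id; ring.
        replace (Chat_rho g) with (Chat_rho g * 1) at 2 by ring. apply derivable_pt_lim_scal, derivable_pt_lim_id. }
    apply abs_le_b in Hs. specialize (Hii s Hs). rewrite Rplus_0_r in Hii.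
    replace (Chat (g + s) - Chat g - Chat_rho g * s) with
      ((Chat (g + s) - s * Chat_rho g) - (Chat g - 0 * Chat_rho g)) by ring.
    replace (s ^ 2) with (Rabs s ^ 2); [exact Hii|]. rewrite RPow_abs. apply Rabs_pos_eq, pow2_ge_0.
Qed.

Lemma ba_add x y X Y : Rabs x <= X -> Rabs y <= Y -> Rabs (x + y) <= X + Y.
Proof. intros. eapply Rle_trans; [apply Rabs_triang|lra]. Qed.
Lemma ba_sub x y X Y : Rabs x <= X -> Rabs y <= Y -> Rabs (x - y) <= X + Y.
Proof. intros. unfold Rminus. apply ba_add; auto. rewrite Rabs_Ropp; auto. Qed.
Lemma ba_opp x X : Rabs x <= X -> Rabs (- x) <= X.
Proof. intros. rewrite Rabs_Ropp; auto. Qed.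
Lemma ba_mul x y X Y : Rabs x <= X -> Rabs y <= Y -> Rabs (x * y) <= X * Y.
Proof. intros. rewrite Rabs_mult. apply Rmult_le_compat; auto; apply Rabs_pos. Qed.
Lemma ba_pow x X n : Rabs x <= X -> Rabs (x ^ n) <= X ^ n.
Proof. intros. rewrite <- RPow_abs. apply pow_incr. split; auto. apply Rabs_pos. Qed.
Lemma ba_inv x : Rabs (/ x) <= Rabs (/ x).
Proof. apply Rle_refl. Qed.
Lemma ba_refl x : Rabs x <= Rabs x.
Proof. apply Rle_refl. Qed.

Ltac bnd := match goal with
  | |- Rabs (?x + ?y) <= _ => eapply ba_add; bnd
  | |- Rabs (?x - ?y) <= _ => eapply ba_sub; bnd
  | |- Rabs (- ?x) <= _ => eapply ba_opp; bnd
  | |- Rabs (?x * ?y) <= _ => eapply ba_mul; bnd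
  | |- Rabs (?x / ?y) <= _ => unfold Rdiv; eapply ba_mul; bnd
  | |- Rabs (?x ^ ?n) <= _ => first [eassumption | eapply ba_pow; bnd]
  | |- _ => first [eassumption | apply ba_refl]
  end.

Lemma bound_nonneg x X : Rabs x <= X -> 0 <= X.
Proof. intros. pose proof (Rabs_pos x). lra. Qed.

Lemma pow_expand (m : nat) (K : R) : 0 <= K -> exists C, forall a b e h,
  Rabs a <= K -> Rabs b <= K -> Rabs e <= K -> 0 <= h <= 1 ->
  Rabs ((a + h * (b + h * e)) ^ m - a ^ m - h * (INR m * a ^ (m - 1) * b)) <= C * h ^ 2.
Proof.
  intros HK. induction m.
  - exists 0. intros. simpl. replace (1 - 1 - h * (0 * 1 * b)) with 0 by ring. rewrite Rabs_R0. lra.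
  - destruct IHm as [C HC].
    eexists. intros a b e h Ha Hb He Hh.
    set (z := a + h * (b + h * e)).
    specialize (HC a b e h Ha Hb He Hh). fold z in HC.
    set (Rm := z ^ m - a ^ m - h * (INR m * a ^ (m - 1) * b)) in *.
    assert (HRm : Rabs (Rm / h ^ 2) <= C \/ h = 0).
    { destruct (Req_dec h 0) as [->|Hh0]; [right; auto|left].
      unfold Rdiv. rewrite Rabs_mult, Rabs_inv. rewrite (Rabs_pos_eq (h^2)) by (apply pow2_ge_0).
      assert (0 < h^2) by (apply pow_lt; lra).
      apply (Rmult_le_reg_r (h^2)); auto. rewrite Rmult_assoc, Rinv_l, Rmult_1_r by lra. lra. }
    destruct (Req_dec h 0) as [->|Hh0].
    + unfold z. replace (a + 0 * (b + 0 * e)) with a by ring.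
      replace (a ^ S m - a ^ S m - 0 * (INR (S m) * a ^ (S m - 1) * b)) with 0 by ring.
      rewrite Rabs_R0. simpl. nra.
    + destruct HRm as [HRm|]; [|contradiction].
      set (R' := Rm / h ^ 2) in *.
      assert (Eq : z ^ S m - a ^ S m - h * (INR (S m) * a ^ (S m - 1) * b) =
         h ^ 2 * (e * a ^ m + (b + h * e) * (INR m * a ^ (m - 1) * b) + z * R')).
      { unfold R', Rm. simpl pow. replace (S m - 1)%nat with m by lia. rewrite S_INR.
        destruct m. { unfold z; simpl. field. auto. }
        replace (S m - 1)%nat with m by lia. simpl pow. unfold z. field. auto. }
      rewrite Eq, Rabs_mult, (Rabs_pos_eq (h^2)) by (apply pow2_ge_0).
      rewrite Rmult_comm. apply Rmult_le_compat_r; [apply pow2_ge_0|].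
      assert (Hhh : Rabs h <= 1) by (rewrite Rabs_pos_eq; lra).
      assert (Hz : Rabs z <= K + 1 * (K + 1 * K)) by (unfold z; bnd).
      assert (Ham : Rabs (a ^ (m - 1)) <= K ^ (m - 1)) by (apply ba_pow; auto).
      bnd.
Qed.

Lemma collect2 a b c p : a * (b * p) + c * p <= (a * b + c) * p.
Proof. right; ring. Qed.

Lemma f_expand (f : R -> R -> R) (Chat Chat_rho : R -> R) (m : nat)
 (Hfexp : forall M, 0 < M -> exists c e, 0 < e /\ forall x y, Rabs ((x + y) / 2) <= M -> Rabs ((x - y) / 2) < e ->
     Rabs (f x y - Chat ((x + y) / 2) * ((x - y) / 2) ^ m) <= c * Rabs ((x - y) / 2) ^ (m + 2))
 (HCf : forall M, exists B, 0 <= B /\ forall g s, Rabs g <= M -> Rabs s <= 1 ->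
    Rabs (Chat g) <= B /\ Rabs (Chat_rho g) <= B /\ Rabs (Chat (g + s) - Chat g - Chat_rho g * s) <= B * s ^ 2)
 (K : R) (HK : 0 <= K) :
 exists C h1, 0 < h1 /\ forall h x y g0 a b ex y1 ey, 0 < h < h1 ->
   Rabs g0 <= K -> Rabs a <= K -> Rabs b <= K -> Rabs ex <= K -> Rabs y1 <= K -> Rabs ey <= K ->
   (x - y) / 2 = h * (a + h * (b + h * ex)) -> (x + y) / 2 = g0 + h * (y1 + h * ey) ->
   Rabs (f x y - (h ^ m * (Chat g0 * a ^ m) + h ^ (m + 1) * (Chat_rho g0 * y1 * a ^ m + INR m * Chat g0 * a ^ (m - 1) * b)))
     <= C * h ^ (m + 2).
Proof.
  destruct (Hfexp (3 * K + 1)) as [c [eps0 [Heps0 Hf]]]; [lra|].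
  destruct (HCf K) as [BC [HBC HC]].
  destruct (pow_expand m K HK) as [C3 HC3].
  set (h1 := Rmin 1 (Rmin (eps0 / (3 * K + 1)) (1 / (2 * K + 1)))).
  assert (Hh1 : 0 < h1).
  { unfold h1. apply Rmin_glb_lt; [lra|]. apply Rmin_glb_lt; apply Rdiv_lt_0_compat; lra. }
  eexists. exists h1. split; auto.
  intros h x y g0 a b ex y1 ey Hh Hg0 Ha Hb Hex Hy1 Hey EX EY.
  assert (Hh1' : h <= 1) by (pose proof (Rmin_l 1 (Rmin (eps0 / (3 * K + 1)) (1 / (2 * K + 1)))); fold h1 in H; lra).
  assert (Hh2 : h < eps0 / (3 * K + 1)).
  { pose proof (Rmin_r 1 (Rmin (eps0 / (3 * K + 1)) (1 / (2 * K + 1)))).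
    pose proof (Rmin_l (eps0 / (3 * K + 1)) (1 / (2 * K + 1))). fold h1 in H. lra. }
  assert (Hh3 : h < 1 / (2 * K + 1)).
  { pose proof (Rmin_r 1 (Rmin (eps0 / (3 * K + 1)) (1 / (2 * K + 1)))).
    pose proof (Rmin_r (eps0 / (3 * K + 1)) (1 / (2 * K + 1))). fold h1 in H. lra. }
  assert (Hhabs : Rabs h <= 1) by (rewrite Rabs_pos_eq; lra).
  set (A := a + h * (b + h * ex)).
  assert (HA : Rabs A <= K + 1 * (K + 1 * K)) by (unfold A; bnd).
  assert (HX : Rabs ((x - y) / 2) <= (3 * K) * h).
  { rewrite EX, Rabs_mult, Rabs_pos_eq by lra. fold A. nra. }
  assert (HXe : Rabs ((x - y) / 2) < eps0).
  { apply Rle_lt_trans with ((3*K) * h); auto.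
    apply (Rmult_lt_compat_r (3*K+1)) in Hh2; [|lra]. unfold Rdiv in Hh2.
    rewrite Rmult_assoc, Rinv_l, Rmult_1_r in Hh2 by lra. nra. }
  set (s := h * (y1 + h * ey)).
  assert (Hs : Rabs s <= (2 * K) * h).
  { unfold s. rewrite Rabs_mult, Rabs_pos_eq by lra.
    assert (Rabs (y1 + h * ey) <= K + 1 * K) by bnd. nra. }
  assert (Hs1 : Rabs s <= 1).
  { apply (Rmult_lt_compat_r (2*K+1)) in Hh3; [|lra]. unfold Rdiv in Hh3.
    rewrite Rmult_1_l, Rinv_l in Hh3 by lra. nra. }
  assert (HY : Rabs ((x + y) / 2) <= 3 * K + 1).
  { rewrite EY. fold s. eapply Rle_trans; [apply Rabs_triang|]. nra. }
  specialize (Hf x y HY HXe).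
  destruct (HC g0 s Hg0 Hs1) as [HCh [HChr HR2]].
  specialize (HC3 a b ex h Ha Hb Hex ltac:(lra)). fold A in HC3.
  set (R1 := f x y - Chat ((x + y) / 2) * ((x - y) / 2) ^ m).
  set (R2 := Chat (g0 + s) - Chat g0 - Chat_rho g0 * s) in HR2.
  set (R3 := A ^ m - a ^ m - h * (INR m * a ^ (m - 1) * b)) in HC3.
  assert (Hhz : h <> 0) by lra.
  assert (Hh2p : 0 < h ^ 2) by (apply pow_lt; lra).
  set (R2' := R2 / h ^ 2). set (R3' := R3 / h ^ 2).
  assert (HR2' : Rabs R2' <= BC * (2 * K) ^ 2).
  { unfold R2'. unfold Rdiv. rewrite Rabs_mult, Rabs_inv, (Rabs_pos_eq (h^2)) by lra.
    apply (Rmult_le_reg_r (h^2)); auto. rewrite Rmult_assoc, Rinv_l, Rmult_1_r by lra.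
    eapply Rle_trans; [apply HR2|]. replace (BC * (2 * K) ^ 2 * h ^ 2) with (BC * ((2*K)*h)^2) by ring.
    apply Rmult_le_compat_l; auto. replace (s^2) with (Rabs s ^ 2) by (rewrite RPow_abs; apply Rabs_pos_eq, pow2_ge_0).
    apply pow_incr. split; [apply Rabs_pos|auto]. }
  assert (HR3' : Rabs R3' <= C3).
  { unfold R3'. unfold Rdiv. rewrite Rabs_mult, Rabs_inv, (Rabs_pos_eq (h^2)) by lra.
    apply (Rmult_le_reg_r (h^2)); auto. rewrite Rmult_assoc, Rinv_l, Rmult_1_r by lra. auto. }
  assert (Eq : f x y - (h ^ m * (Chat g0 * a ^ m) + h ^ (m + 1) * (Chat_rho g0 * y1 * a ^ m + INR m * Chat g0 * a ^ (m - 1) * b))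
     = R1 + h ^ (m + 2) * (Chat g0 * R3' + Chat_rho g0 * ey * a ^ m
        + Chat_rho g0 * (y1 + h * ey) * (INR m * a ^ (m - 1) * b + h * R3')
        + R2' * (a ^ m + h * (INR m * a ^ (m - 1) * b) + h ^ 2 * R3'))).
  { assert (E2 : Chat ((x + y) / 2) = Chat g0 + Chat_rho g0 * s + h ^ 2 * R2').
    { rewrite EY. fold s. unfold R2', R2. field. auto. }
    assert (E3 : ((x - y) / 2) ^ m = h ^ m * (a ^ m + h * (INR m * a ^ (m - 1) * b) + h ^ 2 * R3')).
    { rewrite EX. fold A. rewrite Rpow_mult_distr. unfold R3', R3. field. auto. }
    unfold R1. rewrite E2, E3. rewrite !pow_add. unfold s. simpl. ring. }
  rewrite Eq.
  assert (HR1 : Rabs R1 <= Rabs c * ((3 * K) ^ (m + 2) * h ^ (m + 2))).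
  { eapply Rle_trans; [apply Hf|].
    pose proof (pow_le (Rabs ((x - y) / 2)) (m+2) (Rabs_pos _)).
    apply Rle_trans with (Rabs c * Rabs ((x - y) / 2) ^ (m + 2)).
    - apply Rmult_le_compat_r; auto. apply Rle_abs.
    - apply Rmult_le_compat_l; [apply Rabs_pos|]. rewrite <- Rpow_mult_distr. apply pow_incr. split; [apply Rabs_pos|]. lra. }
  assert (Hpos : 0 < h ^ (m + 2)) by (apply pow_lt; lra).
  eapply Rle_trans; [apply Rabs_triang|]. rewrite Rabs_mult, (Rabs_pos_eq (h ^ (m+2))) by lra.
  assert (Hm : Rabs (a ^ (m - 1)) <= K ^ (m - 1)) by (apply ba_pow; auto).
  assert (Hm2 : Rabs (a ^ m) <= K ^ m) by (apply ba_pow; auto).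
  eassert (HZ : Rabs (Chat g0 * R3' + Chat_rho g0 * ey * a ^ m
        + Chat_rho g0 * (y1 + h * ey) * (INR m * a ^ (m - 1) * b + h * R3')
        + R2' * (a ^ m + h * (INR m * a ^ (m - 1) * b) + h ^ 2 * R3')) <= ?[BZ]).
  { bnd. }
  eapply Rle_trans; [apply Rplus_le_compat; [exact HR1| rewrite Rmult_comm; apply Rmult_le_compat_r; [lra| exact HZ]]|].
  apply collect2.
Qed.

Definition a_t (k Iw I0 g0 g1 : R) : R := -(Iw * (k * g0) + I0 * (- k * g0 + g1)) / 2.
Definition b_t (k Iw I0 sg u g0 g1 g2 : R) : R :=
  - k * sg * a_t k Iw I0 g0 g1 + (k * k * (Iw * Iw - I0 * I0) / 2 * g0 - u * k * (Iw - I0) * g1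
     + k * I0 * I0 * g1 - g2 * (u * I0 + I0 * I0 / 2)) / 2.
Definition y_t (k Iw I0 sg u g0 g1 : R) : R := - k * sg * g0 - k * (Iw + I0) * g0 / 2 + (2 * u + I0) * g1 / 2.

Definition EXe (h k Iw I0 sg u g0 g1 g2 D0 D1 D2 Eqw Eq0 Ec EA EB : R) : R := ((-4 * D0 * Ec * Eq0 * h ^ 4) + (4 * D0 * Ec * Eqw * h ^ 4) + (4 * D0 * Ec * I0 * h ^ 2 * k) + (-2 * D0 * Ec * I0 ^ 2 * h ^ 3 * k ^ 2) + (-4 * D0 * Ec * Iw * h ^ 2 * k) + (2 * D0 * Ec * Iw ^ 2 * h ^ 3 * k ^ 2) + (-4 * D0 * Eq0 * h ^ 2) + (4 * D0 * Eq0 * h ^ 3 * k * sg) + (4 * D0 * Eqw * h ^ 2) + (-4 * D0 * Eqw * h ^ 3 * k * sg) + (-4 * D0 * I0 * h * k ^ 2 * sg) + (4 * D0 * I0 * k) + (-2 * D0 * I0 ^ 2 * h * k ^ 2) + (2 * D0 * I0 ^ 2 * h ^ 2 * k ^ 3 * sg) + (4 * D0 * Iw * h * k ^ 2 * sg) + (-4 * D0 * Iw * k) + (2 * D0 * Iw ^ 2 * h * k ^ 2) + (-2 * D0 * Iw ^ 2 * h ^ 2 * k ^ 3 * sg) + (-4 * D1 * Ec * Eq0 * I0 * h ^ 5) + (-4 * D1 * Ec * Eq0 * h ^ 5 * u) + (4 * D1 * Ec * Eqw * h ^ 5 * u) + (-4 * D1 * Ec * I0 * h ^ 2) + (4 *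 D1 * Ec * I0 * h ^ 3 * k * u) + (4 * D1 * Ec * I0 ^ 2 * h ^ 3 * k) + (-2 * D1 * Ec * I0 ^ 2 * h ^ 4 * k ^ 2 * u) + (-2 * D1 * Ec * I0 ^ 3 * h ^ 4 * k ^ 2) + (-4 * D1 * Ec * Iw * h ^ 3 * k * u) + (2 * D1 * Ec * Iw ^ 2 * h ^ 4 * k ^ 2 * u) + (-4 * D1 * Eq0 * I0 * h ^ 3) + (4 * D1 * Eq0 * I0 * h ^ 4 * k * sg) + (-4 * D1 * Eq0 * h ^ 3 * u) + (4 * D1 * Eq0 * h ^ 4 * k * sg * u) + (4 * D1 * Eqw * h ^ 3 * u) + (-4 * D1 * Eqw * h ^ 4 * k * sg * u) + (-4 * D1 * I0) + (4 * D1 * I0 * h * k * sg) + (4 * D1 * I0 * h * k * u) + (-4 * D1 * I0 * h ^ 2 * k ^ 2 * sg * u) + (4 * D1 * I0 ^ 2 * h * k) + (-4 * D1 * I0 ^ 2 * h ^ 2 * k ^ 2 * sg) + (-2 * D1 * I0 ^ 2 * h ^ 2 * k ^ 2 * u) + (2 * D1 * I0 ^ 2 * h ^ 3 * k ^ 3 * sg * u) + (-2 * D1 * I0 ^ 3 * h ^ 2 * k ^ 2) + (2 * D1 * I0 ^ 3 * h ^ 3 * k ^ 3 * sg) + (-4 * D1 * Iw * h * k * u) + (4 * D1 * Iw * h ^ 2 * k ^ 2 * sg * u) + (2 * D1 * Iw ^ 2 * h ^ 2 * k ^ 2 * u) + (-2 * D1 * Iw ^ 2 * h ^ 3 * k ^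 3 * sg * u) + (-4 * D2 * Ec * Eq0 * I0 * h ^ 6 * u) + (-2 * D2 * Ec * Eq0 * I0 ^ 2 * h ^ 6) + (-2 * D2 * Ec * Eq0 * h ^ 6 * u ^ 2) + (2 * D2 * Ec * Eqw * h ^ 6 * u ^ 2) + (-4 * D2 * Ec * I0 * h ^ 3 * u) + (2 * D2 * Ec * I0 * h ^ 4 * k * u ^ 2) + (-2 * D2 * Ec * I0 ^ 2 * h ^ 3) + (4 * D2 * Ec * I0 ^ 2 * h ^ 4 * k * u) + (-1 * D2 * Ec * I0 ^ 2 * h ^ 5 * k ^ 2 * u ^ 2) + (2 * D2 * Ec * I0 ^ 3 * h ^ 4 * k) + (-2 * D2 * Ec * I0 ^ 3 * h ^ 5 * k ^ 2 * u) + (-1 * D2 * Ec * I0 ^ 4 * h ^ 5 * k ^ 2) + (-2 * D2 * Ec * Iw * h ^ 4 * k * u ^ 2) + (1 * D2 * Ec * Iw ^ 2 * h ^ 5 * k ^ 2 * u ^ 2) + (-4 * D2 * Eq0 * I0 * h ^ 4 * u) + (4 * D2 * Eq0 * I0 * h ^ 5 * k * sg * u) + (-2 * D2 * Eq0 * I0 ^ 2 * h ^ 4) + (2 * D2 * Eq0 * I0 ^ 2 * h ^ 5 * k * sg) + (-2 * D2 * Eq0 * h ^ 4 * u ^ 2) + (2 * D2 * Eq0 * h ^ 5 * k * sg * u ^ 2) + (2 * D2 * Eqw * h ^ 4 * u ^ 2) + (-2 * D2 * Eqw * h ^ 5 * k * sg * u ^ 2) + (-4 * D2 * I0 * h * u)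 + (4 * D2 * I0 * h ^ 2 * k * sg * u) + (2 * D2 * I0 * h ^ 2 * k * u ^ 2) + (-2 * D2 * I0 * h ^ 3 * k ^ 2 * sg * u ^ 2) + (-2 * D2 * I0 ^ 2 * h) + (2 * D2 * I0 ^ 2 * h ^ 2 * k * sg) + (4 * D2 * I0 ^ 2 * h ^ 2 * k * u) + (-4 * D2 * I0 ^ 2 * h ^ 3 * k ^ 2 * sg * u) + (-1 * D2 * I0 ^ 2 * h ^ 3 * k ^ 2 * u ^ 2) + (1 * D2 * I0 ^ 2 * h ^ 4 * k ^ 3 * sg * u ^ 2) + (2 * D2 * I0 ^ 3 * h ^ 2 * k) + (-2 * D2 * I0 ^ 3 * h ^ 3 * k ^ 2 * sg) + (-2 * D2 * I0 ^ 3 * h ^ 3 * k ^ 2 * u) + (2 * D2 * I0 ^ 3 * h ^ 4 * k ^ 3 * sg * u) + (-1 * D2 * I0 ^ 4 * h ^ 3 * k ^ 2) + (1 * D2 * I0 ^ 4 * h ^ 4 * k ^ 3 * sg) + (-2 * D2 * Iw * h ^ 2 * k * u ^ 2) + (2 * D2 * Iw * h ^ 3 * k ^ 2 * sg * u ^ 2) + (1 * D2 * Iw ^ 2 * h ^ 3 * k ^ 2 * u ^ 2) + (-1 * D2 * Iw ^ 2 * h ^ 4 * k ^ 3 * sg * u ^ 2) + (4 * EA) + (4 * EA * Ec * Eqw * h ^ 5) + (-4 * EA * Ec * Iw * h ^ 3 * k) + (2 * EA * Ec * Iw ^ 2 * h ^ 4 * k ^ 2) + (4 * EA * Ec * h ^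 2) + (4 * EA * Eqw * h ^ 3) + (-4 * EA * Eqw * h ^ 4 * k * sg) + (-4 * EA * Iw * h * k) + (4 * EA * Iw * h ^ 2 * k ^ 2 * sg) + (2 * EA * Iw ^ 2 * h ^ 2 * k ^ 2) + (-2 * EA * Iw ^ 2 * h ^ 3 * k ^ 3 * sg) + (-4 * EA * h * k * sg) + (-4 * EB) + (-4 * EB * Ec * Eq0 * h ^ 5) + (4 * EB * Ec * I0 * h ^ 3 * k) + (-2 * EB * Ec * I0 ^ 2 * h ^ 4 * k ^ 2) + (-4 * EB * Ec * h ^ 2) + (-4 * EB * Eq0 * h ^ 3) + (4 * EB * Eq0 * h ^ 4 * k * sg) + (4 * EB * I0 * h * k) + (-4 * EB * I0 * h ^ 2 * k ^ 2 * sg) + (-2 * EB * I0 ^ 2 * h ^ 2 * k ^ 2) + (2 * EB * I0 ^ 2 * h ^ 3 * k ^ 3 * sg) + (4 * EB * h * k * sg) + (-4 * Ec * Eq0 * I0 * g1 * h ^ 3) + (-4 * Ec * Eq0 * I0 * g2 * h ^ 4 * u) + (-2 * Ec * Eq0 * I0 ^ 2 * g2 * h ^ 4) + (-4 * Ec * Eq0 * g0 * h ^ 2) + (-4 * Ec * Eq0 * g1 * h ^ 3 * u) + (-2 * Ec * Eq0 * g2 * h ^ 4 * u ^ 2) + (4 * Ec * Eqw * g0 * h ^ 2) + (4 * Ec * Eqw * g1 * h ^ 3 * u) + (2 * Ec * Eqw * g2 * h ^ 4 * u ^ 2) + (4 * Ec * I0 * g0 * k) + (-4 * Ec * I0 *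 g1) + (4 * Ec * I0 * g1 * h * k * u) + (-4 * Ec * I0 * g2 * h * u) + (2 * Ec * I0 * g2 * h ^ 2 * k * u ^ 2) + (-2 * Ec * I0 ^ 2 * g0 * h * k ^ 2) + (4 * Ec * I0 ^ 2 * g1 * h * k) + (-2 * Ec * I0 ^ 2 * g1 * h ^ 2 * k ^ 2 * u) + (-2 * Ec * I0 ^ 2 * g2 * h) + (4 * Ec * I0 ^ 2 * g2 * h ^ 2 * k * u) + (-1 * Ec * I0 ^ 2 * g2 * h ^ 3 * k ^ 2 * u ^ 2) + (-2 * Ec * I0 ^ 3 * g1 * h ^ 2 * k ^ 2) + (2 * Ec * I0 ^ 3 * g2 * h ^ 2 * k) + (-2 * Ec * I0 ^ 3 * g2 * h ^ 3 * k ^ 2 * u) + (-1 * Ec * I0 ^ 4 * g2 * h ^ 3 * k ^ 2) + (-4 * Ec * Iw * g0 * k) + (-4 * Ec * Iw * g1 * h * k * u) + (-2 * Ec * Iw * g2 * h ^ 2 * k * u ^ 2) + (2 * Ec * Iw ^ 2 * g0 * h * k ^ 2) + (2 * Ec * Iw ^ 2 * g1 * h ^ 2 * k ^ 2 * u) + (1 * Ec * Iw ^ 2 * g2 * h ^ 3 * k ^ 2 * u ^ 2) + (-4 * Eq0 * I0 * g1 * h) + (4 * Eq0 * I0 * g1 * h ^ 2 * k * sg) + (-4 * Eq0 * I0 * g2 * h ^ 2 * u) + (4 * Eq0 * I0 * g2 * h ^ 3 * k * sg * u) + (-2 * Eq0 * I0 ^ 2 * g2 * h ^ 2) + (2 *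 Eq0 * I0 ^ 2 * g2 * h ^ 3 * k * sg) + (-4 * Eq0 * g0) + (4 * Eq0 * g0 * h * k * sg) + (-4 * Eq0 * g1 * h * u) + (4 * Eq0 * g1 * h ^ 2 * k * sg * u) + (-2 * Eq0 * g2 * h ^ 2 * u ^ 2) + (2 * Eq0 * g2 * h ^ 3 * k * sg * u ^ 2) + (4 * Eqw * g0) + (-4 * Eqw * g0 * h * k * sg) + (4 * Eqw * g1 * h * u) + (-4 * Eqw * g1 * h ^ 2 * k * sg * u) + (2 * Eqw * g2 * h ^ 2 * u ^ 2) + (-2 * Eqw * g2 * h ^ 3 * k * sg * u ^ 2) + (-4 * I0 * g1 * k ^ 2 * sg * u) + (-2 * I0 * g2 * h * k ^ 2 * sg * u ^ 2) + (4 * I0 * g2 * k * sg * u) + (2 * I0 * g2 * k * u ^ 2) + (2 * I0 ^ 2 * g0 * k ^ 3 * sg) + (2 * I0 ^ 2 * g1 * h * k ^ 3 * sg * u) + (-4 * I0 ^ 2 * g1 * k ^ 2 * sg) + (-2 * I0 ^ 2 * g1 * k ^ 2 * u) + (-4 * I0 ^ 2 * g2 * h * k ^ 2 * sg * u) + (-1 * I0 ^ 2 * g2 * h * k ^ 2 * u ^ 2) + (1 * I0 ^ 2 * g2 * h ^ 2 * k ^ 3 * sg * u ^ 2) + (2 * I0 ^ 2 * g2 * k * sg) + (4 * I0 ^ 2 * g2 * k * u) + (2 * I0 ^ 3 * g1 * h * k ^ 3 * sg) + (-2 * I0 ^ 3 * g1 * k ^ 2) + (-2 * I0 ^ 3 *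 g2 * h * k ^ 2 * sg) + (-2 * I0 ^ 3 * g2 * h * k ^ 2 * u) + (2 * I0 ^ 3 * g2 * h ^ 2 * k ^ 3 * sg * u) + (2 * I0 ^ 3 * g2 * k) + (-1 * I0 ^ 4 * g2 * h * k ^ 2) + (1 * I0 ^ 4 * g2 * h ^ 2 * k ^ 3 * sg) + (4 * Iw * g1 * k ^ 2 * sg * u) + (2 * Iw * g2 * h * k ^ 2 * sg * u ^ 2) + (-2 * Iw * g2 * k * u ^ 2) + (-2 * Iw ^ 2 * g0 * k ^ 3 * sg) + (-2 * Iw ^ 2 * g1 * h * k ^ 3 * sg * u) + (2 * Iw ^ 2 * g1 * k ^ 2 * u) + (1 * Iw ^ 2 * g2 * h * k ^ 2 * u ^ 2) + (-1 * Iw ^ 2 * g2 * h ^ 2 * k ^ 3 * sg * u ^ 2)) / 8.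
Definition EYe (h k Iw I0 sg u g0 g1 g2 D0 D1 D2 Eqw Eq0 Ec EA EB : R) : R := ((8 * D0) + (4 * D0 * Ec * Eq0 * h ^ 5) + (4 * D0 * Ec * Eqw * h ^ 5) + (-4 * D0 * Ec * I0 * h ^ 3 * k) + (2 * D0 * Ec * I0 ^ 2 * h ^ 4 * k ^ 2) + (-4 * D0 * Ec * Iw * h ^ 3 * k) + (2 * D0 * Ec * Iw ^ 2 * h ^ 4 * k ^ 2) + (8 * D0 * Ec * h ^ 2) + (4 * D0 * Eq0 * h ^ 3) + (-4 * D0 * Eq0 * h ^ 4 * k * sg) + (4 * D0 * Eqw * h ^ 3) + (-4 * D0 * Eqw * h ^ 4 * k * sg) + (-4 * D0 * I0 * h * k) + (4 * D0 * I0 * h ^ 2 * k ^ 2 * sg) + (2 * D0 * I0 ^ 2 * h ^ 2 * k ^ 2) + (-2 * D0 * I0 ^ 2 * h ^ 3 * k ^ 3 * sg) + (-4 * D0 * Iw * h * k) + (4 * D0 * Iw * h ^ 2 * k ^ 2 * sg) + (2 * D0 * Iw ^ 2 * h ^ 2 * k ^ 2) + (-2 * D0 * Iw ^ 2 * h ^ 3 * k ^ 3 * sg) + (-8 * D0 * h * k * sg) + (4 * D1 * Ec * Eq0 * I0 * h ^ 6) + (4 * D1 * Ec * Eq0 * h ^ 6 * u) + (4 * D1 * Ec * Eqw * h ^ 6 * u) + (4 * D1 * Ec * I0 * h ^ 3) + (-4 * D1 * Ec * I0 * h ^ 4 * k * u) + (-4 * D1 * Ec * I0 ^ 2 * h ^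 4 * k) + (2 * D1 * Ec * I0 ^ 2 * h ^ 5 * k ^ 2 * u) + (2 * D1 * Ec * I0 ^ 3 * h ^ 5 * k ^ 2) + (-4 * D1 * Ec * Iw * h ^ 4 * k * u) + (2 * D1 * Ec * Iw ^ 2 * h ^ 5 * k ^ 2 * u) + (8 * D1 * Ec * h ^ 3 * u) + (4 * D1 * Eq0 * I0 * h ^ 4) + (-4 * D1 * Eq0 * I0 * h ^ 5 * k * sg) + (4 * D1 * Eq0 * h ^ 4 * u) + (-4 * D1 * Eq0 * h ^ 5 * k * sg * u) + (4 * D1 * Eqw * h ^ 4 * u) + (-4 * D1 * Eqw * h ^ 5 * k * sg * u) + (4 * D1 * I0 * h) + (-4 * D1 * I0 * h ^ 2 * k * sg) + (-4 * D1 * I0 * h ^ 2 * k * u) + (4 * D1 * I0 * h ^ 3 * k ^ 2 * sg * u) + (-4 * D1 * I0 ^ 2 * h ^ 2 * k) + (4 * D1 * I0 ^ 2 * h ^ 3 * k ^ 2 * sg) + (2 * D1 * I0 ^ 2 * h ^ 3 * k ^ 2 * u) + (-2 * D1 * I0 ^ 2 * h ^ 4 * k ^ 3 * sg * u) + (2 * D1 * I0 ^ 3 * h ^ 3 * k ^ 2) + (-2 * D1 * I0 ^ 3 * h ^ 4 * k ^ 3 * sg) + (-4 * D1 * Iw * h ^ 2 * k * u) + (4 * D1 * Iw * h ^ 3 * k ^ 2 * sg * u) + (2 * D1 * Iw ^ 2 * h ^ 3 * k ^ 2 * u) + (-2 * D1 * Iw ^ 2 * h ^ 4 * k ^ 3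 * sg * u) + (8 * D1 * h * u) + (-8 * D1 * h ^ 2 * k * sg * u) + (4 * D2 * Ec * Eq0 * I0 * h ^ 7 * u) + (2 * D2 * Ec * Eq0 * I0 ^ 2 * h ^ 7) + (2 * D2 * Ec * Eq0 * h ^ 7 * u ^ 2) + (2 * D2 * Ec * Eqw * h ^ 7 * u ^ 2) + (4 * D2 * Ec * I0 * h ^ 4 * u) + (-2 * D2 * Ec * I0 * h ^ 5 * k * u ^ 2) + (2 * D2 * Ec * I0 ^ 2 * h ^ 4) + (-4 * D2 * Ec * I0 ^ 2 * h ^ 5 * k * u) + (1 * D2 * Ec * I0 ^ 2 * h ^ 6 * k ^ 2 * u ^ 2) + (-2 * D2 * Ec * I0 ^ 3 * h ^ 5 * k) + (2 * D2 * Ec * I0 ^ 3 * h ^ 6 * k ^ 2 * u) + (1 * D2 * Ec * I0 ^ 4 * h ^ 6 * k ^ 2) + (-2 * D2 * Ec * Iw * h ^ 5 * k * u ^ 2) + (1 * D2 * Ec * Iw ^ 2 * h ^ 6 * k ^ 2 * u ^ 2) + (4 * D2 * Ec * h ^ 4 * u ^ 2) + (4 * D2 * Eq0 * I0 * h ^ 5 * u) + (-4 * D2 * Eq0 * I0 * h ^ 6 * k * sg * u) + (2 * D2 * Eq0 * I0 ^ 2 * h ^ 5) + (-2 * D2 * Eq0 * I0 ^ 2 * h ^ 6 * k * sg) + (2 * D2 * Eq0 * h ^ 5 * u ^ 2) + (-2 * D2 * Eq0 * h ^ 6 * k * sg * u ^ 2) + (2 * D2 * Eqw * h ^ 5 *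 u ^ 2) + (-2 * D2 * Eqw * h ^ 6 * k * sg * u ^ 2) + (4 * D2 * I0 * h ^ 2 * u) + (-4 * D2 * I0 * h ^ 3 * k * sg * u) + (-2 * D2 * I0 * h ^ 3 * k * u ^ 2) + (2 * D2 * I0 * h ^ 4 * k ^ 2 * sg * u ^ 2) + (2 * D2 * I0 ^ 2 * h ^ 2) + (-2 * D2 * I0 ^ 2 * h ^ 3 * k * sg) + (-4 * D2 * I0 ^ 2 * h ^ 3 * k * u) + (4 * D2 * I0 ^ 2 * h ^ 4 * k ^ 2 * sg * u) + (1 * D2 * I0 ^ 2 * h ^ 4 * k ^ 2 * u ^ 2) + (-1 * D2 * I0 ^ 2 * h ^ 5 * k ^ 3 * sg * u ^ 2) + (-2 * D2 * I0 ^ 3 * h ^ 3 * k) + (2 * D2 * I0 ^ 3 * h ^ 4 * k ^ 2 * sg) + (2 * D2 * I0 ^ 3 * h ^ 4 * k ^ 2 * u) + (-2 * D2 * I0 ^ 3 * h ^ 5 * k ^ 3 * sg * u) + (1 * D2 * I0 ^ 4 * h ^ 4 * k ^ 2) + (-1 * D2 * I0 ^ 4 * h ^ 5 * k ^ 3 * sg) + (-2 * D2 * Iw * h ^ 3 * k * u ^ 2) + (2 * D2 * Iw * h ^ 4 * k ^ 2 * sg * u ^ 2) + (1 * D2 * Iw ^ 2 * h ^ 4 * k ^ 2 * u ^ 2) + (-1 * D2 * Iw ^ 2 * h ^ 5 * k ^ 3 * sg * u ^ 2) + (4 * D2 * h ^ 2 * u ^ 2) + (-4 * D2 * h ^ 3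 * k * sg * u ^ 2) + (4 * EA * Ec * Eqw * h ^ 6) + (-4 * EA * Ec * Iw * h ^ 4 * k) + (2 * EA * Ec * Iw ^ 2 * h ^ 5 * k ^ 2) + (4 * EA * Ec * h ^ 3) + (4 * EA * Eqw * h ^ 4) + (-4 * EA * Eqw * h ^ 5 * k * sg) + (-4 * EA * Iw * h ^ 2 * k) + (4 * EA * Iw * h ^ 3 * k ^ 2 * sg) + (2 * EA * Iw ^ 2 * h ^ 3 * k ^ 2) + (-2 * EA * Iw ^ 2 * h ^ 4 * k ^ 3 * sg) + (4 * EA * h) + (-4 * EA * h ^ 2 * k * sg) + (4 * EB * Ec * Eq0 * h ^ 6) + (-4 * EB * Ec * I0 * h ^ 4 * k) + (2 * EB * Ec * I0 ^ 2 * h ^ 5 * k ^ 2) + (4 * EB * Ec * h ^ 3) + (4 * EB * Eq0 * h ^ 4) + (-4 * EB * Eq0 * h ^ 5 * k * sg) + (-4 * EB * I0 * h ^ 2 * k) + (4 * EB * I0 * h ^ 3 * k ^ 2 * sg) + (2 * EB * I0 ^ 2 * h ^ 3 * k ^ 2) + (-2 * EB * I0 ^ 2 * h ^ 4 * k ^ 3 * sg) + (4 * EB * h) + (-4 * EB * h ^ 2 * k * sg) + (4 * Ec * Eq0 * I0 * g1 * h ^ 4) + (4 * Ec * Eq0 * I0 * g2 * h ^ 5 * u) + (2 * Ec * Eq0 * I0 ^ 2 * g2 * h ^ 5) + (4 * Ec * Eq0 * g0 * h ^ 3) + (4 * Ec * Eq0 * g1 * h ^ 4 * u) + (2 * Ec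 * Eq0 * g2 * h ^ 5 * u ^ 2) + (4 * Ec * Eqw * g0 * h ^ 3) + (4 * Ec * Eqw * g1 * h ^ 4 * u) + (2 * Ec * Eqw * g2 * h ^ 5 * u ^ 2) + (-4 * Ec * I0 * g0 * h * k) + (4 * Ec * I0 * g1 * h) + (-4 * Ec * I0 * g1 * h ^ 2 * k * u) + (4 * Ec * I0 * g2 * h ^ 2 * u) + (-2 * Ec * I0 * g2 * h ^ 3 * k * u ^ 2) + (2 * Ec * I0 ^ 2 * g0 * h ^ 2 * k ^ 2) + (-4 * Ec * I0 ^ 2 * g1 * h ^ 2 * k) + (2 * Ec * I0 ^ 2 * g1 * h ^ 3 * k ^ 2 * u) + (2 * Ec * I0 ^ 2 * g2 * h ^ 2) + (-4 * Ec * I0 ^ 2 * g2 * h ^ 3 * k * u) + (1 * Ec * I0 ^ 2 * g2 * h ^ 4 * k ^ 2 * u ^ 2) + (2 * Ec * I0 ^ 3 * g1 * h ^ 3 * k ^ 2) + (-2 * Ec * I0 ^ 3 * g2 * h ^ 3 * k) + (2 * Ec * I0 ^ 3 * g2 * h ^ 4 * k ^ 2 * u) + (1 * Ec * I0 ^ 4 * g2 * h ^ 4 * k ^ 2) + (-4 * Ec * Iw * g0 * h * k) + (-4 * Ec * Iw * g1 * h ^ 2 * k * u) + (-2 * Ec * Iw * g2 * h ^ 3 * k * u ^ 2) + (2 * Ec * Iw ^ 2 * g0 * h ^ 2 * k ^ 2) + (2 * Ec * Iw ^ 2 * g1 * h ^ 3 * k ^ 2 * u) + (1 * Ec * Iw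 ^ 2 * g2 * h ^ 4 * k ^ 2 * u ^ 2) + (8 * Ec * g0) + (8 * Ec * g1 * h * u) + (4 * Ec * g2 * h ^ 2 * u ^ 2) + (4 * Eq0 * I0 * g1 * h ^ 2) + (-4 * Eq0 * I0 * g1 * h ^ 3 * k * sg) + (4 * Eq0 * I0 * g2 * h ^ 3 * u) + (-4 * Eq0 * I0 * g2 * h ^ 4 * k * sg * u) + (2 * Eq0 * I0 ^ 2 * g2 * h ^ 3) + (-2 * Eq0 * I0 ^ 2 * g2 * h ^ 4 * k * sg) + (4 * Eq0 * g0 * h) + (-4 * Eq0 * g0 * h ^ 2 * k * sg) + (4 * Eq0 * g1 * h ^ 2 * u) + (-4 * Eq0 * g1 * h ^ 3 * k * sg * u) + (2 * Eq0 * g2 * h ^ 3 * u ^ 2) + (-2 * Eq0 * g2 * h ^ 4 * k * sg * u ^ 2) + (4 * Eqw * g0 * h) + (-4 * Eqw * g0 * h ^ 2 * k * sg) + (4 * Eqw * g1 * h ^ 2 * u) + (-4 * Eqw * g1 * h ^ 3 * k * sg * u) + (2 * Eqw * g2 * h ^ 3 * u ^ 2) + (-2 * Eqw * g2 * h ^ 4 * k * sg * u ^ 2) + (4 * I0 * g0 * k ^ 2 * sg) + (4 * I0 * g1 * h * k ^ 2 * sg * u) + (-4 * I0 * g1 * k * sg) + (-4 * I0 * g1 * k * u) + (-4 * I0 * g2 * h * k * sg * u) + (-2 * I0 * g2 * h * k * u ^ 2) + (2 * I0 * g2 * h ^ 2 * k ^ 2 * sg * u ^ 2) + (4 * I0 *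 g2 * u) + (-2 * I0 ^ 2 * g0 * h * k ^ 3 * sg) + (2 * I0 ^ 2 * g0 * k ^ 2) + (4 * I0 ^ 2 * g1 * h * k ^ 2 * sg) + (2 * I0 ^ 2 * g1 * h * k ^ 2 * u) + (-2 * I0 ^ 2 * g1 * h ^ 2 * k ^ 3 * sg * u) + (-4 * I0 ^ 2 * g1 * k) + (2 * I0 ^ 2 * g2) + (-2 * I0 ^ 2 * g2 * h * k * sg) + (-4 * I0 ^ 2 * g2 * h * k * u) + (4 * I0 ^ 2 * g2 * h ^ 2 * k ^ 2 * sg * u) + (1 * I0 ^ 2 * g2 * h ^ 2 * k ^ 2 * u ^ 2) + (-1 * I0 ^ 2 * g2 * h ^ 3 * k ^ 3 * sg * u ^ 2) + (2 * I0 ^ 3 * g1 * h * k ^ 2) + (-2 * I0 ^ 3 * g1 * h ^ 2 * k ^ 3 * sg) + (-2 * I0 ^ 3 * g2 * h * k) + (2 * I0 ^ 3 * g2 * h ^ 2 * k ^ 2 * sg) + (2 * I0 ^ 3 * g2 * h ^ 2 * k ^ 2 * u) + (-2 * I0 ^ 3 * g2 * h ^ 3 * k ^ 3 * sg * u) + (1 * I0 ^ 4 * g2 * h ^ 2 * k ^ 2) + (-1 * I0 ^ 4 * g2 * h ^ 3 * k ^ 3 * sg) + (4 * Iw * g0 * k ^ 2 * sg) + (4 * Iw * g1 * h * k ^ 2 * sg * u) + (-4 * Iw * g1 * k * u) + (-2 * Iw * g2 * h * k * u ^ 2) + (2 * Iw * g2 * h ^ 2 * k ^ 2 * sg * u ^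 2) + (-2 * Iw ^ 2 * g0 * h * k ^ 3 * sg) + (2 * Iw ^ 2 * g0 * k ^ 2) + (2 * Iw ^ 2 * g1 * h * k ^ 2 * u) + (-2 * Iw ^ 2 * g1 * h ^ 2 * k ^ 3 * sg * u) + (1 * Iw ^ 2 * g2 * h ^ 2 * k ^ 2 * u ^ 2) + (-1 * Iw ^ 2 * g2 * h ^ 3 * k ^ 3 * sg * u ^ 2) + (-8 * g1 * k * sg * u) + (-4 * g2 * h * k * sg * u ^ 2) + (4 * g2 * u ^ 2)) / 8.

Lemma XY_id (h k Iw I0 sg u g0 g1 g2 D0 D1 D2 Eqw Eq0 Ec EA EB x y : R) :
  x = (1 - k * h * Iw + k * k * h * h * Iw * Iw / 2 + h ^ 3 * Eqw) * (1 - k * h * sg + h * h * Ec) *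
      ((g0 + h * h * D0) + h * u * (g1 + h * h * D1) + h * h * u * u / 2 * (g2 + h * h * D2) + h ^ 3 * EA) ->
  y = (1 - k * h * I0 + k * k * h * h * I0 * I0 / 2 + h ^ 3 * Eq0) * (1 - k * h * sg + h * h * Ec) *
      ((g0 + h * h * D0) + h * (u + I0) * (g1 + h * h * D1) + h * h * (u + I0) * (u + I0) / 2 * (g2 + h * h * D2) + h ^ 3 * EB) ->
  (x - y) / 2 = h * (a_t k Iw I0 g0 g1 + h * (b_t k Iw I0 sg u g0 g1 g2 + h * EXe h k Iw I0 sg u g0 g1 g2 D0 D1 D2 Eqw Eq0 Ec EA EB)) /\
  (x + y) / 2 = g0 + h * (y_t k Iw I0 sg u g0 g1 + h * EYe h k Iw I0 sg u g0 g1 g2 D0 D1 D2 Eqw Eq0 Ec EA EB).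
Proof. intros -> ->. unfold b_t, a_t, y_t, EXe, EYe. split; field. Qed.

Lemma EXY_bound (K : R) : 0 <= K -> exists C1 C2 C3 C4 C5, forall h k Iw I0 sg u g0 g1 g2 D0 D1 D2 Eqw Eq0 Ec EA EB,
  Rabs h <= 1 -> Rabs k <= K -> Rabs Iw <= K -> Rabs I0 <= K -> Rabs sg <= K -> Rabs u <= K ->
  Rabs g0 <= K -> Rabs g1 <= K -> Rabs g2 <= K -> Rabs D0 <= K -> Rabs D1 <= K -> Rabs D2 <= K ->
  Rabs Eqw <= K -> Rabs Eq0 <= K -> Rabs Ec <= K -> Rabs EA <= K -> Rabs EB <= K ->
  Rabs (EXe h k Iw I0 sg u g0 g1 g2 D0 D1 D2 Eqw Eq0 Ec EA EB) <= C1 /\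
  Rabs (EYe h k Iw I0 sg u g0 g1 g2 D0 D1 D2 Eqw Eq0 Ec EA EB) <= C2 /\ Rabs (a_t k Iw I0 g0 g1) <= C3 /\
  Rabs (b_t k Iw I0 sg u g0 g1 g2) <= C4 /\ Rabs (y_t k Iw I0 sg u g0 g1) <= C5.
Proof.
  intros HK. do 5 eexists. intros. unfold EXe, EYe, b_t, a_t, y_t.
  repeat split; bnd.
Qed.

Definition IwR (w : nat) : R := IZR (Iw w).

Lemma IwR_cases w : (w = 0 \/ w = 1 \/ w = 2)%nat -> (IwR w = 1 /\ w = 0%nat) \/ (IwR w = 0 /\ w = 1%nat) \/ (IwR w = -1 /\ w = 2%nat).
Proof. unfold IwR, Iw. intros [-> | [-> | ->] ]; simpl; [left|right;left|right;right]; split; auto; ring. Qed.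

Lemma IwR_abs w : (w = 0 \/ w = 1 \/ w = 2)%nat -> Rabs (IwR w) <= 1.
Proof. intros H. destruct (IwR_cases w H) as [[-> _] | [[-> _] | [-> _] ] ]; unfold Rabs; destruct Rcase_abs; lra. Qed.

Lemma qq_exp b k h w : 0 < b < 1 -> Rabs (k * h) <= 1 -> (w = 0 \/ w = 1 \/ w = 2)%nat ->
  exists E, Rabs E <= Rabs k ^ 3 /\
  qq b (k * h) w = 1 - k * h * IwR w + k * k * h * h * IwR w * IwR w / 2 + h ^ 3 * E.
Proof.
  intros Hb Hk Hw. apply abs_le_b in Hk.
  destruct (IwR_cases w Hw) as [[-> ->] | [[-> ->] | [-> ->] ] ]; unfold qq, nu, eta; simpl.
  - exists (- k ^ 3 / (4 * (1 + k * h / 2))). split.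
    + unfold Rdiv. rewrite Rabs_mult, Rabs_Ropp, Rabs_inv, <- RPow_abs.
      rewrite (Rabs_pos_eq (4 * _)) by lra.
      pose proof (pow_le (Rabs k) 3 (Rabs_pos k)).
      apply Rle_trans with (Rabs k ^ 3 * 1); [|lra]. apply Rmult_le_compat_l; auto.
      rewrite <- Rinv_1. apply Rinv_le_contravar; lra.
    + field. lra.
  - exists 0. split. rewrite Rabs_R0. pose proof (Rabs_pos k). apply Rmult_le_pos; auto. apply Rmult_le_pos; auto. lra. field. lra.
  - exists (k ^ 3 / (4 * (1 - k * h / 2))). split.
    + unfold Rdiv. rewrite Rabs_mult, Rabs_inv, <- RPow_abs.
      rewrite (Rabs_pos_eq (4 * _)) by lra.
      pose proof (pow_le (Rabs k) 3 (Rabs_pos k)).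
      apply Rle_trans with (Rabs k ^ 3 * 1); [|lra]. apply Rmult_le_compat_l; auto.
      rewrite <- Rinv_1. apply Rinv_le_contravar; lra.
    + field. lra.
Qed.

Lemma sigR_cons x w : sigR (x :: w) = IwR x + sigR w.
Proof. unfold sigR, IwR. simpl. rewrite plus_IZR. reflexivity. Qed.

Lemma cprod_exp k (n : nat) : exists Kc, forall b h wp, 0 < b < 1 -> 0 < h <= 1 -> Rabs (k * h) <= 1 ->
  length wp = n -> Forall (fun x => x = 0%nat \/ x = 1%nat \/ x = 2%nat) wp ->
  Rabs (sigR wp) <= INR n /\ exists Ec, Rabs Ec <= Kc /\ cprod b (k * h) wp = 1 - k * h * sigR wp + h * h * Ec.
Proof.
  induction n.
  - exists 0. intros b h wp Hb Hh Hk Hl _. destruct wp; [|discriminate]. unfold sigR, sigZ, cprod; simpl.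
    rewrite Rabs_R0. split; [lra|]. exists 0. split; [rewrite Rabs_R0; lra|ring].
  - destruct IHn as [Kc HKc]. eexists. intros b h wp Hb Hh Hk Hl HF.
    destruct wp as [|x wp]; [discriminate|]. simpl in Hl. injection Hl as Hl.
    pose proof (Forall_inv HF) as H1. pose proof (Forall_inv_tail HF) as H2.
    destruct (HKc b h wp Hb Hh Hk Hl H2) as [Hs [Ec [HEc Hc]]].
    destruct (qq_exp b k h x Hb Hk H1) as [Eq [HEq Hq]].
    pose proof (IwR_abs x H1) as HI.
    rewrite sigR_cons. split.
    { rewrite S_INR. eapply Rle_trans; [apply Rabs_triang|]. lra. }
    exists (Ec + k * k * IwR x * sigR wp - k * h * IwR x * Ec
       + (k * k * IwR x * IwR x / 2 + h * Eq) * cprod b (k * h) wp). split.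
    + assert (Hh1 : Rabs h <= 1) by (rewrite Rabs_pos_eq; lra).
      assert (Hcp : Rabs (cprod b (k * h) wp) <= 1 + Rabs k * 1 * INR n + 1 * 1 * Kc).
      { rewrite Hc. eapply Rle_trans; [apply ba_add; [apply ba_sub; [apply Rle_refl|]|]|].
        - apply ba_mul; [apply ba_mul|]; eauto. apply Rle_refl.
        - apply ba_mul; [apply ba_mul|]; eauto.
        - rewrite Rabs_R1. lra. }
      bnd.
    + simpl cprod. fold (cprod b (k * h) wp). rewrite Hq. unfold qq in Hq. revert Hc. generalize (cprod b (k * h) wp). intros C HC.
      rewrite HC. field.
Qed.

Lemma sumlt_ext N f g : (forall p, (p < N)%nat -> f p = g p) -> sumlt N f = sumlt N g.
Proof. induction N; intros H; simpl; auto. rewrite IHN by (intros; apply H; lia). rewrite H by lia. auto. Qed.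
Lemma sumlt_plus N f g : sumlt N (fun p => f p + g p) = sumlt N f + sumlt N g.
Proof. induction N; simpl; [ring|]. rewrite IHN; ring. Qed.
Lemma sumlt_scal N c f : sumlt N (fun p => c * f p) = c * sumlt N f.
Proof. induction N; simpl; [ring|]. rewrite IHN; ring. Qed.
Lemma sumlt_sum_f N g : sum_f_R0 g N = sumlt (S N) g.
Proof. induction N; simpl; [ring|]. rewrite IHN. simpl. ring. Qed.
Lemma sumlt_S n g : sumlt (S n) g = sumlt n g + g n.
Proof. reflexivity. Qed.
Lemma sumlt_pairs N g : sumlt (2 * N) g = sumlt N (fun p => g (2 * p)%nat + g (2 * p + 1)%nat).
Proof. induction N; [reflexivity|]. replace (2 * S N)%nat with (S (S (2 * N))) by lia.
  rewrite !sumlt_S, IHN. replace (S (2 * N)) with (2 * N + 1)%nat by lia. ring. Qed.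
Lemma sumlt_ind0 N g b : sumlt (S N) (fun p => g p * (b + (if Nat.eqb p 0 then 1 - b else 0))) =
  b * sumlt (S N) g + (1 - b) * g 0%nat.
Proof. induction N; simpl; [ring|]. simpl in IHN. rewrite IHN. ring. Qed.
Lemma sumlt_indN N g b : sumlt (S N) (fun p => g p * (b + (if Nat.eqb p N then 1 - b else 0))) =
  b * sumlt (S N) g + (1 - b) * g N.
Proof. simpl. rewrite Nat.eqb_refl. rewrite (sumlt_ext N _ (fun p => b * g p)).
  rewrite sumlt_scal. ring. intros p Hp. destruct (Nat.eqb_spec p N); [lia|ring]. Qed.

Lemma C_n_0' n : Binomial.C n 0 = 1.
Proof. unfold Binomial.C. simpl. rewrite Nat.sub_0_r. field. apply INR_fact_neq_0. Qed.
Lemma C_n_n' n : Binomial.C n n = 1.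
Proof. unfold Binomial.C. rewrite Nat.sub_diag. simpl. field. apply INR_fact_neq_0. Qed.

Lemma binom_odd (A B : R) (m' : nat) :
  sumlt (S m') (fun p => Binomial.C (2 * m' + 1) (2 * p) * A ^ (2 * p) * B ^ (2 * (m' - p) + 1)) =
    ((B + A) ^ (2 * m' + 1) + (B - A) ^ (2 * m' + 1)) / 2 /\
  sumlt (S m') (fun p => Binomial.C (2 * m' + 1) (2 * p + 1) * A ^ (2 * p + 1) * B ^ (2 * (m' - p))) =
    ((B + A) ^ (2 * m' + 1) - (B - A) ^ (2 * m' + 1)) / 2.
Proof.
  assert (Hp : forall (x : R) (n : nat), (B + x) ^ (2 * m' + 1) = sumlt (S m') (fun p =>
     Binomial.C (2 * m' + 1) (2 * p) * x ^ (2 * p) * B ^ (2 * (m' - p) + 1) +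
     Binomial.C (2 * m' + 1) (2 * p + 1) * x ^ (2 * p + 1) * B ^ (2 * (m' - p)))).
  { intros x _. rewrite Rplus_comm, binomial, sumlt_sum_f.
    replace (S (2 * m' + 1)) with (2 * S m')%nat by lia. rewrite sumlt_pairs.
    apply sumlt_ext. intros p Hp. f_equal; f_equal; f_equal; lia. }
  pose proof (Hp A O) as H1. pose proof (Hp (-A) O) as H2.
  replace (B + - A) with (B - A) in H2 by ring.
  rewrite H1, H2.
  rewrite (sumlt_ext (S m') (fun p => Binomial.C (2 * m' + 1) (2 * p) * (- A) ^ (2 * p) * B ^ (2 * (m' - p) + 1) +
     Binomial.C (2 * m' + 1) (2 * p + 1) * (- A) ^ (2 * p + 1) * B ^ (2 * (m' - p)))
     (fun p => Binomial.C (2 * m' + 1) (2 * p) * A ^ (2 * p) * B ^ (2 * (m' - p) + 1) +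
     (-1) * (Binomial.C (2 * m' + 1) (2 * p + 1) * A ^ (2 * p + 1) * B ^ (2 * (m' - p))))).
  2: { intros p _. rewrite !pow_add, !pow_mult. replace ((- A) ^ 2) with (A ^ 2) by ring. ring. }
  rewrite !sumlt_plus, sumlt_scal. split; field.
Qed.

Lemma binom_even (A B : R) (m' : nat) :
  sumlt (S m') (fun p => Binomial.C (2 * m') (2 * p) * A ^ (2 * p) * B ^ (2 * (m' - p))) =
    ((B + A) ^ (2 * m') + (B - A) ^ (2 * m')) / 2 /\
  sumlt m' (fun p => Binomial.C (2 * m') (2 * p + 1) * A ^ (2 * p + 1) * B ^ (2 * (m' - p) - 1)) =
    ((B + A) ^ (2 * m') - (B - A) ^ (2 * m')) / 2.
Proof.
  assert (Hp : forall (x : R), (B + x) ^ (2 * m') = sumlt m' (fun p =>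
     Binomial.C (2 * m') (2 * p) * x ^ (2 * p) * B ^ (2 * (m' - p)) +
     Binomial.C (2 * m') (2 * p + 1) * x ^ (2 * p + 1) * B ^ (2 * (m' - p) - 1)) + x ^ (2 * m')).
  { intros x. rewrite Rplus_comm, binomial, sumlt_sum_f, sumlt_S, sumlt_pairs.
    rewrite Nat.sub_diag, C_n_n'. f_equal; [|simpl; ring].
    apply sumlt_ext. intros p Hp. f_equal; f_equal; f_equal; lia. }
  pose proof (Hp A) as H1. pose proof (Hp (-A)) as H2.
  replace (B + - A) with (B - A) in H2 by ring.
  rewrite H1, H2.
  rewrite (sumlt_ext m' (fun p => Binomial.C (2 * m') (2 * p) * (- A) ^ (2 * p) * B ^ (2 * (m' - p)) +
     Binomial.C (2 * m') (2 * p + 1) * (- A) ^ (2 * p + 1) * B ^ (2 * (m' - p) - 1))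
     (fun p => Binomial.C (2 * m') (2 * p) * A ^ (2 * p) * B ^ (2 * (m' - p)) +
     (-1) * (Binomial.C (2 * m') (2 * p + 1) * A ^ (2 * p + 1) * B ^ (2 * (m' - p) - 1)))).
  2: { intros p _. rewrite !pow_add, !pow_mult. replace ((- A) ^ 2) with (A ^ 2) by ring. ring. }
  replace ((- A) ^ (2 * m')) with (A ^ (2 * m')) by (rewrite !pow_mult; f_equal; ring).
  rewrite !sumlt_plus, sumlt_scal, (sumlt_S m'). replace (2 * (m' - m'))%nat with 0%nat by lia.
  rewrite C_n_n'. split; field.
Qed.

Lemma Snu_2p b P p : Snu b P (2 * p) = b + (if Nat.eqb p 0 then 1 - b else 0).
Proof. unfold Snu. destruct p. simpl. ring.
  replace (Nat.eqb (2 * S p) 0) with false by (symmetry; apply Nat.eqb_neq; lia).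
  rewrite Nat.odd_even. simpl. ring. Qed.

Section S.
Variables (A B b P : R) (m' : nat).
Let Em := ((B + A) ^ (2 * m' + 1) + (B - A) ^ (2 * m' + 1)) / 2.
Let Om := ((B + A) ^ (2 * m' + 1) - (B - A) ^ (2 * m' + 1)) / 2.
Let E2 := ((B + A) ^ (2 * m') + (B - A) ^ (2 * m')) / 2.
Let O2 := ((B + A) ^ (2 * m') - (B - A) ^ (2 * m')) / 2.

Lemma L1 : sumlt (S m') (fun p => Binomial.C (2 * m' + 1) (2 * p) * A ^ (2 * p) * B ^ (2 * (m' - p) + 1) * Snu b P (2 * p)) =
  B ^ (2 * m' + 1) + b * (Em - B ^ (2 * m' + 1)).
Proof.
  rewrite (sumlt_ext _ _ (fun p => (Binomial.C (2 * m' + 1) (2 * p) * A ^ (2 * p) * B ^ (2 * (m' - p) + 1)) *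
     (b + (if Nat.eqb p 0 then 1 - b else 0)))) by (intros; rewrite Snu_2p; auto).
  rewrite sumlt_ind0. rewrite (proj1 (binom_odd A B m')). fold Em.
  rewrite C_n_0'. replace (2 * (m' - 0) + 1)%nat with (2 * m' + 1)%nat by lia. simpl. ring.
Qed.

Lemma L2 : sumlt (S m') (fun p => Binomial.C (2 * m' + 1) (2 * p + 1) * A ^ (2 * p + 1) * B ^ (2 * (m' - p)) * Snu b P (2 * (m' - p))) =
  A ^ (2 * m' + 1) + b * (Om - A ^ (2 * m' + 1)).
Proof.
  rewrite (sumlt_ext _ _ (fun p => (Binomial.C (2 * m' + 1) (2 * p + 1) * A ^ (2 * p + 1) * B ^ (2 * (m' - p))) *
     (b + (if Nat.eqb p m' then 1 - b else 0)))).
  2: { intros p Hp. rewrite Snu_2p. f_equal. f_equal. destruct (Nat.eqb_spec (m' - p) 0); destruct (Nat.eqb_spec p m'); auto; lia. }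
  rewrite sumlt_indN. rewrite (proj2 (binom_odd A B m')). fold Om.
  rewrite C_n_n'. replace (2 * (m' - m'))%nat with 0%nat by lia. simpl. ring.
Qed.

Lemma L3 (Y : R) : sumlt (S m') (fun p => Binomial.C (2 * m' + 1) (2 * p) * A ^ (2 * p) * B ^ (2 * (m' - p) + 1) * Y * Snu b P (2 * p)) =
  Y * (B ^ (2 * m' + 1) + b * (Em - B ^ (2 * m' + 1))).
Proof. rewrite <- L1, <- sumlt_scal. apply sumlt_ext. intros; ring. Qed.

Lemma L4 (Y : R) : sumlt (S m') (fun p => Binomial.C (2 * m' + 1) (2 * p + 1) * A ^ (2 * p + 1) * B ^ (2 * (m' - p)) * Y * Snu b P (2 * (m' - p))) =
  Y * (A ^ (2 * m' + 1) + b * (Om - A ^ (2 * m' + 1))).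
Proof. rewrite <- L2, <- sumlt_scal. apply sumlt_ext. intros; ring. Qed.

Lemma L5 (X1 X2 X3 X4 eps : R) : sumlt (S m') (fun p => Binomial.C (2 * m') (2 * p) * A ^ (2 * p) * B ^ (2 * (m' - p)) *
   (X1 * Snu b P (2 * (m' - p)) + X2 * Snu b P (2 * p) - eps * (X3 * Snu b P (2 * (m' - p)) + X4 * Snu b P (2 * p)))) =
  (X1 - eps * X3) * (A ^ (2 * m') + b * (E2 - A ^ (2 * m'))) + (X2 - eps * X4) * (B ^ (2 * m') + b * (E2 - B ^ (2 * m'))).
Proof.
  set (g := fun p => Binomial.C (2 * m') (2 * p) * A ^ (2 * p) * B ^ (2 * (m' - p))).
  rewrite (sumlt_ext _ _ (fun p => (X1 - eps * X3) * (g p * (b + (if Nat.eqb p m' then 1 - b else 0))) +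
      (X2 - eps * X4) * (g p * (b + (if Nat.eqb p 0 then 1 - b else 0))))).
  2: { intros p Hp. rewrite !Snu_2p. unfold g.
       replace (Nat.eqb (m' - p) 0) with (Nat.eqb p m'); [ring|].
       destruct (Nat.eqb_spec (m' - p) 0); destruct (Nat.eqb_spec p m'); auto; lia. }
  rewrite sumlt_plus, !sumlt_scal, sumlt_ind0, sumlt_indN.
  unfold g. rewrite (proj1 (binom_even A B m')). fold E2.
  rewrite C_n_0', C_n_n'. replace (2 * (m' - m'))%nat with 0%nat by lia. rewrite Nat.sub_0_r. simpl. ring.
Qed.

Lemma L6 (Xc : R) : sumlt m' (fun p => Binomial.C (2 * m') (2 * p + 1) * A ^ (2 * p + 1) * B ^ (2 * (m' - p) - 1) * Xc) =
  Xc * O2.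
Proof. unfold O2. rewrite <- (proj2 (binom_even A B m')), <- sumlt_scal. apply sumlt_ext. intros; ring. Qed.
End S.

Definition Tclosed (D v beta eps delta : R) (m' : nat) (rho rr rrr Ch Chr : R) : R :=
  let m := (2 * m' + 1)%nat in
  let A := v / D * rho in
  let B := - (v / D) * rho + rr in
  let Em := ((B + A) ^ m + (B - A) ^ m) / 2 in
  let Om := ((B + A) ^ m - (B - A) ^ m) / 2 in
  let E2 := ((B + A) ^ (2 * m') + (B - A) ^ (2 * m')) / 2 in
  let O2 := ((B + A) ^ (2 * m') - (B - A) ^ (2 * m')) / 2 in
  let S1 := B ^ m + beta * (Em - B ^ m) in
  let S2 := A ^ m + beta * (Om - A ^ m) in
  let S3 := A ^ (2 * m') + beta * (E2 - A ^ (2 * m')) in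
  let S4 := B ^ (2 * m') + beta * (E2 - B ^ (2 * m')) in
  let Y110 := v / D * rho in
  let Y210 := v / D * rho - 2 * rr in
  let Y101 := v / D * rho - rr in
  let Y201 := v / D * rho - rr in
  let X120 := (v / D) ^ 2 * rho in
  let X220 := (v / D) ^ 2 * rho - 2 * v / D * rr in
  let X111 := 0 in
  let X211 := 2 * v / D * rr - 2 * rrr in
  let X102 := - (v / D) ^ 2 * rho + 2 * v / D * rr - rrr in
  let X202 := - (v / D) ^ 2 * rho + 2 * v / D * rr - rrr in
  - (1 + eps * (-1) ^ m) * (v * Ch / 2 ^ m) * ((delta + 1) * S1 + (delta - 1) * S2)
  + (delta + 1) * (D / 2 ^ m) * Chr * ((Y101 - eps * Y201) * S1 + (Y110 - eps * Y210) * S2)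
  + (delta + 1) * (INR m * D / 2 ^ m) * Ch * ((X120 - eps * X220) * S3 + (X102 - eps * X202) * S4 + beta * ((X111 - eps * X211) * O2)).

Lemma Tsum_closed D v beta Peg eps delta m' rho rr rrr Ch Chr :
  Tsum D v beta Peg eps delta m' rho rr rrr Ch Chr = Tclosed D v beta eps delta m' rho rr rrr Ch Chr.
Proof.
  unfold Tsum, Tclosed. cbv zeta.
  rewrite L1, L2, L3, L4, L5, L6. ring.
Qed.

Definition M1T (k Iw I0 s g0 g1 g2 Ch Chr : R) (m' : nat) : R :=
  Chr * y_t k Iw I0 0 s g0 g1 * a_t k Iw I0 g0 g1 ^ (2 * m' + 1)
  + INR (2 * m' + 1) * Ch * a_t k Iw I0 g0 g1 ^ (2 * m' + 1 - 1) * b_t k Iw I0 0 s g0 g1 g2.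
Definition alphaT (k Iw I0 g0 g1 Ch ep : R) (m' : nat) : R := Ch * a_t k Iw I0 g0 g1 ^ (2 * m' + 1) * (1 - ep).
Definition gammaT (k Iw I0 g0 g1 g2 Ch Chr ep : R) (m' : nat) : R :=
  M1T k Iw I0 0 g0 g1 g2 Ch Chr m' - ep * M1T k Iw I0 Iw g0 g1 g2 Ch Chr m'.

(* weights : wt = W0 + h W1 + h^2 W2 *)
Definition W0f (b dl : R) (c : nat) : R :=
  match c with 0%nat => (1 + dl) * b / 4 | _ => (1 + dl) * (1 - b) / 2 end.
(* c = 0 : w,w0 in {0,2};  c = 1 : w in {0,2}, w0 = 1;  c = 2 : w = 1, w0 in {0,2} *)
Definition W1f (b k dl Iw I0 : R) (c : nat) : R :=
  match c with
  | 0%nat => (1 + dl) / 2 * (b * k * I0 / 4) + k * (dl - 1) * Iw / 4 * (b / 2)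
  | 1%nat => k * (dl - 1) * Iw * (1 - b) / 4
  | _ => (1 + dl) * (1 - b) * k * I0 / 4 end.
Definition W2f (b k dl Iw I0 : R) (c : nat) : R :=
  match c with 0%nat => k * (dl - 1) * Iw / 4 * (b * k * I0 / 4) | _ => 0 end.

Lemma pow_sb (m' : nat) (s x : R) : s * s = 1 ->
  (s * x / 2) ^ (2 * m' + 1) = s * x * x ^ (2 * m') / (2 * 2 ^ (2 * m')) /\
  (s * x / 2) ^ (2 * m' + 1 - 1) = x ^ (2 * m') / 2 ^ (2 * m').
Proof.
  intros Hs. replace (2 * m' + 1 - 1)%nat with (2 * m')%nat by lia.
  assert (E : (s * x / 2) ^ (2 * m') = x ^ (2 * m') / 2 ^ (2 * m')).
  { rewrite !pow_mult. replace ((s * x / 2) ^ 2) with (x ^ 2 / 2 ^ 2).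
    2: { simpl. replace (s * x / 2 * (s * x / 2 * 1)) with ((s * s) * x * x / 4) by field. rewrite Hs. field. }
    unfold Rdiv. rewrite Rpow_mult_distr, pow_inv. auto. }
  split; auto. rewrite pow_add, E. simpl. field. apply pow_nonzero. lra.
Qed.

Section K.
Variables (D v b dl ep g0 g1 g2 Ch Chr : R) (m' : nat).
Hypothesis HD : D <> 0.

Ltac subst_a :=
  replace (a_t (v / D) 1 1 g0 g1) with ((-1) * ((- (v / D) * g0 + g1) + v / D * g0) / 2) by (unfold a_t; field; auto);
  replace (a_t (v / D) 1 0 g0 g1) with ((-1) * (v / D * g0) / 2) by (unfold a_t; field; auto);
  replace (a_t (v / D) 1 (-1) g0 g1) with (1 * ((- (v / D) * g0 + g1) - v / D * g0) / 2) by (unfold a_t; field; auto);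
  replace (a_t (v / D) 0 1 g0 g1) with ((-1) * (- (v / D) * g0 + g1) / 2) by (unfold a_t; field; auto);
  replace (a_t (v / D) 0 (-1) g0 g1) with (1 * (- (v / D) * g0 + g1) / 2) by (unfold a_t; field; auto);
  replace (a_t (v / D) (-1) 1 g0 g1) with ((-1) * ((- (v / D) * g0 + g1) - v / D * g0) / 2) by (unfold a_t; field; auto);
  replace (a_t (v / D) (-1) 0 g0 g1) with (1 * (v / D * g0) / 2) by (unfold a_t; field; auto);
  replace (a_t (v / D) (-1) (-1) g0 g1) with (1 * ((- (v / D) * g0 + g1) + v / D * g0) / 2) by (unfold a_t; field; auto);
  assert (Hm1 : (-1) * (-1) = 1) by ring; assert (Hp1 : 1 * 1 = 1) by ring;
  rewrite ?(proj1 (pow_sb m' (-1) _ Hm1)), ?(proj2 (pow_sb m' (-1) _ Hm1)),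
          ?(proj1 (pow_sb m' 1 _ Hp1)), ?(proj2 (pow_sb m' 1 _ Hp1)).

Lemma KI0 :
  W0f b dl 0 * alphaT (v / D) 1 1 g0 g1 Ch ep m' + W0f b dl 1 * alphaT (v / D) 1 0 g0 g1 Ch ep m'
  + W0f b dl 0 * alphaT (v / D) 1 (-1) g0 g1 Ch ep m' + W0f b dl 2 * alphaT (v / D) 0 1 g0 g1 Ch ep m'
  + W0f b dl 2 * alphaT (v / D) 0 (-1) g0 g1 Ch ep m' + W0f b dl 0 * alphaT (v / D) (-1) 1 g0 g1 Ch ep m'
  + W0f b dl 1 * alphaT (v / D) (-1) 0 g0 g1 Ch ep m' + W0f b dl 0 * alphaT (v / D) (-1) (-1) g0 g1 Ch ep m' = 0.
Proof.
  unfold alphaT. subst_a. unfold W0f. field. split; [auto|apply pow_nonzero; lra].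
Qed.

Lemma KI1 :
  (W1f b (v / D) dl 1 1 0 * alphaT (v / D) 1 1 g0 g1 Ch ep m' + W0f b dl 0 * gammaT (v / D) 1 1 g0 g1 g2 Ch Chr ep m')
  + (W1f b (v / D) dl 1 0 1 * alphaT (v / D) 1 0 g0 g1 Ch ep m' + W0f b dl 1 * gammaT (v / D) 1 0 g0 g1 g2 Ch Chr ep m')
  + (W1f b (v / D) dl 1 (-1) 0 * alphaT (v / D) 1 (-1) g0 g1 Ch ep m' + W0f b dl 0 * gammaT (v / D) 1 (-1) g0 g1 g2 Ch Chr ep m')
  + (W1f b (v / D) dl 0 1 2 * alphaT (v / D) 0 1 g0 g1 Ch ep m' + W0f b dl 2 * gammaT (v / D) 0 1 g0 g1 g2 Ch Chr ep m')
  + (W1f b (v / D) dl 0 (-1) 2 * alphaT (v / D) 0 (-1) g0 g1 Ch ep m' + W0f b dl 2 * gammaT (v / D) 0 (-1) g0 g1 g2 Ch Chr ep m')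
  + (W1f b (v / D) dl (-1) 1 0 * alphaT (v / D) (-1) 1 g0 g1 Ch ep m' + W0f b dl 0 * gammaT (v / D) (-1) 1 g0 g1 g2 Ch Chr ep m')
  + (W1f b (v / D) dl (-1) 0 1 * alphaT (v / D) (-1) 0 g0 g1 Ch ep m' + W0f b dl 1 * gammaT (v / D) (-1) 0 g0 g1 g2 Ch Chr ep m')
  + (W1f b (v / D) dl (-1) (-1) 0 * alphaT (v / D) (-1) (-1) g0 g1 Ch ep m' + W0f b dl 0 * gammaT (v / D) (-1) (-1) g0 g1 g2 Ch Chr ep m')
  = Tclosed D v b ep dl m' g0 g1 g2 Ch Chr / (2 * D).
Proof.
  unfold gammaT, M1T, alphaT. unfold b_t. subst_a.
  unfold Tclosed. cbv zeta.
  rewrite !pow_add. rewrite pow_1. replace ((-1) ^ (2 * m')) with 1 by (rewrite pow_mult; replace ((-1) ^ 2) with 1 by ring; rewrite pow1; auto).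
  rewrite plus_INR, mult_INR.
  set (QP := ((- (v / D) * g0 + g1) + v / D * g0) ^ (2 * m')).
  set (QM := ((- (v / D) * g0 + g1) - v / D * g0) ^ (2 * m')).
  set (QA := (v / D * g0) ^ (2 * m')).
  set (QB := (- (v / D) * g0 + g1) ^ (2 * m')).
  set (T2 := 2 ^ (2 * m')).
  assert (T2 <> 0) by (apply pow_nonzero; lra).
  unfold W0f, W1f, y_t. field. auto.
Qed.
End K.

Lemma lsum3 (g : nat -> R) : lsum [0%nat; 1%nat; 2%nat] g = g 0%nat + g 1%nat + g 2%nat.
Proof. unfold lsum; simpl; ring. Qed.

Definition Gsum (b P : R) (f : R -> R -> R) (sd : Z -> Z -> R) (k1 : nat) (l n : Z) (w w0 : nat) : R :=
  lsum (trits k1) (fun wp => nuw b P wp * Ffun b P f sd l n w (w0 :: wp)).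

Lemma Kval_decomp D v b h k1 m eps delta f sd n l :
  Kval D v b h (S k1) m eps delta f sd n l =
  h * lsum [0%nat; 1%nat; 2%nat] (fun w => lsum [0%nat; 1%nat; 2%nat] (fun w0 =>
     (eta b (v * h / D) w + delta * nu b (v * h / D) w) * nu b (v * h / D) w0 *
     (Gsum b (v * h / D) f sd k1 l n w w0 + eps * (-1) ^ m * Gsum b (v * h / D) f sd k1 l (n + Iw w)%Z w w0))).
Proof.
  unfold Kval. rewrite <- lsum_scal. apply lsum_ext. intros w _.
  rewrite lsum_trits_S. rewrite lsum3. unfold Gsum.
  set (P := v * h / D).
  set (c := eta b P w + delta * nu b P w).
  set (e := eps * (-1) ^ m).
  set (F := fun w0 wp => Ffun b P f sd l n w (w0 :: wp)).
  set (F' := fun w0 wp => Ffun b P f sd l (n + Iw w) w (w0 :: wp)).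
  transitivity (lsum (trits k1) (fun wp => h * (
     (c * nu b P 0 * (nuw b P wp * F 0%nat wp + e * (nuw b P wp * F' 0%nat wp))
     + c * nu b P 1 * (nuw b P wp * F 1%nat wp + e * (nuw b P wp * F' 1%nat wp)))
     + c * nu b P 2 * (nuw b P wp * F 2%nat wp + e * (nuw b P wp * F' 2%nat wp))))).
  - apply lsum_ext. intros wp _. rewrite !nuw_cons. unfold F, F'. ring.
  - rewrite lsum_scal, !lsum_plus, !lsum_scal, !lsum_plus, !lsum_scal. unfold F, F'. ring.
Qed.

Definition wcls (w w0 : nat) : nat :=
  match w, w0 with
  | 1%nat, _ => 2%nat
  | _, 1%nat => 1%nat
  | _, _ => 0%nat end.

Lemma weight_eq b v D dl h w w0 : 0 < b < 1 -> D <> 0 ->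
  (w = 0 \/ w = 1 \/ w = 2)%nat -> (w0 = 0 \/ w0 = 1 \/ w0 = 2)%nat -> ~ (w = 1 /\ w0 = 1)%nat ->
  (eta b (v * h / D) w + dl * nu b (v * h / D) w) * nu b (v * h / D) w0 =
  b * (W0f b dl (wcls w w0) + h * W1f b (v / D) dl (IwR w) (IwR w0) (wcls w w0)
       + h ^ 2 * W2f b (v / D) dl (IwR w) (IwR w0) (wcls w w0)).
Proof.
  intros Hb HD Hw Hw0 Hn.
  destruct Hw as [-> | [-> | ->] ]; destruct Hw0 as [-> | [-> | ->] ]; try (exfalso; apply Hn; auto; fail);
  unfold eta, nu, wcls, W0f, W1f, W2f, IwR, Iw; simpl; field; auto.
Qed.

Definition Mdel (k Iw I0 g0 g1 g2 Ch Chr : R) (m' : nat) : R :=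
  Chr * (- k * g0 + g1) * a_t k Iw I0 g0 g1 ^ (2 * m' + 1)
  + INR (2 * m' + 1) * Ch * a_t k Iw I0 g0 g1 ^ (2 * m' + 1 - 1) *
    (- k * a_t k Iw I0 g0 g1 + (- k * (Iw - I0) * g1 - g2 * I0) / 2).

Lemma main_affine k Iw I0 s sg g0 g1 g2 Ch Chr m' h :
  h ^ (2 * m' + 1 + 1) * (Chr * y_t k Iw I0 sg (s + sg) g0 g1 * a_t k Iw I0 g0 g1 ^ (2 * m' + 1)
     + INR (2 * m' + 1) * Ch * a_t k Iw I0 g0 g1 ^ (2 * m' + 1 - 1) * b_t k Iw I0 sg (s + sg) g0 g1 g2)
  = h ^ (2 * m' + 1 + 1) * (M1T k Iw I0 s g0 g1 g2 Ch Chr m' + sg * Mdel k Iw I0 g0 g1 g2 Ch Chr m').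
Proof. unfold M1T, Mdel, y_t, b_t. field. Qed.

Lemma abs_IZR_le1 z : (z = 0 \/ z = 1 \/ z = -1)%Z -> Rabs (IZR z) <= 1.
Proof. intros [-> | [-> | ->] ]; simpl; unfold Rabs; destruct Rcase_abs; lra. Qed.

Section TermEst.
Variables (D v : R) (HD : 0 < D) (beta : R -> R) (Hbeta : forall dr, 0 < dr -> 0 < beta dr < 1)
  (k1 : nat) (rho rho_r rho_rr : R -> R -> R) (Hrho : smooth2 rho)
  (Hrho_r : forall r t, derivable_pt_lim (fun s => rho s t) r (rho_r r t))
  (Hrho_rr : forall r t, derivable_pt_lim (fun s => rho_r s t) r (rho_rr r t))
  (m' : nat) (f : R -> R -> R) (Chat Chat_rho : R -> R) (HC : smooth1 Chat)
  (HCd : forall y, derivable_pt_lim Chat y (Chat_rho y))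
  (Hfexp : forall M, 0 < M -> exists c e, 0 < e /\ forall x y, Rabs ((x + y) / 2) <= M -> Rabs ((x - y) / 2) < e ->
     Rabs (f x y - Chat ((x + y) / 2) * ((x - y) / 2) ^ (2 * m' + 1)) <= c * Rabs ((x - y) / 2) ^ (2 * m' + 1 + 2))
  (R0 T0 : R).

Lemma term_est : exists Cf K h0, 0 < h0 /\ 0 <= K /\ forall h n l w w0 s wp,
  0 < h < h0 -> Rabs (IZR n * h) <= R0 -> Rabs (IZR l * tau_of D (beta h) h) <= T0 ->
  (w = 0 \/ w = 1 \/ w = 2)%nat -> (w0 = 0 \/ w0 = 1 \/ w0 = 2)%nat -> (s = 0 \/ s = Iw w)%Z -> In wp (trits k1) ->
  let tau := tau_of D (beta h) h in
  let sd := fun n' l' => rho (IZR n' * h) (IZR l' * tau) in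
  let g0 := rho (IZR n * h) (IZR l * tau) in
  let g1 := rho_r (IZR n * h) (IZR l * tau) in
  let g2 := rho_rr (IZR n * h) (IZR l * tau) in
  Rabs (g0) <= K /\ Rabs g1 <= K /\ Rabs g2 <= K /\
  Rabs (a_t (v / D) (IwR w) (IwR w0) g0 g1) <= K /\
  Rabs (b_t (v / D) (IwR w) (IwR w0) 0 (IZR s) g0 g1 g2) <= K /\
  Rabs (y_t (v / D) (IwR w) (IwR w0) 0 (IZR s) g0 g1) <= K /\
  Rabs (Ffun (beta h) (v * h / D) f sd l (n + s) w (w0 :: wp)
     - (h ^ (2 * m' + 1) * (Chat g0 * a_t (v / D) (IwR w) (IwR w0) g0 g1 ^ (2 * m' + 1))
        + h ^ (2 * m' + 1 + 1) * (M1T (v / D) (IwR w) (IwR w0) (IZR s) g0 g1 g2 (Chat g0) (Chat_rho g0) m'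
            + sigR wp * Mdel (v / D) (IwR w) (IwR w0) g0 g1 g2 (Chat g0) (Chat_rho g0) m')))
    <= Cf * h ^ (2 * m' + 1 + 2).
Proof.
  set (kap := v / D).
  set (R1 := Rabs R0 + INR k1 + 4). set (T1 := Rabs T0 + 1).
  destruct (rho_facts rho rho_r rho_rr Hrho Hrho_r Hrho_rr R1 T1) as [Br [HBr [Hval [Htay Htime]]]].
  destruct (cprod_exp kap k1) as [Kc HKc].
  set (K' := Rabs kap + 1 + (INR k1 + 2) + Br + Br * (INR k1 + 1) / (2 * D) + Rabs kap ^ 3 + Rabs Kc
             + Br * (INR k1 + 2) ^ 3).
  assert (HK'0 : 0 <= K').
  { unfold K'. pose proof (Rabs_pos kap). pose proof (Rabs_pos Kc). pose proof (pos_INR k1).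
    pose proof (pow_le (Rabs kap) 3 (Rabs_pos kap)).
    assert (0 <= Br * (INR k1 + 1) / (2 * D)) by (apply Rmult_le_pos; [nra|]; apply Rlt_le, Rinv_0_lt_compat; lra).
    assert (0 <= Br * (INR k1 + 2) ^ 3) by (apply Rmult_le_pos; [lra|]; apply pow_le; lra). lra. }
  destruct (EXY_bound K' HK'0) as [C1 [C2 [C3 [C4 [C5 HEXY]]]]].
  set (K := Rabs C1 + Rabs C2 + Rabs C3 + Rabs C4 + Rabs C5 + Br).
  assert (HK0 : 0 <= K) by (unfold K; pose proof (Rabs_pos C1); pose proof (Rabs_pos C2);
     pose proof (Rabs_pos C3); pose proof (Rabs_pos C4); pose proof (Rabs_pos C5); lra).
  destruct (f_expand f Chat Chat_rho (2 * m' + 1) Hfexp (chat_facts Chat Chat_rho HC HCd) K HK0) as [Cf [hf [Hhf Hfe]]].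
  set (h0 := Rmin hf (Rmin (1 / (INR k1 + 4)) (Rmin (D / (Rabs v + 1)) (2 * D / (INR k1 + 2))))).
  assert (Hh0 : 0 < h0).
  { unfold h0. pose proof (pos_INR k1). pose proof (Rabs_pos v).
    repeat apply Rmin_glb_lt; auto; apply Rdiv_lt_0_compat; lra. }
  exists Cf, K, h0. split; [auto|split; [auto|]].
  intros h n l w w0 s wp Hh Hr Ht Hw Hw0 Hs Hwp tau sd g0 g1 g2.
  assert (Hhf' : h < hf) by (pose proof (Rmin_l hf (Rmin (1 / (INR k1 + 4)) (Rmin (D / (Rabs v + 1)) (2 * D / (INR k1 + 2))))); fold h0 in H; lra).
  assert (Hh1 : h < 1 / (INR k1 + 4)).
  { pose proof (Rmin_r hf (Rmin (1 / (INR k1 + 4)) (Rmin (D / (Rabs v + 1)) (2 * D / (INR k1 + 2))))); fold h0 in H.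
    pose proof (Rmin_l (1 / (INR k1 + 4)) (Rmin (D / (Rabs v + 1)) (2 * D / (INR k1 + 2)))). lra. }
  assert (Hh2 : h < D / (Rabs v + 1)).
  { pose proof (Rmin_r hf (Rmin (1 / (INR k1 + 4)) (Rmin (D / (Rabs v + 1)) (2 * D / (INR k1 + 2))))); fold h0 in H.
    pose proof (Rmin_r (1 / (INR k1 + 4)) (Rmin (D / (Rabs v + 1)) (2 * D / (INR k1 + 2)))).
    pose proof (Rmin_l (D / (Rabs v + 1)) (2 * D / (INR k1 + 2))). lra. }
  assert (Hh3 : h < 2 * D / (INR k1 + 2)).
  { pose proof (Rmin_r hf (Rmin (1 / (INR k1 + 4)) (Rmin (D / (Rabs v + 1)) (2 * D / (INR k1 + 2))))); fold h0 in H.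
    pose proof (Rmin_r (1 / (INR k1 + 4)) (Rmin (D / (Rabs v + 1)) (2 * D / (INR k1 + 2)))).
    pose proof (Rmin_r (D / (Rabs v + 1)) (2 * D / (INR k1 + 2))). lra. }
  clear Hh0.
  pose proof (pos_INR k1) as Hk1.
  assert (Hhpos : 0 < h) by lra.
  assert (Hhle1 : h <= 1).
  { assert (1 / (INR k1 + 4) <= 1) by (apply Rle_trans with (1/1); [apply Rmult_le_compat_l; [lra|]; apply Rinv_le_contravar; lra| lra]). lra. }
  assert (Hhabs : Rabs h <= 1) by (rewrite Rabs_pos_eq; lra).
  destruct (Hbeta h Hhpos) as [Hb0 Hb1].
  assert (Hb : 0 < beta h < 1) by lra.
  assert (Hkh : Rabs (kap * h) <= 1).
  { unfold kap. rewrite Rabs_mult, (Rabs_pos_eq h) by lra. unfold Rdiv. rewrite Rabs_mult, Rabs_inv, (Rabs_pos_eq D) by lra.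
    apply (Rmult_lt_compat_r (Rabs v + 1)) in Hh2; [|pose proof (Rabs_pos v); lra].
    unfold Rdiv in Hh2. rewrite Rmult_assoc, Rinv_l, Rmult_1_r in Hh2 by (pose proof (Rabs_pos v); lra).
    pose proof (Rabs_pos v).
    apply Rle_trans with (Rabs v * h / D); [right; field; lra|].
    apply Rmult_le_reg_r with D; [lra|]. unfold Rdiv. rewrite Rmult_assoc, Rinv_l, Rmult_1_r by lra. nra. }
  assert (Htau : tau = beta h * h ^ 2 / (2 * D)) by reflexivity.
  set (dt := - (INR k1 + 1) * tau).
  assert (Hdt : Rabs dt <= h * h * ((INR k1 + 1) / (2 * D))).
  { assert (E : dt = - ((INR k1 + 1) * beta h * (h * h) / (2 * D))) by (unfold dt; rewrite Htau; field; lra).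
    rewrite E, Rabs_Ropp. assert (0 <= h * h) by nra.
    assert (E2 : (INR k1 + 1) * beta h * (h * h) / (2 * D) = ((INR k1 + 1) * (h * h) / (2 * D)) * beta h) by (field; lra).
    assert (0 <= (INR k1 + 1) * (h * h) / (2 * D)) by (apply Rmult_le_pos; [nra|apply Rlt_le, Rinv_0_lt_compat; lra]).
    rewrite E2, Rabs_pos_eq by nra.
    apply Rle_trans with ((INR k1 + 1) * (h * h) / (2 * D) * 1); [apply Rmult_le_compat_l; lra|].
    right; field; lra. }
  assert (Hdt1 : Rabs dt <= 1).
  { eapply Rle_trans; [exact Hdt|].
    apply (Rmult_lt_compat_r (INR k1 + 2)) in Hh3; [|lra]. unfold Rdiv in Hh3.
    rewrite Rmult_assoc, Rinv_l, Rmult_1_r in Hh3 by lra.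
    apply Rle_trans with (h * (h * (INR k1 + 1) / (2 * D))); [right; unfold Rdiv; ring|].
    assert (h * (INR k1 + 1) / (2 * D) <= 1).
    { apply Rmult_le_reg_r with (2 * D); [lra|]. unfold Rdiv. rewrite Rmult_assoc, Rinv_l, Rmult_1_r by lra. nra. }
    assert (0 <= h * (INR k1 + 1) / (2 * D)) by (apply Rmult_le_pos; [nra|apply Rlt_le, Rinv_0_lt_compat; lra]).
    nra. }
  fold tau in Ht. set (r := IZR n * h) in *. set (t := IZR l * tau) in *.
  assert (HrR : Rabs r <= R1) by (unfold R1; pose proof (Rle_abs R0); lra).
  assert (HtT : Rabs t <= T1) by (unfold T1; pose proof (Rle_abs T0); lra).
  assert (HtT' : Rabs (t + dt) <= T1).
  { unfold T1. eapply Rle_trans; [apply Rabs_triang|]. pose proof (Rle_abs T0). lra. }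
  destruct (trits_prop k1 wp Hwp) as [Hlen HF].
  destruct (qq_exp (beta h) kap h w Hb Hkh Hw) as [Eqw [HEqw Hqw]].
  destruct (qq_exp (beta h) kap h w0 Hb Hkh Hw0) as [Eq0 [HEq0 Hq0]].
  destruct (HKc (beta h) h wp Hb (conj Hhpos Hhle1) Hkh Hlen HF) as [Hsig [Ec [HEc Hcp]]].
  pose proof (IwR_abs w Hw) as HIw. pose proof (IwR_abs w0 Hw0) as HI0.
  assert (HsR : Rabs (IZR s) <= 1).
  { apply abs_IZR_le1. destruct Hs as [->| ->]; [auto|]. unfold Iw.
    destruct Hw as [->|[->| ->]]; simpl; auto. }
  set (sg := sigR wp) in *.
  set (u := IZR s + sg).
  assert (Hu : Rabs u <= INR k1 + 1) by (unfold u; eapply Rle_trans; [apply Rabs_triang|]; lra).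
  assert (Hu0 : Rabs (u + IwR w0) <= INR k1 + 2) by (eapply Rle_trans; [apply Rabs_triang|]; lra).
  replace (v * h / D) with (kap * h) by (unfold kap; field; lra).
  unfold Ffun. change (eta (beta h) (kap * h) w / nu (beta h) (kap * h) w) with (qq (beta h) (kap * h) w).
  change (eta (beta h) (kap * h) w0 / nu (beta h) (kap * h) w0) with (qq (beta h) (kap * h) w0).
  rewrite !celldens_eq. rewrite Hlen. unfold sd.
  replace (IZR (n + s + sigZ wp) * h) with (r + u * h) by (unfold r, u, sg, sigR; rewrite !plus_IZR; ring).
  replace (IZR (n + s + Iw w0 + sigZ wp) * h) with (r + (u + IwR w0) * h)
    by (unfold r, u, sg, sigR, IwR; rewrite !plus_IZR; ring).
  replace (IZR (l - 1 - Z.of_nat k1) * tau) with (t + dt)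
    by (unfold t, dt; rewrite !minus_IZR, INR_IZR_INZ; ring).
  assert (Eg0 : g0 = rho r t) by reflexivity. assert (Eg1 : g1 = rho_r r t) by reflexivity.
  assert (Eg2 : g2 = rho_rr r t) by reflexivity.
  clearbody g0 g1 g2.
  destruct (Hval r t HrR HtT) as [Hg0 [Hg1 Hg2]]. rewrite <- Eg0 in Hg0. rewrite <- Eg1 in Hg1. rewrite <- Eg2 in Hg2.
  assert (Hhh : 0 < h * h) by nra.
  set (D0 := (rho r (t + dt) - g0) / (h * h)).
  set (D1 := (rho_r r (t + dt) - g1) / (h * h)).
  set (D2 := (rho_rr r (t + dt) - g2) / (h * h)).
  set (EA := (rho (r + u * h) (t + dt) - rho r (t + dt) - (u * h) * rho_r r (t + dt)
              - (u * h) * (u * h) / 2 * rho_rr r (t + dt)) / h ^ 3).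
  set (EB := (rho (r + (u + IwR w0) * h) (t + dt) - rho r (t + dt) - ((u + IwR w0) * h) * rho_r r (t + dt)
              - ((u + IwR w0) * h) * ((u + IwR w0) * h) / 2 * rho_rr r (t + dt)) / h ^ 3).
  assert (Hh3p : 0 < h ^ 3) by (apply pow_lt; lra).
  assert (Hdiv : forall z B, Rabs (z * (h * h)) <= B * (h * h) -> Rabs z <= B).
  { intros z B Hz. rewrite Rabs_mult, (Rabs_pos_eq (h*h)) in Hz by lra. nra. }
  assert (Hdiv3 : forall z B, Rabs (z * h ^ 3) <= B * h ^ 3 -> Rabs z <= B).
  { intros z B Hz. rewrite Rabs_mult, (Rabs_pos_eq (h^3)) in Hz by lra. nra. }
  destruct (Htime r t dt HrR HtT Hdt1) as [Ht0 [Ht1 Ht2]].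
  rewrite <- Eg0 in Ht0. rewrite <- Eg1 in Ht1. rewrite <- Eg2 in Ht2.
  assert (HBD : Br * Rabs dt <= Br * ((INR k1 + 1) / (2 * D)) * (h * h)).
  { apply Rle_trans with (Br * (h * h * ((INR k1 + 1) / (2 * D)))); [apply Rmult_le_compat_l; lra|right; ring]. }
  assert (HD0 : Rabs D0 <= Br * ((INR k1 + 1) / (2 * D))).
  { apply Hdiv. unfold D0. replace ((rho r (t + dt) - g0) / (h * h) * (h * h)) with (rho r (t + dt) - g0) by (field; lra). lra. }
  assert (HD1 : Rabs D1 <= Br * ((INR k1 + 1) / (2 * D))).
  { apply Hdiv. unfold D1. replace ((rho_r r (t + dt) - g1) / (h * h) * (h * h)) with (rho_r r (t + dt) - g1) by (field; lra). lra. }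
  assert (HD2 : Rabs D2 <= Br * ((INR k1 + 1) / (2 * D))).
  { apply Hdiv. unfold D2. replace ((rho_rr r (t + dt) - g2) / (h * h) * (h * h)) with (rho_rr r (t + dt) - g2) by (field; lra). lra. }
  assert (Hk4 : (INR k1 + 2) * h <= 1).
  { apply (Rmult_lt_compat_r (INR k1 + 4)) in Hh1; [|lra]. unfold Rdiv in Hh1.
    rewrite Rmult_1_l, Rinv_l in Hh1 by lra. nra. }
  assert (HEA : Rabs EA <= Br * (INR k1 + 2) ^ 3).
  { apply Hdiv3. unfold EA.
    replace ((rho (r + u * h) (t + dt) - rho r (t + dt) - u * h * rho_r r (t + dt) - u * h * (u * h) / 2 * rho_rr r (t + dt)) / h ^ 3 * h ^ 3)
      with (rho (r + u * h) (t + dt) - rho r (t + dt) - u * h * rho_r r (t + dt) - u * h * (u * h) / 2 * rho_rr r (t + dt)) by (field; lra).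
    assert (Huh : Rabs (u * h) <= 1) by (rewrite Rabs_mult, (Rabs_pos_eq h) by lra; nra).
    eapply Rle_trans; [apply Htay; auto|].
    rewrite Rabs_mult, (Rabs_pos_eq h) by lra. rewrite Rpow_mult_distr.
    rewrite <- Rmult_assoc. apply Rmult_le_compat_r; [lra|]. apply Rmult_le_compat_l; [lra|].
    apply pow_incr. split; [apply Rabs_pos|lra]. }
  assert (HEB : Rabs EB <= Br * (INR k1 + 2) ^ 3).
  { apply Hdiv3. unfold EB.
    set (z := u + IwR w0) in *.
    replace ((rho (r + z * h) (t + dt) - rho r (t + dt) - z * h * rho_r r (t + dt) - z * h * (z * h) / 2 * rho_rr r (t + dt)) / h ^ 3 * h ^ 3)
      with (rho (r + z * h) (t + dt) - rho r (t + dt) - z * h * rho_r r (t + dt) - z * h * (z * h) / 2 * rho_rr r (t + dt)) by (field; lra).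
    assert (Huh : Rabs (z * h) <= 1) by (rewrite Rabs_mult, (Rabs_pos_eq h) by lra; nra).
    eapply Rle_trans; [apply Htay; auto|].
    rewrite Rabs_mult, (Rabs_pos_eq h) by lra. rewrite Rpow_mult_distr.
    rewrite <- Rmult_assoc. apply Rmult_le_compat_r; [lra|]. apply Rmult_le_compat_l; [lra|].
    apply pow_incr. split; [apply Rabs_pos|lra]. }
  assert (P1 : 0 <= Br * (INR k1 + 1) / (2 * D)) by (apply Rmult_le_pos; [nra|apply Rlt_le, Rinv_0_lt_compat; lra]).
  assert (P2 : 0 <= Br * (INR k1 + 2) ^ 3) by (apply Rmult_le_pos; [lra|]; apply pow_le; lra).
  assert (P3 : 0 <= Rabs kap ^ 3) by (apply pow_le, Rabs_pos).
  pose proof (Rabs_pos kap) as P4. pose proof (Rabs_pos Kc) as P5. pose proof (Rle_abs Kc) as P6.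
  assert (Ekap : Rabs kap <= K') by (unfold K'; lra).
  assert (E1 : 1 <= K') by (unfold K'; lra).
  assert (Ek1 : INR k1 + 2 <= K') by (unfold K'; lra).
  assert (EBr : Br <= K') by (unfold K'; lra).
  assert (EBD : Br * ((INR k1 + 1) / (2 * D)) <= K') by (unfold K'; unfold Rdiv in *; rewrite <- Rmult_assoc; lra).
  assert (Ek3 : Rabs kap ^ 3 <= K') by (unfold K'; lra).
  assert (EKc : Kc <= K') by (unfold K'; lra).
  assert (EBE : Br * (INR k1 + 2) ^ 3 <= K') by (unfold K'; lra).
  assert (Ex : qq (beta h) (kap * h) w * (cprod (beta h) (kap * h) wp * rho (r + u * h) (t + dt)) =
    (1 - kap * h * IwR w + kap * kap * h * h * IwR w * IwR w / 2 + h ^ 3 * Eqw) * (1 - kap * h * sg + h * h * Ec) *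
      ((g0 + h * h * D0) + h * u * (g1 + h * h * D1) + h * h * u * u / 2 * (g2 + h * h * D2) + h ^ 3 * EA)).
  { rewrite Hqw, Hcp. unfold D0, D1, D2, EA. field. lra. }
  assert (Ey : qq (beta h) (kap * h) w0 * (cprod (beta h) (kap * h) wp * rho (r + (u + IwR w0) * h) (t + dt)) =
    (1 - kap * h * IwR w0 + kap * kap * h * h * IwR w0 * IwR w0 / 2 + h ^ 3 * Eq0) * (1 - kap * h * sg + h * h * Ec) *
      ((g0 + h * h * D0) + h * (u + IwR w0) * (g1 + h * h * D1) + h * h * (u + IwR w0) * (u + IwR w0) / 2 * (g2 + h * h * D2) + h ^ 3 * EB)).
  { rewrite Hq0, Hcp. unfold D0, D1, D2, EB. field. lra. }
  destruct (XY_id h kap (IwR w) (IwR w0) sg u g0 g1 g2 D0 D1 D2 Eqw Eq0 Ec EA EB _ _ Ex Ey) as [EX EY].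
  assert (L : forall z, Rabs z <= 1 -> Rabs z <= K') by (intros; lra).
  assert (L2 : forall z B, Rabs z <= B -> B <= K' -> Rabs z <= K') by (intros; lra).
  destruct (HEXY h kap (IwR w) (IwR w0) sg u g0 g1 g2 D0 D1 D2 Eqw Eq0 Ec EA EB) as [B1 [B2 [B3 [B4 B5]]]];
    try assumption; try (rewrite Rabs_R0; lra); try (apply L; auto; fail); try (eapply L2; [eassumption|]; lra).
  destruct (HEXY h kap (IwR w) (IwR w0) 0 (IZR s) g0 g1 g2 D0 D1 D2 Eqw Eq0 Ec EA EB) as [_ [_ [B3' [B4' B5']]]];
    try assumption; try (rewrite Rabs_R0; lra); try (apply L; auto; fail); try (eapply L2; [eassumption|]; lra).
  assert (HCK : C1 <= K /\ C2 <= K /\ C3 <= K /\ C4 <= K /\ C5 <= K /\ Br <= K).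
  { unfold K. pose proof (Rabs_pos C1); pose proof (Rabs_pos C2);
     pose proof (Rabs_pos C3); pose proof (Rabs_pos C4); pose proof (Rabs_pos C5).
    pose proof (Rle_abs C1); pose proof (Rle_abs C2);
     pose proof (Rle_abs C3); pose proof (Rle_abs C4); pose proof (Rle_abs C5). lra. }
  destruct HCK as [K1 [K2 [K3 [K4 [K5 K6]]]]].
  split; [lra|]. split; [lra|]. split; [lra|]. split; [lra|]. split; [eapply Rle_trans; [exact B4'|exact K4]|]. split; [lra|].
  specialize (Hfe h _ _ g0 _ _ _ _ _ (conj Hhpos Hhf') ltac:(lra) ltac:(eapply Rle_trans; [exact B3|lra]) ltac:(eapply Rle_trans; [exact B4|lra]) ltac:(eapply Rle_trans; [exact B1|lra]) ltac:(eapply Rle_trans; [exact B5|lra]) ltac:(eapply Rle_trans; [exact B2|lra]) EX EY).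
  unfold u in Hfe. rewrite main_affine in Hfe. exact Hfe.
Qed.
End TermEst.

Lemma W_bounds b k dl Iw I0 c : 0 < b < 1 -> Rabs dl <= 1 -> Rabs Iw <= 1 -> Rabs I0 <= 1 ->
  Rabs (W0f b dl c) <= 2 /\ Rabs (W1f b k dl Iw I0 c) <= Rabs k /\ Rabs (W2f b k dl Iw I0 c) <= Rabs k * Rabs k.
Proof.
  intros Hb Hdl HIw HI0.
  assert (Hb1 : Rabs b <= 1) by (rewrite Rabs_pos_eq; lra).
  assert (H1 : Rabs 1 <= 1) by (rewrite Rabs_R1; lra).
  assert (H2 : Rabs (/ 2) <= / 2) by (rewrite Rabs_pos_eq; [lra|]; apply Rlt_le, Rinv_0_lt_compat; lra).
  assert (H4 : Rabs (/ 4) <= / 4) by (rewrite Rabs_pos_eq; [lra|]; apply Rlt_le, Rinv_0_lt_compat; lra).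
  pose proof (Rabs_pos k).
  destruct c as [|[|c]]; unfold W0f, W1f, W2f; (split; [|split]);
    try (rewrite Rabs_R0; nra); (eapply Rle_trans; [bnd|]); nra.
Qed.

Lemma fin_le a p c : a * p * c <= (a * c) * p.
Proof. right; ring. Qed.

Lemma final_alg (k D Kb : R) : 0 < D -> 0 <= Kb -> exists Cq, forall (h b ep dl T : R) (m' : nat) (A1 B1 C1 E1 F1 A2 B2 C2 E2 F2 A3 B3 C3 E3 F3 A4 B4 C4 E4 F4 A5 B5 C5 E5 F5 A6 B6 C6 E6 F6 A7 B7 C7 E7 F7 A8 B8 C8 E8 F8 X : R),
  0 < h <= 1 -> 0 < b < 1 -> Rabs ep <= 1 -> Rabs dl <= 1 ->
  Rabs A1 <= Kb -> Rabs B1 <= Kb -> Rabs C1 <= Kb -> Rabs E1 <= Kb -> Rabs F1 <= Kb ->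
  Rabs A2 <= Kb -> Rabs B2 <= Kb -> Rabs C2 <= Kb -> Rabs E2 <= Kb -> Rabs F2 <= Kb ->
  Rabs A3 <= Kb -> Rabs B3 <= Kb -> Rabs C3 <= Kb -> Rabs E3 <= Kb -> Rabs F3 <= Kb ->
  Rabs A4 <= Kb -> Rabs B4 <= Kb -> Rabs C4 <= Kb -> Rabs E4 <= Kb -> Rabs F4 <= Kb ->
  Rabs A5 <= Kb -> Rabs B5 <= Kb -> Rabs C5 <= Kb -> Rabs E5 <= Kb -> Rabs F5 <= Kb ->
  Rabs A6 <= Kb -> Rabs B6 <= Kb -> Rabs C6 <= Kb -> Rabs E6 <= Kb -> Rabs F6 <= Kb ->
  Rabs A7 <= Kb -> Rabs B7 <= Kb -> Rabs C7 <= Kb -> Rabs E7 <= Kb -> Rabs F7 <= Kb ->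
  Rabs A8 <= Kb -> Rabs B8 <= Kb -> Rabs C8 <= Kb -> Rabs E8 <= Kb -> Rabs F8 <= Kb ->
  W0f b dl 0 * (A1 * (1 - ep)) + W0f b dl 1 * (A2 * (1 - ep)) + W0f b dl 0 * (A3 * (1 - ep)) + W0f b dl 2 * (A4 * (1 - ep)) + W0f b dl 2 * (A5 * (1 - ep)) + W0f b dl 0 * (A6 * (1 - ep)) + W0f b dl 1 * (A7 * (1 - ep)) + W0f b dl 0 * (A8 * (1 - ep)) = 0 ->
  (W1f b k dl 1 1 0 * (A1 * (1 - ep)) + W0f b dl 0 * (B1 - ep * C1)) + (W1f b k dl 1 0 1 * (A2 * (1 - ep)) + W0f b dl 1 * (B2 - ep * C2)) + (W1f b k dl 1 (-1) 0 * (A3 * (1 - ep)) + W0f b dl 0 * (B3 - ep * C3)) + (W1f b k dl 0 1 2 * (A4 * (1 - ep)) + W0f b dl 2 * (B4 - ep * C4)) + (W1f b k dl 0 (-1) 2 * (A5 * (1 - ep)) + W0f b dl 2 * (B5 - ep * C5)) + (W1f b k dl (-1) 1 0 * (A6 * (1 - ep)) + W0f b dl 0 * (B6 - ep * C6)) + (W1f b k dl (-1) 0 1 * (A7 * (1 - ep)) + W0f b dl 1 * (B7 - ep * C7)) + (W1f b k dl (-1) (-1) 0 * (A8 * (1 - ep)) + W0f b dl 0 * (B8 - ep * C8)) = T / (2 * D) ->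
  X = (2 * D / (b * h ^ 3)) * (h * (b * (W0f b dl 0 + h * W1f b k dl 1 1 0 + h ^ 2 * W2f b k dl 1 1 0) * ((h ^ (2 * m' + 1) * A1 + h ^ ((2 * m' + 1) + 1) * B1 + h ^ ((2 * m' + 1) + 2) * E1) + ep * (-1) ^ (2 * m' + 1) * (h ^ (2 * m' + 1) * A1 + h ^ ((2 * m' + 1) + 1) * C1 + h ^ ((2 * m' + 1) + 2) * F1)) + b * (W0f b dl 1 + h * W1f b k dl 1 0 1 + h ^ 2 * W2f b k dl 1 0 1) * ((h ^ (2 * m' + 1) * A2 + h ^ ((2 * m' + 1) + 1) * B2 + h ^ ((2 * m' + 1) + 2) * E2) + ep * (-1) ^ (2 * m' + 1) * (h ^ (2 * m' + 1) * A2 + h ^ ((2 * m' + 1) + 1) * C2 + h ^ ((2 * m' + 1) + 2) * F2)) + b * (W0f b dl 0 + h * W1f b k dl 1 (-1) 0 + h ^ 2 * W2f b k dl 1 (-1) 0) * ((h ^ (2 * m' + 1) * A3 + h ^ ((2 * m' + 1) + 1) * B3 + h ^ ((2 * m' + 1) + 2) * E3) + ep * (-1) ^ (2 * m' + 1) * (h ^ (2 * m' + 1) * A3 + h ^ ((2 * m' + 1) + 1) * C3 + h ^ ((2 * m' + 1) + 2) * F3)) + b * (W0f b dl 2 + h * W1f b k dl 0 1 2 + h ^ 2 * W2f b k dl 0 1 2) * ((h ^ (2 * m' + 1) * A4 + h ^ ((2 * m' + 1) + 1) * B4 + h ^ ((2 * m' + 1) + 2) * E4) + ep * (-1) ^ (2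 * m' + 1) * (h ^ (2 * m' + 1) * A4 + h ^ ((2 * m' + 1) + 1) * C4 + h ^ ((2 * m' + 1) + 2) * F4)) + b * (W0f b dl 2 + h * W1f b k dl 0 (-1) 2 + h ^ 2 * W2f b k dl 0 (-1) 2) * ((h ^ (2 * m' + 1) * A5 + h ^ ((2 * m' + 1) + 1) * B5 + h ^ ((2 * m' + 1) + 2) * E5) + ep * (-1) ^ (2 * m' + 1) * (h ^ (2 * m' + 1) * A5 + h ^ ((2 * m' + 1) + 1) * C5 + h ^ ((2 * m' + 1) + 2) * F5)) + b * (W0f b dl 0 + h * W1f b k dl (-1) 1 0 + h ^ 2 * W2f b k dl (-1) 1 0) * ((h ^ (2 * m' + 1) * A6 + h ^ ((2 * m' + 1) + 1) * B6 + h ^ ((2 * m' + 1) + 2) * E6) + ep * (-1) ^ (2 * m' + 1) * (h ^ (2 * m' + 1) * A6 + h ^ ((2 * m' + 1) + 1) * C6 + h ^ ((2 * m' + 1) + 2) * F6)) + b * (W0f b dl 1 + h * W1f b k dl (-1) 0 1 + h ^ 2 * W2f b k dl (-1) 0 1) * ((h ^ (2 * m' + 1) * A7 + h ^ ((2 * m' + 1) + 1) * B7 + h ^ ((2 * m' + 1) + 2) * E7) + ep * (-1) ^ (2 * m' + 1) * (h ^ (2 * m' + 1) * A7 + h ^ ((2 * m' + 1) + 1) * C7 + h ^ ((2 * m' + 1) + 2) * F7)) + b * (W0f b dl 0 + h * W1f b k dl (-1) (-1) 0 + h ^ 2 * W2f b k dl (-1) (-1) 0) * ((h ^ (2 * m'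 + 1) * A8 + h ^ ((2 * m' + 1) + 1) * B8 + h ^ ((2 * m' + 1) + 2) * E8) + ep * (-1) ^ (2 * m' + 1) * (h ^ (2 * m' + 1) * A8 + h ^ ((2 * m' + 1) + 1) * C8 + h ^ ((2 * m' + 1) + 2) * F8)))) ->
  Rabs (X - h ^ (2 * m') * T) <= Cq * h ^ (2 * m' + 1).
Proof.
  intros HD HKb. eexists. intros h b ep dl T m' A1 B1 C1 E1 F1 A2 B2 C2 E2 F2 A3 B3 C3 E3 F3 A4 B4 C4 E4 F4 A5 B5 C5 E5 F5 A6 B6 C6 E6 F6 A7 B7 C7 E7 F7 A8 B8 C8 E8 F8 X Hh Hb Hep Hdl.
  intros HA1 HB1 HC1 HE1 HF1 HA2 HB2 HC2 HE2 HF2 HA3 HB3 HC3 HE3 HF3 HA4 HB4 HC4 HE4 HF4 HA5 HB5 HC5 HE5 HF5 HA6 HB6 HC6 HE6 HF6 HA7 HB7 HC7 HE7 HF7 HA8 HB8 HC8 HE8 HF8.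
  intros HS0 HS1 HX.
  assert (HT : T = 2 * D * ((W1f b k dl 1 1 0 * (A1 * (1 - ep)) + W0f b dl 0 * (B1 - ep * C1)) + (W1f b k dl 1 0 1 * (A2 * (1 - ep)) + W0f b dl 1 * (B2 - ep * C2)) + (W1f b k dl 1 (-1) 0 * (A3 * (1 - ep)) + W0f b dl 0 * (B3 - ep * C3)) + (W1f b k dl 0 1 2 * (A4 * (1 - ep)) + W0f b dl 2 * (B4 - ep * C4)) + (W1f b k dl 0 (-1) 2 * (A5 * (1 - ep)) + W0f b dl 2 * (B5 - ep * C5)) + (W1f b k dl (-1) 1 0 * (A6 * (1 - ep)) + W0f b dl 0 * (B6 - ep * C6)) + (W1f b k dl (-1) 0 1 * (A7 * (1 - ep)) + W0f b dl 1 * (B7 - ep * C7)) + (W1f b k dl (-1) (-1) 0 * (A8 * (1 - ep)) + W0f b dl 0 * (B8 - ep * C8)))) by (rewrite HS1; field; lra).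
  assert (Eq : X - h ^ (2 * m') * T = 2 * D * h ^ (2 * m' + 1) * ((W2f b k dl 1 1 0 * (A1 * (1 - ep)) + W1f b k dl 1 1 0 * (B1 - ep * C1) + h * W2f b k dl 1 1 0 * (B1 - ep * C1) + (W0f b dl 0 + h * W1f b k dl 1 1 0 + h ^ 2 * W2f b k dl 1 1 0) * (E1 - ep * F1)) + (W2f b k dl 1 0 1 * (A2 * (1 - ep)) + W1f b k dl 1 0 1 * (B2 - ep * C2) + h * W2f b k dl 1 0 1 * (B2 - ep * C2) + (W0f b dl 1 + h * W1f b k dl 1 0 1 + h ^ 2 * W2f b k dl 1 0 1) * (E2 - ep * F2)) + (W2f b k dl 1 (-1) 0 * (A3 * (1 - ep)) + W1f b k dl 1 (-1) 0 * (B3 - ep * C3) + h * W2f b k dl 1 (-1) 0 * (B3 - ep * C3) + (W0f b dl 0 + h * W1f b k dl 1 (-1) 0 + h ^ 2 * W2f b k dl 1 (-1) 0) * (E3 - ep * F3)) + (W2f b k dl 0 1 2 * (A4 * (1 - ep)) + W1f b k dl 0 1 2 * (B4 - ep * C4) + h * W2f b k dl 0 1 2 * (B4 - ep * C4) + (W0f b dl 2 + h * W1f b k dl 0 1 2 + h ^ 2 * W2f b k dl 0 1 2) * (E4 - ep * F4)) + (W2f b k dl 0 (-1) 2 * (A5 * (1 - ep)) + W1f b k dl 0 (-1) 2 * (B5 - ep * C5) + h * W2f b k dl 0 (-1) 2 * (B5 - ep * C5) + (W0f b dl 2 + h * W1f b k dl 0 (-1) 2 + h ^ 2 * W2f b k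 dl 0 (-1) 2) * (E5 - ep * F5)) + (W2f b k dl (-1) 1 0 * (A6 * (1 - ep)) + W1f b k dl (-1) 1 0 * (B6 - ep * C6) + h * W2f b k dl (-1) 1 0 * (B6 - ep * C6) + (W0f b dl 0 + h * W1f b k dl (-1) 1 0 + h ^ 2 * W2f b k dl (-1) 1 0) * (E6 - ep * F6)) + (W2f b k dl (-1) 0 1 * (A7 * (1 - ep)) + W1f b k dl (-1) 0 1 * (B7 - ep * C7) + h * W2f b k dl (-1) 0 1 * (B7 - ep * C7) + (W0f b dl 1 + h * W1f b k dl (-1) 0 1 + h ^ 2 * W2f b k dl (-1) 0 1) * (E7 - ep * F7)) + (W2f b k dl (-1) (-1) 0 * (A8 * (1 - ep)) + W1f b k dl (-1) (-1) 0 * (B8 - ep * C8) + h * W2f b k dl (-1) (-1) 0 * (B8 - ep * C8) + (W0f b dl 0 + h * W1f b k dl (-1) (-1) 0 + h ^ 2 * W2f b k dl (-1) (-1) 0) * (E8 - ep * F8))) + 2 * D * h ^ (2 * m' + 1) / h ^ 2 * (W0f b dl 0 * (A1 * (1 - ep)) + W0f b dl 1 * (A2 * (1 - ep)) + W0f b dl 0 * (A3 * (1 - ep)) + W0f b dl 2 * (A4 * (1 - ep)) + W0f b dl 2 * (A5 * (1 - ep)) + W0f b dl 0 * (A6 * (1 - ep)) + W0f b dl 1 * (A7 * (1 - ep)) + W0f b dl 0 * (A8 * (1 - ep)))).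
  { rewrite HX, HT. rewrite !pow_add. replace ((-1) ^ (2 * m')) with 1 by (rewrite pow_mult; replace ((-1) ^ 2) with 1 by ring; rewrite pow1; auto).
    field. split; lra. }
  rewrite HS0 in Eq.
  assert (Eq' : X - h ^ (2 * m') * T = 2 * D * h ^ (2 * m' + 1) * ((W2f b k dl 1 1 0 * (A1 * (1 - ep)) + W1f b k dl 1 1 0 * (B1 - ep * C1) + h * W2f b k dl 1 1 0 * (B1 - ep * C1) + (W0f b dl 0 + h * W1f b k dl 1 1 0 + h ^ 2 * W2f b k dl 1 1 0) * (E1 - ep * F1)) + (W2f b k dl 1 0 1 * (A2 * (1 - ep)) + W1f b k dl 1 0 1 * (B2 - ep * C2) + h * W2f b k dl 1 0 1 * (B2 - ep * C2) + (W0f b dl 1 + h * W1f b k dl 1 0 1 + h ^ 2 * W2f b k dl 1 0 1) * (E2 - ep * F2)) + (W2f b k dl 1 (-1) 0 * (A3 * (1 - ep)) + W1f b k dl 1 (-1) 0 * (B3 - ep * C3) + h * W2f b k dl 1 (-1) 0 * (B3 - ep * C3) + (W0f b dl 0 + h * W1f b k dl 1 (-1) 0 + h ^ 2 * W2f b k dl 1 (-1) 0) * (E3 - ep * F3)) + (W2f b k dl 0 1 2 * (A4 * (1 - ep)) + W1f b k dl 0 1 2 * (B4 - ep * C4) + h * W2f b k dl 0 1 2 * (B4 - ep * C4) + (W0f b dl 2 + h * W1f b k dl 0 1 2 + h ^ 2 * W2f b k dl 0 1 2) * (E4 - ep * F4)) + (W2f b k dl 0 (-1) 2 * (A5 * (1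 - ep)) + W1f b k dl 0 (-1) 2 * (B5 - ep * C5) + h * W2f b k dl 0 (-1) 2 * (B5 - ep * C5) + (W0f b dl 2 + h * W1f b k dl 0 (-1) 2 + h ^ 2 * W2f b k dl 0 (-1) 2) * (E5 - ep * F5)) + (W2f b k dl (-1) 1 0 * (A6 * (1 - ep)) + W1f b k dl (-1) 1 0 * (B6 - ep * C6) + h * W2f b k dl (-1) 1 0 * (B6 - ep * C6) + (W0f b dl 0 + h * W1f b k dl (-1) 1 0 + h ^ 2 * W2f b k dl (-1) 1 0) * (E6 - ep * F6)) + (W2f b k dl (-1) 0 1 * (A7 * (1 - ep)) + W1f b k dl (-1) 0 1 * (B7 - ep * C7) + h * W2f b k dl (-1) 0 1 * (B7 - ep * C7) + (W0f b dl 1 + h * W1f b k dl (-1) 0 1 + h ^ 2 * W2f b k dl (-1) 0 1) * (E7 - ep * F7)) + (W2f b k dl (-1) (-1) 0 * (A8 * (1 - ep)) + W1f b k dl (-1) (-1) 0 * (B8 - ep * C8) + h * W2f b k dl (-1) (-1) 0 * (B8 - ep * C8) + (W0f b dl 0 + h * W1f b k dl (-1) (-1) 0 + h ^ 2 * W2f b k dl (-1) (-1) 0) * (E8 - ep * F8)))) by (rewrite Eq; field; lra).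
  rewrite Eq'.
  assert (Hhp : 0 < h ^ (2 * m' + 1)) by (apply pow_lt; lra).
  rewrite Rabs_mult, (Rabs_pos_eq (2 * D * h ^ (2 * m' + 1))) by (apply Rmult_le_pos; lra).
  assert (Hh1 : Rabs h <= 1) by (rewrite Rabs_pos_eq; lra).
  assert (Hb1 : Rabs b <= 1) by (rewrite Rabs_pos_eq; lra).
  destruct (W_bounds b k dl 1 1 0 Hb Hdl ltac:(unfold Rabs; destruct Rcase_abs; lra) ltac:(unfold Rabs; destruct Rcase_abs; lra)) as [HW0_1 [HW1_1 HW2_1]].
  destruct (W_bounds b k dl 1 0 1 Hb Hdl ltac:(unfold Rabs; destruct Rcase_abs; lra) ltac:(unfold Rabs; destruct Rcase_abs; lra)) as [HW0_2 [HW1_2 HW2_2]].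
  destruct (W_bounds b k dl 1 (-1) 0 Hb Hdl ltac:(unfold Rabs; destruct Rcase_abs; lra) ltac:(unfold Rabs; destruct Rcase_abs; lra)) as [HW0_3 [HW1_3 HW2_3]].
  destruct (W_bounds b k dl 0 1 2 Hb Hdl ltac:(unfold Rabs; destruct Rcase_abs; lra) ltac:(unfold Rabs; destruct Rcase_abs; lra)) as [HW0_4 [HW1_4 HW2_4]].
  destruct (W_bounds b k dl 0 (-1) 2 Hb Hdl ltac:(unfold Rabs; destruct Rcase_abs; lra) ltac:(unfold Rabs; destruct Rcase_abs; lra)) as [HW0_5 [HW1_5 HW2_5]].
  destruct (W_bounds b k dl (-1) 1 0 Hb Hdl ltac:(unfold Rabs; destruct Rcase_abs; lra) ltac:(unfold Rabs; destruct Rcase_abs; lra)) as [HW0_6 [HW1_6 HW2_6]].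
  destruct (W_bounds b k dl (-1) 0 1 Hb Hdl ltac:(unfold Rabs; destruct Rcase_abs; lra) ltac:(unfold Rabs; destruct Rcase_abs; lra)) as [HW0_7 [HW1_7 HW2_7]].
  destruct (W_bounds b k dl (-1) (-1) 0 Hb Hdl ltac:(unfold Rabs; destruct Rcase_abs; lra) ltac:(unfold Rabs; destruct Rcase_abs; lra)) as [HW0_8 [HW1_8 HW2_8]].
  eassert (HQ : Rabs ((W2f b k dl 1 1 0 * (A1 * (1 - ep)) + W1f b k dl 1 1 0 * (B1 - ep * C1) + h * W2f b k dl 1 1 0 * (B1 - ep * C1) + (W0f b dl 0 + h * W1f b k dl 1 1 0 + h ^ 2 * W2f b k dl 1 1 0) * (E1 - ep * F1)) + (W2f b k dl 1 0 1 * (A2 * (1 - ep)) + W1f b k dl 1 0 1 * (B2 - ep * C2) + h * W2f b k dl 1 0 1 * (B2 - ep * C2) + (W0f b dl 1 + h * W1f b k dl 1 0 1 + h ^ 2 * W2f b k dl 1 0 1) * (E2 - ep * F2)) + (W2f b k dl 1 (-1) 0 * (A3 * (1 - ep)) + W1f b k dl 1 (-1) 0 * (B3 - ep * C3) + h * W2f b k dl 1 (-1) 0 * (B3 - ep * C3) + (W0f b dl 0 + h * W1f b k dl 1 (-1) 0 + h ^ 2 * W2f b k dl 1 (-1) 0) * (E3 - ep * F3)) + (W2f b k dl 0 1 2 * (A4 * (1 - ep)) + W1f b k dl 0 1 2 * (B4 - ep * C4) + h * W2f b k dl 0 1 2 * (B4 - ep * C4) + (W0f b dl 2 + h * W1f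 b k dl 0 1 2 + h ^ 2 * W2f b k dl 0 1 2) * (E4 - ep * F4)) + (W2f b k dl 0 (-1) 2 * (A5 * (1 - ep)) + W1f b k dl 0 (-1) 2 * (B5 - ep * C5) + h * W2f b k dl 0 (-1) 2 * (B5 - ep * C5) + (W0f b dl 2 + h * W1f b k dl 0 (-1) 2 + h ^ 2 * W2f b k dl 0 (-1) 2) * (E5 - ep * F5)) + (W2f b k dl (-1) 1 0 * (A6 * (1 - ep)) + W1f b k dl (-1) 1 0 * (B6 - ep * C6) + h * W2f b k dl (-1) 1 0 * (B6 - ep * C6) + (W0f b dl 0 + h * W1f b k dl (-1) 1 0 + h ^ 2 * W2f b k dl (-1) 1 0) * (E6 - ep * F6)) + (W2f b k dl (-1) 0 1 * (A7 * (1 - ep)) + W1f b k dl (-1) 0 1 * (B7 - ep * C7) + h * W2f b k dl (-1) 0 1 * (B7 - ep * C7) + (W0f b dl 1 + h * W1f b k dl (-1) 0 1 + h ^ 2 * W2f b k dl (-1) 0 1) * (E7 - ep * F7)) + (W2f b k dl (-1) (-1) 0 * (A8 * (1 - ep)) + W1f b k dl (-1) (-1) 0 * (B8 - ep * C8) + h * W2f b k dl (-1) (-1) 0 * (B8 - ep * C8) + (W0f b dl 0 + h * W1f b k dl (-1) (-1) 0 + h ^ 2 * W2f b k dl (-1) (-1) 0) * (E8 - ep * F8))) <= _) by bnd.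
  eapply Rle_trans; [apply Rmult_le_compat_l; [apply Rmult_le_pos; lra|exact HQ]|].
  apply fin_le.
Qed.

Lemma aux_bounds (k K BC : R) (m' : nat) : 0 <= K -> 0 <= BC -> exists CA1 CA2 CA3, forall g0 g1 g2 Ch Chr Iw I0 s,
  Rabs g0 <= K -> Rabs g1 <= K -> Rabs g2 <= K -> Rabs Ch <= BC -> Rabs Chr <= BC ->
  Rabs Iw <= 1 -> Rabs I0 <= 1 -> Rabs s <= 1 ->
  Rabs (a_t k Iw I0 g0 g1) <= K -> Rabs (b_t k Iw I0 0 s g0 g1 g2) <= K -> Rabs (y_t k Iw I0 0 s g0 g1) <= K ->
  Rabs (Ch * a_t k Iw I0 g0 g1 ^ (2 * m' + 1)) <= CA1 /\ Rabs (M1T k Iw I0 s g0 g1 g2 Ch Chr m') <= CA2 /\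
  Rabs (Mdel k Iw I0 g0 g1 g2 Ch Chr m') <= CA3.
Proof. intros HK HBC. do 3 eexists. intros. unfold M1T, Mdel. split; [|split]; bnd. Qed.

Lemma IwR0 : IwR 0 = 1. Proof. reflexivity. Qed.
Lemma IwR1 : IwR 1 = 0. Proof. reflexivity. Qed.
Lemma IwR2 : IwR 2 = -1. Proof. reflexivity. Qed.

Lemma Gsum11 b P f sd k1 l n' (Hd : forall x, f x x = 0) : Gsum b P f sd k1 l n' 1 1 = 0.
Proof.
  unfold Gsum. transitivity (lsum (trits k1) (fun wp : list nat => 0 * nuw b P wp)).
  - apply lsum_ext. intros wp _. unfold Ffun. replace (n' + Iw 1)%Z with n' by (unfold Iw; simpl; lia). rewrite Hd. ring.
  - rewrite lsum_scal. ring.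
Qed.

Theorem mainTheorem3
  (D v : R) (HD : 0 < D)
  (b : R) (Hb : 0 <= b)
  (beta : R -> R)
  (Hbeta : forall dr, 0 < dr -> 0 < beta dr < 1)
  (HbetaO : exists cb h1, 0 < cb /\ 0 < h1 /\
              forall dr, 0 < dr < h1 -> beta dr <= cb * Rpower dr b)
  (k : nat) (Hk : (1 <= k)%nat)
  (rho rho_r rho_rr : R -> R -> R)
  (Hrho : smooth2 rho)
  (Hrho_r : forall r t, derivable_pt_lim (fun s => rho s t) r (rho_r r t))
  (Hrho_rr : forall r t, derivable_pt_lim (fun s => rho_r s t) r (rho_rr r t))
  (m' : nat)
  (f : R -> R -> R) (Hf : smooth2 f)
  (Hfsym : (forall x y, f x y = f y x) \/ (forall x y, f x y = - f y x))
  (Chat Chat_rho : R -> R)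
  (HC : smooth1 Chat)
  (HCd : forall y, derivable_pt_lim Chat y (Chat_rho y))
  (HCnz : exists y, Chat y <> 0)
  (HCbd : exists B, forall y, Rabs (Chat y) <= B)
  (Hfexp : forall M, 0 < M -> exists c e, 0 < e /\
      forall x y, Rabs ((x + y) / 2) <= M -> Rabs ((x - y) / 2) < e ->
        Rabs (f x y - Chat ((x + y) / 2) * ((x - y) / 2) ^ (2 * m' + 1))
          <= c * Rabs ((x - y) / 2) ^ (2 * m' + 3))
  (eps delta : R)
  (Heps : eps = 1 \/ eps = -1) (Hdelta : delta = 1 \/ delta = -1)
  (Hed : eps = -1 \/ delta = 1) :
  forall R0 T0 : R, exists Cst h0, 0 < h0 /\
    forall (dr : R) (n l : Z), 0 < dr < h0 ->
      Rabs (IZR n * dr) <= R0 ->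
      Rabs (IZR l * tau_of D (beta dr) dr) <= T0 ->
      let tau := tau_of D (beta dr) dr in
      let sd := fun (n' l' : Z) => rho (IZR n' * dr) (IZR l' * tau) in
      let r := IZR n * dr in
      let t := IZR l * tau in
      Rabs (avgA D v (beta dr) dr k (2 * m' + 1) eps delta f sd n l
            - dr ^ (2 * m') *
              Tsum D v (beta dr) (v * dr / D) eps delta m'
                   (rho r t) (rho_r r t) (rho_rr r t)
                   (Chat (rho r t)) (Chat_rho (rho r t)))
        <= Cst * dr ^ (2 * m' + 1).
Proof.
  intros R0 T0.
  destruct k as [|k1]; [lia|].
  assert (Hfexp' : forall M, 0 < M -> exists c e, 0 < e /\ forall x y, Rabs ((x + y) / 2) <= M -> Rabs ((x - y) / 2) < e ->
     Rabs (f x y - Chat ((x + y) / 2) * ((x - y) / 2) ^ (2 * m' + 1)) <= c * Rabs ((x - y) / 2) ^ (2 * m' + 1 + 2)).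
  { intros M HM. destruct (Hfexp M HM) as [c [e [He H]]]. exists c, e. split; auto. intros x y H1 H2.
    replace (2 * m' + 1 + 2)%nat with (2 * m' + 3)%nat by lia. apply H; auto. }
  assert (Hdiag : forall x, f x x = 0).
  { intros x. destruct (Hfexp (Rabs x + 1)) as [c [e [He H]]]; [pose proof (Rabs_pos x); lra|].
    specialize (H x x). replace ((x + x) / 2) with x in H by field. replace ((x - x) / 2) with 0 in H by field.
    rewrite Rabs_R0 in H. specialize (H ltac:(lra) He).
    rewrite pow_i in H by lia. rewrite pow_i in H by lia. revert H. unfold Rabs. destruct Rcase_abs; intros; lra. }
  destruct (term_est D v HD beta Hbeta k1 rho rho_r rho_rr Hrho Hrho_r Hrho_rr m' f Chat Chat_rho HC HCd Hfexp' R0 T0)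
    as [Cf [K [h0 [Hh0 [HK Hterm]]]]].
  destruct (chat_facts Chat Chat_rho HC HCd K) as [BC [HBC HCf]].
  destruct (aux_bounds (v / D) K BC m' HK HBC) as [CA1 [CA2 [CA3 Haux]]].
  set (Kb := Rabs CA1 + Rabs CA2 + Rabs CA3 + Rabs Cf + Rabs CA3 * INR k1 * (Rabs v / (2 * D))).
  assert (HKb : 0 <= Kb).
  { unfold Kb. pose proof (Rabs_pos CA1). pose proof (Rabs_pos CA2). pose proof (Rabs_pos CA3). pose proof (Rabs_pos Cf).
    pose proof (pos_INR k1). pose proof (Rabs_pos v).
    assert (0 <= Rabs v / (2 * D)) by (apply Rmult_le_pos; [lra|apply Rlt_le, Rinv_0_lt_compat; lra]).
    assert (0 <= Rabs CA3 * INR k1 * (Rabs v / (2 * D))) by (apply Rmult_le_pos; [apply Rmult_le_pos|]; lra). lra. }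
  destruct (final_alg (v / D) D Kb HD HKb) as [Cq Hfin].
  set (h1 := Rmin h0 (Rmin 1 (D / (Rabs v + 1)))).
  assert (Hh1 : 0 < h1).
  { unfold h1. pose proof (Rabs_pos v). repeat apply Rmin_glb_lt; auto; try lra. apply Rdiv_lt_0_compat; lra. }
  exists Cq, h1. split; auto.
  intros dr n l Hdr Hr Ht tau sd r t.
  assert (Hdr0 : 0 < dr < h0) by (pose proof (Rmin_l h0 (Rmin 1 (D / (Rabs v + 1)))); fold h1 in H; lra).
  assert (Hdr1 : dr <= 1).
  { pose proof (Rmin_r h0 (Rmin 1 (D / (Rabs v + 1)))). pose proof (Rmin_l 1 (D / (Rabs v + 1))). fold h1 in H. lra. }
  assert (HP : Rabs (v * dr / D) <= 1).
  { pose proof (Rmin_r h0 (Rmin 1 (D / (Rabs v + 1)))). pose proof (Rmin_r 1 (D / (Rabs v + 1))). fold h1 in H.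
    pose proof (Rabs_pos v).
    assert (Hlt : dr < D / (Rabs v + 1)) by lra.
    apply (Rmult_lt_compat_r (Rabs v + 1)) in Hlt; [|lra]. unfold Rdiv in Hlt.
    rewrite Rmult_assoc, Rinv_l, Rmult_1_r in Hlt by lra.
    unfold Rdiv. rewrite !Rabs_mult, Rabs_inv, (Rabs_pos_eq dr), (Rabs_pos_eq D) by lra.
    apply Rmult_le_reg_r with D; [lra|]. rewrite Rmult_assoc, Rinv_l by lra. nra. }
  destruct (Hbeta dr (proj1 Hdr)) as [Hb0 Hb1].
  assert (Hnu : 0 <= nu (beta dr) (v * dr / D) 0 /\ 0 <= nu (beta dr) (v * dr / D) 1 /\ 0 <= nu (beta dr) (v * dr / D) 2).
  { apply abs_le_b in HP. unfold nu, eta; simpl. repeat split; nra. }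
  destruct Hnu as [Hnu0 [Hnu1 Hnu2]].
  assert (Hnud : nu (beta dr) (v * dr / D) 0 - nu (beta dr) (v * dr / D) 2 = beta dr * v * dr / (2 * D)).
  { unfold nu, eta; simpl. field. lra. }
  set (g0 := rho r t). set (g1 := rho_r r t). set (g2 := rho_rr r t).
  assert (HG : forall w w0 s, (w = 0 \/ w = 1 \/ w = 2)%nat -> (w0 = 0 \/ w0 = 1 \/ w0 = 2)%nat -> (s = 0 \/ s = Iw w)%Z ->
     Rabs g0 <= K /\ Rabs g1 <= K /\ Rabs g2 <= K /\
     Rabs (a_t (v / D) (IwR w) (IwR w0) g0 g1) <= K /\
     Rabs (b_t (v / D) (IwR w) (IwR w0) 0 (IZR s) g0 g1 g2) <= K /\
     Rabs (y_t (v / D) (IwR w) (IwR w0) 0 (IZR s) g0 g1) <= K /\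
     exists EG, Rabs EG <= Kb /\
     Gsum (beta dr) (v * dr / D) f sd k1 l (n + s) w w0 =
       dr ^ (2 * m' + 1) * (Chat g0 * a_t (v / D) (IwR w) (IwR w0) g0 g1 ^ (2 * m' + 1))
       + dr ^ (2 * m' + 1 + 1) * M1T (v / D) (IwR w) (IwR w0) (IZR s) g0 g1 g2 (Chat g0) (Chat_rho g0) m'
       + dr ^ (2 * m' + 1 + 2) * EG).
  { intros w w0 s Hw Hw0 Hs.
    assert (Hwp0 : In (repeat 1%nat k1) (trits k1)).
    { clear. induction k1; simpl; auto. apply in_flat_map. exists (repeat 1%nat k1). split; auto. simpl; auto. }
    destruct (Hterm dr n l w w0 s _ Hdr0 Hr Ht Hw Hw0 Hs Hwp0) as [Hg0 [Hg1 [Hg2 [Ha [Hbt [Hyt _]]]]]].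
    fold tau sd r t g0 g1 g2 in Hg0, Hg1, Hg2, Ha, Hbt, Hyt.
    repeat (split; [assumption|]).
    destruct (HCf g0 0 Hg0 ltac:(rewrite Rabs_R0; lra)) as [HCh [HChr _]].
    assert (HIw : Rabs (IwR w) <= 1) by (apply IwR_abs; auto).
    assert (HI0 : Rabs (IwR w0) <= 1) by (apply IwR_abs; auto).
    assert (HsR : Rabs (IZR s) <= 1).
    { apply abs_IZR_le1. destruct Hs as [-> | ->]; [auto|]. unfold Iw. destruct Hw as [-> | [-> | ->] ]; simpl; auto. }
    destruct (Haux g0 g1 g2 (Chat g0) (Chat_rho g0) (IwR w) (IwR w0) (IZR s) Hg0 Hg1 Hg2 HCh HChr HIw HI0 HsR Ha Hbt Hyt)
      as [HA1 [HA2 HA3]].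
    set (main := dr ^ (2 * m' + 1) * (Chat g0 * a_t (v / D) (IwR w) (IwR w0) g0 g1 ^ (2 * m' + 1))
       + dr ^ (2 * m' + 1 + 1) * M1T (v / D) (IwR w) (IwR w0) (IZR s) g0 g1 g2 (Chat g0) (Chat_rho g0) m').
    set (Md := Mdel (v / D) (IwR w) (IwR w0) g0 g1 g2 (Chat g0) (Chat_rho g0) m').
    set (err := fun wp => Ffun (beta dr) (v * dr / D) f sd l (n + s) w (w0 :: wp) - (main + dr ^ (2 * m' + 1 + 1) * (sigR wp * Md))).
    assert (Herr : forall wp, In wp (trits k1) -> Rabs (err wp) <= Cf * dr ^ (2 * m' + 1 + 2)).
    { intros wp Hwp. destruct (Hterm dr n l w w0 s wp Hdr0 Hr Ht Hw Hw0 Hs Hwp) as [_ [_ [_ [_ [_ [_ H]]]]]].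
      unfold err, main, Md. fold tau sd r t g0 g1 g2 in H.
      replace (dr ^ (2 * m' + 1) * (Chat g0 * a_t (v / D) (IwR w) (IwR w0) g0 g1 ^ (2 * m' + 1)) +
        dr ^ (2 * m' + 1 + 1) * M1T (v / D) (IwR w) (IwR w0) (IZR s) g0 g1 g2 (Chat g0) (Chat_rho g0) m' +
        dr ^ (2 * m' + 1 + 1) * (sigR wp * Mdel (v / D) (IwR w) (IwR w0) g0 g1 g2 (Chat g0) (Chat_rho g0) m'))
      with (dr ^ (2 * m' + 1) * (Chat g0 * a_t (v / D) (IwR w) (IwR w0) g0 g1 ^ (2 * m' + 1)) +
        dr ^ (2 * m' + 1 + 1) * (M1T (v / D) (IwR w) (IwR w0) (IZR s) g0 g1 g2 (Chat g0) (Chat_rho g0) m' +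
        sigR wp * Mdel (v / D) (IwR w) (IwR w0) g0 g1 g2 (Chat g0) (Chat_rho g0) m')) by ring.
      exact H. }
    assert (Hpow : 0 < dr ^ (2 * m' + 1 + 2)) by (apply pow_lt; lra).
    set (SE := lsum (trits k1) (fun wp => nuw (beta dr) (v * dr / D) wp * err wp)).
    assert (HSE : Rabs SE <= Cf * dr ^ (2 * m' + 1 + 2)).
    { unfold SE. eapply Rle_trans; [apply lsum_abs|].
      apply Rle_trans with (lsum (trits k1) (fun wp => (Cf * dr ^ (2 * m' + 1 + 2)) * nuw (beta dr) (v * dr / D) wp)).
      - apply lsum_le. intros wp Hwp. destruct (trits_prop k1 wp Hwp) as [_ HF].
        pose proof (nuw_nonneg (beta dr) (v * dr / D) wp Hnu0 Hnu1 Hnu2 HF).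
        rewrite Rabs_mult, (Rabs_pos_eq (nuw _ _ wp)) by auto. rewrite Rmult_comm. apply Rmult_le_compat_r; auto.
      - rewrite lsum_scal, lsum_nuw. lra. }
    exists (Md * INR k1 * (beta dr * v / (2 * D)) + SE / dr ^ (2 * m' + 1 + 2)). split.
    - eapply Rle_trans; [apply Rabs_triang|]. unfold Kb.
      assert (Hs1 : Rabs (SE / dr ^ (2 * m' + 1 + 2)) <= Rabs Cf).
      { unfold Rdiv. rewrite Rabs_mult, Rabs_inv, (Rabs_pos_eq (dr ^ _)) by lra.
        apply Rmult_le_reg_r with (dr ^ (2 * m' + 1 + 2)); auto. rewrite Rmult_assoc, Rinv_l, Rmult_1_r by lra.
        pose proof (Rle_abs Cf). nra. }
      assert (Hs2 : Rabs (Md * INR k1 * (beta dr * v / (2 * D))) <= Rabs CA3 * INR k1 * (Rabs v / (2 * D))).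
      { rewrite !Rabs_mult, (Rabs_pos_eq (INR k1)) by apply pos_INR.
        assert (Rabs (beta dr * v / (2 * D)) <= Rabs v / (2 * D)).
        { unfold Rdiv. rewrite !Rabs_mult, Rabs_inv, (Rabs_pos_eq (beta dr)), (Rabs_pos_eq (2 * D)) by lra.
          assert (0 <= Rabs v * / (2 * D)) by (apply Rmult_le_pos; [apply Rabs_pos|apply Rlt_le, Rinv_0_lt_compat; lra]).
          nra. }
        pose proof (Rabs_pos Md). pose proof (pos_INR k1). pose proof (Rle_abs CA3).
        apply Rmult_le_compat; try (apply Rmult_le_pos); auto; try apply Rabs_pos.
        apply Rmult_le_compat_r; auto. unfold Md. lra. }
      pose proof (Rabs_pos CA1). pose proof (Rabs_pos CA2). pose proof (Rabs_pos CA3). lra.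
    - unfold Gsum.
      transitivity (lsum (trits k1) (fun wp => nuw (beta dr) (v * dr / D) wp * (main + dr ^ (2 * m' + 1 + 1) * (sigR wp * Md)) +
          nuw (beta dr) (v * dr / D) wp * err wp)).
      { apply lsum_ext. intros wp _. unfold err. ring. }
      rewrite lsum_plus. fold SE.
      transitivity (lsum (trits k1) (fun wp => main * nuw (beta dr) (v * dr / D) wp) +
        lsum (trits k1) (fun wp => (dr ^ (2 * m' + 1 + 1) * Md) * (nuw (beta dr) (v * dr / D) wp * sigR wp)) + SE).
      { f_equal. rewrite <- lsum_plus. apply lsum_ext. intros; ring. }
      rewrite !lsum_scal, lsum_nuw, lsum_nuw_sig, Hnud. unfold main.
      rewrite !pow_add. field. repeat split; try lra; try (apply pow_nonzero; lra). }

  destruct (HG 0%nat 0%nat 0%Z ltac:(lia) ltac:(lia) ltac:(auto)) as [_ [_ [_ [Ha000 [Hb000 [Hy000 [EG000 [HEG000 Eq000]]]]]]]].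
  rewrite ?IwR0, ?IwR1, ?IwR2 in Ha000, Hb000, Hy000, Eq000.
  rewrite Z.add_0_r in Eq000.
  change (IZR (Iw 0)) with (IwR 0) in Hb000, Hy000, Eq000. rewrite ?IwR0, ?IwR1, ?IwR2 in Hb000, Hy000, Eq000.
  destruct (HG 0%nat 0%nat (Iw 0) ltac:(lia) ltac:(lia) ltac:(auto)) as [_ [_ [_ [Ha001 [Hb001 [Hy001 [EG001 [HEG001 Eq001]]]]]]]].
  rewrite ?IwR0, ?IwR1, ?IwR2 in Ha001, Hb001, Hy001, Eq001.
  
  change (IZR (Iw 0)) with (IwR 0) in Hb001, Hy001, Eq001. rewrite ?IwR0, ?IwR1, ?IwR2 in Hb001, Hy001, Eq001.
  destruct (HG 0%nat 1%nat 0%Z ltac:(lia) ltac:(lia) ltac:(auto)) as [_ [_ [_ [Ha010 [Hb010 [Hy010 [EG010 [HEG010 Eq010]]]]]]]].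
  rewrite ?IwR0, ?IwR1, ?IwR2 in Ha010, Hb010, Hy010, Eq010.
  rewrite Z.add_0_r in Eq010.
  change (IZR (Iw 0)) with (IwR 0) in Hb010, Hy010, Eq010. rewrite ?IwR0, ?IwR1, ?IwR2 in Hb010, Hy010, Eq010.
  destruct (HG 0%nat 1%nat (Iw 0) ltac:(lia) ltac:(lia) ltac:(auto)) as [_ [_ [_ [Ha011 [Hb011 [Hy011 [EG011 [HEG011 Eq011]]]]]]]].
  rewrite ?IwR0, ?IwR1, ?IwR2 in Ha011, Hb011, Hy011, Eq011.
  
  change (IZR (Iw 0)) with (IwR 0) in Hb011, Hy011, Eq011. rewrite ?IwR0, ?IwR1, ?IwR2 in Hb011, Hy011, Eq011.
  destruct (HG 0%nat 2%nat 0%Z ltac:(lia) ltac:(lia) ltac:(auto)) as [_ [_ [_ [Ha020 [Hb020 [Hy020 [EG020 [HEG020 Eq020]]]]]]]].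
  rewrite ?IwR0, ?IwR1, ?IwR2 in Ha020, Hb020, Hy020, Eq020.
  rewrite Z.add_0_r in Eq020.
  change (IZR (Iw 0)) with (IwR 0) in Hb020, Hy020, Eq020. rewrite ?IwR0, ?IwR1, ?IwR2 in Hb020, Hy020, Eq020.
  destruct (HG 0%nat 2%nat (Iw 0) ltac:(lia) ltac:(lia) ltac:(auto)) as [_ [_ [_ [Ha021 [Hb021 [Hy021 [EG021 [HEG021 Eq021]]]]]]]].
  rewrite ?IwR0, ?IwR1, ?IwR2 in Ha021, Hb021, Hy021, Eq021.
  
  change (IZR (Iw 0)) with (IwR 0) in Hb021, Hy021, Eq021. rewrite ?IwR0, ?IwR1, ?IwR2 in Hb021, Hy021, Eq021.
  destruct (HG 1%nat 0%nat 0%Z ltac:(lia) ltac:(lia) ltac:(auto)) as [_ [_ [_ [Ha100 [Hb100 [Hy100 [EG100 [HEG100 Eq100]]]]]]]].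
  rewrite ?IwR0, ?IwR1, ?IwR2 in Ha100, Hb100, Hy100, Eq100.
  rewrite Z.add_0_r in Eq100.
  change (IZR (Iw 1)) with (IwR 1) in Hb100, Hy100, Eq100. rewrite ?IwR0, ?IwR1, ?IwR2 in Hb100, Hy100, Eq100.
  destruct (HG 1%nat 0%nat (Iw 1) ltac:(lia) ltac:(lia) ltac:(auto)) as [_ [_ [_ [Ha101 [Hb101 [Hy101 [EG101 [HEG101 Eq101]]]]]]]].
  rewrite ?IwR0, ?IwR1, ?IwR2 in Ha101, Hb101, Hy101, Eq101.
  
  change (IZR (Iw 1)) with (IwR 1) in Hb101, Hy101, Eq101. rewrite ?IwR0, ?IwR1, ?IwR2 in Hb101, Hy101, Eq101.
  destruct (HG 1%nat 2%nat 0%Z ltac:(lia) ltac:(lia) ltac:(auto)) as [_ [_ [_ [Ha120 [Hb120 [Hy120 [EG120 [HEG120 Eq120]]]]]]]].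
  rewrite ?IwR0, ?IwR1, ?IwR2 in Ha120, Hb120, Hy120, Eq120.
  rewrite Z.add_0_r in Eq120.
  change (IZR (Iw 1)) with (IwR 1) in Hb120, Hy120, Eq120. rewrite ?IwR0, ?IwR1, ?IwR2 in Hb120, Hy120, Eq120.
  destruct (HG 1%nat 2%nat (Iw 1) ltac:(lia) ltac:(lia) ltac:(auto)) as [_ [_ [_ [Ha121 [Hb121 [Hy121 [EG121 [HEG121 Eq121]]]]]]]].
  rewrite ?IwR0, ?IwR1, ?IwR2 in Ha121, Hb121, Hy121, Eq121.
  
  change (IZR (Iw 1)) with (IwR 1) in Hb121, Hy121, Eq121. rewrite ?IwR0, ?IwR1, ?IwR2 in Hb121, Hy121, Eq121.
  destruct (HG 2%nat 0%nat 0%Z ltac:(lia) ltac:(lia) ltac:(auto)) as [_ [_ [_ [Ha200 [Hb200 [Hy200 [EG200 [HEG200 Eq200]]]]]]]].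
  rewrite ?IwR0, ?IwR1, ?IwR2 in Ha200, Hb200, Hy200, Eq200.
  rewrite Z.add_0_r in Eq200.
  change (IZR (Iw 2)) with (IwR 2) in Hb200, Hy200, Eq200. rewrite ?IwR0, ?IwR1, ?IwR2 in Hb200, Hy200, Eq200.
  destruct (HG 2%nat 0%nat (Iw 2) ltac:(lia) ltac:(lia) ltac:(auto)) as [_ [_ [_ [Ha201 [Hb201 [Hy201 [EG201 [HEG201 Eq201]]]]]]]].
  rewrite ?IwR0, ?IwR1, ?IwR2 in Ha201, Hb201, Hy201, Eq201.
  
  change (IZR (Iw 2)) with (IwR 2) in Hb201, Hy201, Eq201. rewrite ?IwR0, ?IwR1, ?IwR2 in Hb201, Hy201, Eq201.
  destruct (HG 2%nat 1%nat 0%Z ltac:(lia) ltac:(lia) ltac:(auto)) as [_ [_ [_ [Ha210 [Hb210 [Hy210 [EG210 [HEG210 Eq210]]]]]]]].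
  rewrite ?IwR0, ?IwR1, ?IwR2 in Ha210, Hb210, Hy210, Eq210.
  rewrite Z.add_0_r in Eq210.
  change (IZR (Iw 2)) with (IwR 2) in Hb210, Hy210, Eq210. rewrite ?IwR0, ?IwR1, ?IwR2 in Hb210, Hy210, Eq210.
  destruct (HG 2%nat 1%nat (Iw 2) ltac:(lia) ltac:(lia) ltac:(auto)) as [_ [_ [_ [Ha211 [Hb211 [Hy211 [EG211 [HEG211 Eq211]]]]]]]].
  rewrite ?IwR0, ?IwR1, ?IwR2 in Ha211, Hb211, Hy211, Eq211.
  
  change (IZR (Iw 2)) with (IwR 2) in Hb211, Hy211, Eq211. rewrite ?IwR0, ?IwR1, ?IwR2 in Hb211, Hy211, Eq211.
  destruct (HG 2%nat 2%nat 0%Z ltac:(lia) ltac:(lia) ltac:(auto)) as [_ [_ [_ [Ha220 [Hb220 [Hy220 [EG220 [HEG220 Eq220]]]]]]]].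
  rewrite ?IwR0, ?IwR1, ?IwR2 in Ha220, Hb220, Hy220, Eq220.
  rewrite Z.add_0_r in Eq220.
  change (IZR (Iw 2)) with (IwR 2) in Hb220, Hy220, Eq220. rewrite ?IwR0, ?IwR1, ?IwR2 in Hb220, Hy220, Eq220.
  destruct (HG 2%nat 2%nat (Iw 2) ltac:(lia) ltac:(lia) ltac:(auto)) as [_ [_ [_ [Ha221 [Hb221 [Hy221 [EG221 [HEG221 Eq221]]]]]]]].
  rewrite ?IwR0, ?IwR1, ?IwR2 in Ha221, Hb221, Hy221, Eq221.
  
  change (IZR (Iw 2)) with (IwR 2) in Hb221, Hy221, Eq221. rewrite ?IwR0, ?IwR1, ?IwR2 in Hb221, Hy221, Eq221.
  destruct (HG 0%nat 0%nat 0%Z ltac:(lia) ltac:(lia) ltac:(auto)) as [Hg0 [Hg1 [Hg2 _]]].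
  destruct (HCf g0 0 Hg0 ltac:(rewrite Rabs_R0; lra)) as [HCh [HChr _]].

  destruct (Haux g0 g1 g2 (Chat g0) (Chat_rho g0) 1 1 0 Hg0 Hg1 Hg2 HCh HChr ltac:(unfold Rabs; destruct Rcase_abs; lra) ltac:(unfold Rabs; destruct Rcase_abs; lra) ltac:(unfold Rabs; destruct Rcase_abs; lra) Ha000 Hb000 Hy000) as [HA1 [HB1 _]].
  destruct (Haux g0 g1 g2 (Chat g0) (Chat_rho g0) 1 1 1 Hg0 Hg1 Hg2 HCh HChr ltac:(unfold Rabs; destruct Rcase_abs; lra) ltac:(unfold Rabs; destruct Rcase_abs; lra) ltac:(unfold Rabs; destruct Rcase_abs; lra) Ha001 Hb001 Hy001) as [_ [HC1 _]].
  destruct (Haux g0 g1 g2 (Chat g0) (Chat_rho g0) 1 0 0 Hg0 Hg1 Hg2 HCh HChr ltac:(unfold Rabs; destruct Rcase_abs; lra) ltac:(unfold Rabs; destruct Rcase_abs; lra) ltac:(unfold Rabs; destruct Rcase_abs; lra) Ha010 Hb010 Hy010) as [HA2 [HB2 _]].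
  destruct (Haux g0 g1 g2 (Chat g0) (Chat_rho g0) 1 0 1 Hg0 Hg1 Hg2 HCh HChr ltac:(unfold Rabs; destruct Rcase_abs; lra) ltac:(unfold Rabs; destruct Rcase_abs; lra) ltac:(unfold Rabs; destruct Rcase_abs; lra) Ha011 Hb011 Hy011) as [_ [HC2 _]].
  destruct (Haux g0 g1 g2 (Chat g0) (Chat_rho g0) 1 (-1) 0 Hg0 Hg1 Hg2 HCh HChr ltac:(unfold Rabs; destruct Rcase_abs; lra) ltac:(unfold Rabs; destruct Rcase_abs; lra) ltac:(unfold Rabs; destruct Rcase_abs; lra) Ha020 Hb020 Hy020) as [HA3 [HB3 _]].
  destruct (Haux g0 g1 g2 (Chat g0) (Chat_rho g0) 1 (-1) 1 Hg0 Hg1 Hg2 HCh HChr ltac:(unfold Rabs; destruct Rcase_abs; lra) ltac:(unfold Rabs; destruct Rcase_abs; lra) ltac:(unfold Rabs; destruct Rcase_abs; lra) Ha021 Hb021 Hy021) as [_ [HC3 _]].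
  destruct (Haux g0 g1 g2 (Chat g0) (Chat_rho g0) 0 1 0 Hg0 Hg1 Hg2 HCh HChr ltac:(unfold Rabs; destruct Rcase_abs; lra) ltac:(unfold Rabs; destruct Rcase_abs; lra) ltac:(unfold Rabs; destruct Rcase_abs; lra) Ha100 Hb100 Hy100) as [HA4 [HB4 _]].
  destruct (Haux g0 g1 g2 (Chat g0) (Chat_rho g0) 0 1 0 Hg0 Hg1 Hg2 HCh HChr ltac:(unfold Rabs; destruct Rcase_abs; lra) ltac:(unfold Rabs; destruct Rcase_abs; lra) ltac:(unfold Rabs; destruct Rcase_abs; lra) Ha101 Hb101 Hy101) as [_ [HC4 _]].
  destruct (Haux g0 g1 g2 (Chat g0) (Chat_rho g0) 0 (-1) 0 Hg0 Hg1 Hg2 HCh HChr ltac:(unfold Rabs; destruct Rcase_abs; lra) ltac:(unfold Rabs; destruct Rcase_abs; lra) ltac:(unfold Rabs; destruct Rcase_abs; lra) Ha120 Hb120 Hy120) as [HA5 [HB5 _]].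
  destruct (Haux g0 g1 g2 (Chat g0) (Chat_rho g0) 0 (-1) 0 Hg0 Hg1 Hg2 HCh HChr ltac:(unfold Rabs; destruct Rcase_abs; lra) ltac:(unfold Rabs; destruct Rcase_abs; lra) ltac:(unfold Rabs; destruct Rcase_abs; lra) Ha121 Hb121 Hy121) as [_ [HC5 _]].
  destruct (Haux g0 g1 g2 (Chat g0) (Chat_rho g0) (-1) 1 0 Hg0 Hg1 Hg2 HCh HChr ltac:(unfold Rabs; destruct Rcase_abs; lra) ltac:(unfold Rabs; destruct Rcase_abs; lra) ltac:(unfold Rabs; destruct Rcase_abs; lra) Ha200 Hb200 Hy200) as [HA6 [HB6 _]].
  destruct (Haux g0 g1 g2 (Chat g0) (Chat_rho g0) (-1) 1 (-1) Hg0 Hg1 Hg2 HCh HChr ltac:(unfold Rabs; destruct Rcase_abs; lra) ltac:(unfold Rabs; destruct Rcase_abs; lra) ltac:(unfold Rabs; destruct Rcase_abs; lra) Ha201 Hb201 Hy201) as [_ [HC6 _]].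
  destruct (Haux g0 g1 g2 (Chat g0) (Chat_rho g0) (-1) 0 0 Hg0 Hg1 Hg2 HCh HChr ltac:(unfold Rabs; destruct Rcase_abs; lra) ltac:(unfold Rabs; destruct Rcase_abs; lra) ltac:(unfold Rabs; destruct Rcase_abs; lra) Ha210 Hb210 Hy210) as [HA7 [HB7 _]].
  destruct (Haux g0 g1 g2 (Chat g0) (Chat_rho g0) (-1) 0 (-1) Hg0 Hg1 Hg2 HCh HChr ltac:(unfold Rabs; destruct Rcase_abs; lra) ltac:(unfold Rabs; destruct Rcase_abs; lra) ltac:(unfold Rabs; destruct Rcase_abs; lra) Ha211 Hb211 Hy211) as [_ [HC7 _]].
  destruct (Haux g0 g1 g2 (Chat g0) (Chat_rho g0) (-1) (-1) 0 Hg0 Hg1 Hg2 HCh HChr ltac:(unfold Rabs; destruct Rcase_abs; lra) ltac:(unfold Rabs; destruct Rcase_abs; lra) ltac:(unfold Rabs; destruct Rcase_abs; lra) Ha220 Hb220 Hy220) as [HA8 [HB8 _]].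
  destruct (Haux g0 g1 g2 (Chat g0) (Chat_rho g0) (-1) (-1) (-1) Hg0 Hg1 Hg2 HCh HChr ltac:(unfold Rabs; destruct Rcase_abs; lra) ltac:(unfold Rabs; destruct Rcase_abs; lra) ltac:(unfold Rabs; destruct Rcase_abs; lra) Ha221 Hb221 Hy221) as [_ [HC8 _]].
  assert (HKbA : forall z c, Rabs z <= c -> c <= Rabs c -> Rabs c <= Kb -> Rabs z <= Kb) by (intros; lra).
  assert (HKb1 : Rabs CA1 <= Kb /\ Rabs CA2 <= Kb).
  { unfold Kb. pose proof (Rabs_pos CA1). pose proof (Rabs_pos CA2). pose proof (Rabs_pos CA3). pose proof (Rabs_pos Cf).
    pose proof (pos_INR k1). pose proof (Rabs_pos v).
    assert (0 <= Rabs v / (2 * D)) by (apply Rmult_le_pos; [lra|apply Rlt_le, Rinv_0_lt_compat; lra]).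
    assert (0 <= Rabs CA3 * INR k1 * (Rabs v / (2 * D))) by (apply Rmult_le_pos; [apply Rmult_le_pos|]; lra). lra. }
  destruct HKb1 as [HKbA1 HKbA2].
  pose proof (Rle_abs CA1). pose proof (Rle_abs CA2).
  apply (Hfin dr (beta dr) eps delta _ m' (Chat g0 * a_t (v / D) 1 1 g0 g1 ^ (2 * m' + 1)) (M1T (v / D) 1 1 0 g0 g1 g2 (Chat g0) (Chat_rho g0) m') (M1T (v / D) 1 1 1 g0 g1 g2 (Chat g0) (Chat_rho g0) m') EG000 EG001 (Chat g0 * a_t (v / D) 1 0 g0 g1 ^ (2 * m' + 1)) (M1T (v / D) 1 0 0 g0 g1 g2 (Chat g0) (Chat_rho g0) m') (M1T (v / D) 1 0 1 g0 g1 g2 (Chat g0) (Chat_rho g0) m') EG010 EG011 (Chat g0 * a_t (v / D) 1 (-1) g0 g1 ^ (2 * m' + 1)) (M1T (v / D) 1 (-1) 0 g0 g1 g2 (Chat g0) (Chat_rho g0) m') (M1T (v / D) 1 (-1) 1 g0 g1 g2 (Chat g0) (Chat_rho g0) m') EG020 EG021 (Chat g0 * a_t (v / D) 0 1 g0 g1 ^ (2 * m' + 1)) (M1T (v / D) 0 1 0 g0 g1 g2 (Chat g0) (Chat_rho g0) m') (M1T (v / D) 0 1 0 g0 g1 g2 (Chat g0) (Chat_rho g0) m') EG100 EG101 (Chat g0 * a_t (v / D) 0 (-1) g0 g1 ^ (2 * m' + 1)) (M1T (v / D) 0 (-1) 0 g0 g1 g2 (Chat g0) (Chat_rho g0) m')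 (M1T (v / D) 0 (-1) 0 g0 g1 g2 (Chat g0) (Chat_rho g0) m') EG120 EG121 (Chat g0 * a_t (v / D) (-1) 1 g0 g1 ^ (2 * m' + 1)) (M1T (v / D) (-1) 1 0 g0 g1 g2 (Chat g0) (Chat_rho g0) m') (M1T (v / D) (-1) 1 (-1) g0 g1 g2 (Chat g0) (Chat_rho g0) m') EG200 EG201 (Chat g0 * a_t (v / D) (-1) 0 g0 g1 ^ (2 * m' + 1)) (M1T (v / D) (-1) 0 0 g0 g1 g2 (Chat g0) (Chat_rho g0) m') (M1T (v / D) (-1) 0 (-1) g0 g1 g2 (Chat g0) (Chat_rho g0) m') EG210 EG211 (Chat g0 * a_t (v / D) (-1) (-1) g0 g1 ^ (2 * m' + 1)) (M1T (v / D) (-1) (-1) 0 g0 g1 g2 (Chat g0) (Chat_rho g0) m') (M1T (v / D) (-1) (-1) (-1) g0 g1 g2 (Chat g0) (Chat_rho g0) m') EG220 EG221).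
  all: try (split; lra).
  all: try (eapply Rle_trans; [eassumption|]; lra).
  all: try (destruct Heps as [-> | ->]; rewrite ?Rabs_R1, ?Rabs_Ropp, ?Rabs_R1; unfold Rabs; destruct Rcase_abs; lra).
  all: try (destruct Hdelta as [-> | ->]; unfold Rabs; destruct Rcase_abs; lra).
  - apply KI0. lra.
  - rewrite Tsum_closed. apply KI1. lra.
  - unfold avgA. rewrite Kval_decomp. rewrite !lsum3.
    rewrite !Gsum11 by exact Hdiag.
    rewrite Eq000, Eq001.
    rewrite Eq010, Eq011.
    rewrite Eq020, Eq021.
    rewrite Eq100, Eq101.
    rewrite Eq120, Eq121.
    rewrite Eq200, Eq201.
    rewrite Eq210, Eq211.
    rewrite Eq220, Eq221.
    replace ((eta (beta dr) (v * dr / D) 0 + delta * nu (beta dr) (v * dr / D) 0) * nu (beta dr) (v * dr / D) 0) with (beta dr * (W0f (beta dr) delta 0 + dr * W1f (beta dr) (v / D) delta 1 1 0 + dr ^ 2 * W2f (beta dr) (v / D) delta 1 1 0)) by (unfold eta, nu, W0f, W1f, W2f; simpl; field; lra).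
    replace ((eta (beta dr) (v * dr / D) 0 + delta * nu (beta dr) (v * dr / D) 0) * nu (beta dr) (v * dr / D) 1) with (beta dr * (W0f (beta dr) delta 1 + dr * W1f (beta dr) (v / D) delta 1 0 1 + dr ^ 2 * W2f (beta dr) (v / D) delta 1 0 1)) by (unfold eta, nu, W0f, W1f, W2f; simpl; field; lra).
    replace ((eta (beta dr) (v * dr / D) 0 + delta * nu (beta dr) (v * dr / D) 0) * nu (beta dr) (v * dr / D) 2) with (beta dr * (W0f (beta dr) delta 0 + dr * W1f (beta dr) (v / D) delta 1 (-1) 0 + dr ^ 2 * W2f (beta dr) (v / D) delta 1 (-1) 0)) by (unfold eta, nu, W0f, W1f, W2f; simpl; field; lra).
    replace ((eta (beta dr) (v * dr / D) 1 + delta * nu (beta dr) (v * dr / D) 1) * nu (beta dr) (v * dr / D) 0) with (beta dr * (W0f (beta dr) delta 2 + dr * W1f (beta dr) (v / D) delta 0 1 2 + dr ^ 2 * W2f (beta dr) (v / D) delta 0 1 2)) by (unfold eta, nu, W0f, W1f, W2f; simpl; field; lra).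
    replace ((eta (beta dr) (v * dr / D) 1 + delta * nu (beta dr) (v * dr / D) 1) * nu (beta dr) (v * dr / D) 2) with (beta dr * (W0f (beta dr) delta 2 + dr * W1f (beta dr) (v / D) delta 0 (-1) 2 + dr ^ 2 * W2f (beta dr) (v / D) delta 0 (-1) 2)) by (unfold eta, nu, W0f, W1f, W2f; simpl; field; lra).
    replace ((eta (beta dr) (v * dr / D) 2 + delta * nu (beta dr) (v * dr / D) 2) * nu (beta dr) (v * dr / D) 0) with (beta dr * (W0f (beta dr) delta 0 + dr * W1f (beta dr) (v / D) delta (-1) 1 0 + dr ^ 2 * W2f (beta dr) (v / D) delta (-1) 1 0)) by (unfold eta, nu, W0f, W1f, W2f; simpl; field; lra).
    replace ((eta (beta dr) (v * dr / D) 2 + delta * nu (beta dr) (v * dr / D) 2) * nu (beta dr) (v * dr / D) 1) with (beta dr * (W0f (beta dr) delta 1 + dr * W1f (beta dr) (v / D) delta (-1) 0 1 + dr ^ 2 * W2f (beta dr) (v / D) delta (-1) 0 1)) by (unfold eta, nu, W0f, W1f, W2f; simpl; field; lra).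
    replace ((eta (beta dr) (v * dr / D) 2 + delta * nu (beta dr) (v * dr / D) 2) * nu (beta dr) (v * dr / D) 2) with (beta dr * (W0f (beta dr) delta 0 + dr * W1f (beta dr) (v / D) delta (-1) (-1) 0 + dr ^ 2 * W2f (beta dr) (v / D) delta (-1) (-1) 0)) by (unfold eta, nu, W0f, W1f, W2f; simpl; field; lra).
    unfold tau_of. field. split; lra.
Qed.
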